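(* Assume: (A1) for each $j\in N$: (i) there exists $x^{s,*}_j$ with $f_j(x^{s,*}_j,0)=0$; (ii) for every constant $\bar\omega_j\in\mathbb{R}$, every compact invariant set of $\dot x^s_j=f_j(x^s_j,-\bar\omega_j)$ consists only of equilibrium points; (A2) there exists at least one bus $j\in N$ such that whenever $f_j(\bar x^s_j,-\bar\omega_j)=0$ for constants $\bar x^s_j,\bar\omega_j$, then $\bar\omega_j=0$. Let $z^*=(x^*,\sigma^* )$, $x^*=(\eta^*,\omega^*,x^{s,*})$, be an equilibrium of the hybrid system $\mathcal H=(C,f,D,g)$ (then $\omega^*=0$, $\sigma^*=0$) such that (A3) for each $j\in N$, the system $\dot x^s_j=f_j(x^s_j,u)$, $s_j=g_j(x^s_j,u)$ (input $u=-\omega_j$) is locally input strictly passive around the input $u=0$ and the point $x^{s,*}_j$, with a storage function $V^S_j$ having a strict local minimum at $x^{s,*}_j$; (A4) $|\eta^*_{ij}|<\pi/2$ for all $(i,j)\in E$. Then there exists an open neighborhood $S$ of $x^*$ such that every solution $z=(x,\sigma)$ of $\mathcal H$ with $x(0,0)\in S$ and $\sigma_j(0,0)\in\mathcal I_j(\omega_j(0,0))$ for all $j$ converges, as $t+\ell\to\infty$ along its hybrid time domain, to the set of equilibria of $\mathcal H$; in particular $\omega\to0_{|N|}$ and $\sigma\to0_{|N|}$.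
   Context: Network model. $(N,E)$ is a connected directed graph with $N=\{1,\dots,|N|\}$, $E\subseteq N\times N$, with arbitrary orientation: if $(i,j)\in E$ then $(j,i)\notin E$. For $j\in N$, ''$i:i\to j$'' ranges over $i$ with $(i,j)\in E$ and ''$k:j\to k$'' over $k$ with $(j,k)\in E$. Constants: $M_j>0$, $p^L_j\in\mathbb{R}$ ($j\in N$), $B_{ij}>0$ ($(i,j)\in E$). Continuous state $x=(\eta,\omega,x^s)\in\mathbb{R}^n$ with $\eta_{ij}\in\mathbb{R}$ ($(i,j)\in E$), $\omega_j\in\mathbb{R}$, $x^s_j\in\mathbb{R}^{n_j}$ ($j\in N$), $n=|E|+|N|+\sum_jn_j$; $p_{ij}=B_{ij}\sin\eta_{ij}$, $s_j=g_j(x^s_j,-\omega_j)$, where $f_j:\mathbb{R}^{n_j}\times\mathbb{R}\to\mathbb{R}^{n_j}$, $g_j:\mathbb{R}^{n_j}\times\mathbb{R}\to\mathbb{R}$ are globally Lipschitz. Hysteretic loads as a hybrid system. For each $j$ constants $\overline d_j\ge0$ and thresholds $\omega^1_j>\omega^0_j>0$ are given. ${\rm sgn}(a)=1$ if $a\ge0$ and $-1$ otherwise. The discrete state is $\sigma\in P^{|N|}$, $P=\{-1,0,1\}$, and $z=(x,\sigma)$. Let $\mathcal I_j(\omega_j)=\{{\rm sgn}(\omega_j)\}$ if $|\omega_j|>\omega^1_j$, $\{0\}$ if $|\omega_j|<\omega^0_j$, $\{0,{\rm sgn}(\omega_j)\}$ if $\omega^0_j\le|\omega_j|\le\omega^1_j$;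 $\Lambda=C=\{z\in\mathbb{R}^n\times P^{|N|}:\sigma_j\in\mathcal I_j(\omega_j)\ \forall j\}$. Flow map $f$ on $C$: $\dot\eta_{ij}=\omega_i-\omega_j$; $M_j\dot\omega_j=-p^L_j+s_j-\overline d_j\sigma_j-\sum_{k:j\to k}p_{jk}+\sum_{i:i\to j}p_{ij}$; $\dot x^s_j=f_j(x^s_j,-\omega_j)$; $\dot\sigma_j=0$. Jump set $D$: the set of $z\in\Lambda$ such that for some $j$, either ($|\omega_j|=\omega^1_j$ and $\sigma_j=0$) or ($|\omega_j|=\omega^0_j$ and $\sigma_j={\rm sgn}(\omega_j)$). Jump map $g$ on $D$: $x^+=x$; $\sigma_j^+={\rm sgn}(\omega_j)$ if $|\omega_j|=\omega^1_j$ and $\sigma_j=0$, $\sigma_j^+=0$ if $|\omega_j|=\omega^0_j$ and $\sigma_j={\rm sgn}(\omega_j)$, $\sigma_j^+=\sigma_j$ otherwise. A point $z^*$ is an equilibrium of $\mathcal H$ if $f(z^* )=0$ whenever $z^*\in C$ and $g(z^* )=z^*$ whenever $z^*\in D$. Hybrid solutions. A hybrid time domain is a subset $K\subseteq\mathbb{R}_{\ge0}\times\mathbb{N}_0$ that is a union of a finite or infinite sequence of sets $[t_\ell,t_{\ell+1}]\times\{\ell\}$ ($0=t_0\le t_1\le\dots$), the last one (if any) possibly of the form $[t_\ell,t_{\ell+1})\times\{\ell\}$ or $[t_\ell,\infty)\times\{\ell\}$. A solution of $\mathcal H$ is a map $z:K\to\mathbb{R}^n\times P^{|N|}$ on a hybrid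 time domain with $z(0,0)\in C\cup D$, such that for each $\ell$, $t\mapsto z(t,\ell)$ is locally absolutely continuous on $T_\ell=\{t:(t,\ell)\in K\}$, and if $T_\ell$ has nonempty interior then $z(t,\ell)\in C$ for all $t$ in the interior and $\dot z(t,\ell)=f(z(t,\ell))$ for almost all $t\in T_\ell$; and whenever $(t,\ell),(t,\ell+1)\in K$, $z(t,\ell)\in D$ and $z(t,\ell+1)=g(z(t,\ell))$. Solutions are taken maximal (not extendable to a solution on a strictly larger hybrid time domain). Passivity. The system $\dot x^s_j=f_j(x^s_j,u)$, $s_j=g_j(x^s_j,u)$ is locally input strictly passive around the constant input $\bar u$ and point $\bar x^s_j$ if there exist open neighborhoods $\Omega_j$ of $\bar u$ and $X^s_j$ of $\bar x^s_j$, a continuously differentiable positive semidefinite function $V^S_j:\mathbb{R}^{n_j}\to\mathbb{R}$ (storage function) and a positive definite function $\phi_j:\mathbb{R}\to\mathbb{R}$ such that for all $u\in\Omega_j$ and $x^s_j\in X^s_j$: $\frac{\partial V^S_j}{\partial x^s_j}(x^s_j)\,f_j(x^s_j,u)\le (u-\bar u)(g_j(x^s_j,u)-\bar s_j)-\phi_j(u-\bar u)$, where $\bar s_j=g_j(\bar x^s_j,\bar u)$. *)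

(* Defs.v *)
From Stdlib Require Vectors.Fin.
From Stdlib Require Import Reals Lra ZArith Relations.
From Stdlib Require Import Relations.Relation_Operators.
Open Scope R_scope.

Fixpoint fsum (n : nat) : (Fin.t n -> R) -> R :=
  match n return (Fin.t n -> R) -> R with
  | O => fun _ => 0
  | S m => fun f => f Fin.F1 + fsum m (fun i => f (Fin.FS i))
  end.

Fixpoint rsum (n : nat) (f : nat -> R) : R :=
  match n with O => 0 | S m => rsum m f + f m end.

Definition Vec (n : nat) := Fin.t n -> R.
Definition vnorm {n} (v : Vec n) : R := fsum n (fun i => Rabs (v i)).
Definition vsub {n} (v w : Vec n) : Vec n := fun i => v i - w i.
Definition vdot {n} (v w : Vec n) : R := fsum n (fun i => v i * w i).

Definition vopen {n} (X : Vec n -> Prop) : Prop :=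
  forall x, X x -> exists d, 0 < d /\ forall y, vnorm (vsub y x) < d -> X y.
Definition ropen (O : R -> Prop) : Prop :=
  forall x, O x -> exists d, 0 < d /\ forall y, Rabs (y - x) < d -> O y.

(* compact subsets of R^n: closed and bounded (Heine-Borel) *)
Definition vcompact {n} (M : Vec n -> Prop) : Prop :=
  (exists r, forall x, M x -> vnorm x <= r) /\
  (forall x, (forall eps, 0 < eps -> exists y, M y /\ vnorm (vsub x y) < eps) -> M x).

Definition C1_with_grad {n} (V : Vec n -> R) (G : Vec n -> Vec n) : Prop :=
  (forall x eps, 0 < eps -> exists d, 0 < d /\ forall y, vnorm (vsub y x) < d ->
      Rabs (V y - V x - vdot (G x) (vsub y x)) <= eps * vnorm (vsub y x)) /\
  (forall x eps, 0 < eps -> exists d, 0 < d /\ forall y, vnorm (vsub y x) < d ->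
      vnorm (vsub (G y) (G x)) < eps).

Definition ode_solution {n} (F : Vec n -> Vec n) (phi : R -> Vec n) : Prop :=
  forall t i, derivable_pt_lim (fun s => phi s i) t (F (phi t) i).

Definition invariant_set {n} (F : Vec n -> Vec n) (M : Vec n -> Prop) : Prop :=
  forall phi, ode_solution F phi -> M (phi 0) -> forall t, M (phi t).

Definition pos_def (phi : R -> R) : Prop :=
  phi 0 = 0 /\ forall u, u <> 0 -> 0 < phi u.

Definition loc_ISP {n} (f : Vec n -> R -> Vec n) (g : Vec n -> R -> R)
    (ub : R) (xb : Vec n) (V : Vec n -> R) : Prop :=
  exists (Om : R -> Prop) (X : Vec n -> Prop) (G : Vec n -> Vec n) (phi : R -> R),
    ropen Om /\ Om ub /\ vopen X /\ X xb /\
    C1_with_grad V G /\ (forall x, 0 <= V x) /\ pos_def phi /\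
    forall u x, Om u -> X x ->
      vdot (G x) (f x u) <= (u - ub) * (g x u - g xb ub) - phi (u - ub).

Definition strict_local_min {n} (V : Vec n -> R) (xb : Vec n) : Prop :=
  exists d, 0 < d /\ forall y, 0 < vnorm (vsub y xb) < d -> V xb < V y.

(* Buses are Fin.t nN (paper: {1,..,|N|}); edges are Fin.t nE, edge e
   being the ordered pair (src e, dst e). *)
Record Net := mkNet {
  nN : nat;
  nE : nat;
  src : Fin.t nE -> Fin.t nN;
  dst : Fin.t nE -> Fin.t nN;
  nd : Fin.t nN -> nat;
  fs : forall j, Vec (nd j) -> R -> Vec (nd j);
  gs : forall j, Vec (nd j) -> R -> R;
  Mc : Fin.t nN -> R;
  pL : Fin.t nN -> R;
  Bc : Fin.t nE -> R;
  dbar : Fin.t nN -> R;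
  w0 : Fin.t nN -> R;
  w1 : Fin.t nN -> R
}.

Definition adjacent (Nw : Net) (i j : Fin.t (nN Nw)) : Prop :=
  exists e, (src Nw e = i /\ dst Nw e = j) \/ (src Nw e = j /\ dst Nw e = i).

Definition globally_lipschitz {n} (f : Vec n -> R -> Vec n) (g : Vec n -> R -> R) : Prop :=
  exists L, forall x y u v,
    vnorm (vsub (f x u) (f y v)) <= L * (vnorm (vsub x y) + Rabs (u - v)) /\
    Rabs (g x u - g y v) <= L * (vnorm (vsub x y) + Rabs (u - v)).

Definition net_assumptions (Nw : Net) : Prop :=
  (forall e e', src Nw e = src Nw e' -> dst Nw e = dst Nw e' -> e = e') /\
  (* arbitrary orientation: (i,j) in E -> (j,i) not in E (so no self loops) *)
  (forall e e', ~ (src Nw e = dst Nw e' /\ dst Nw e = src Nw e')) /\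
  (forall i j, clos_refl_trans _ (adjacent Nw) i j) /\
  (forall j, 0 < Mc Nw j) /\
  (forall e, 0 < Bc Nw e) /\
  (forall j, 0 <= dbar Nw j) /\
  (forall j, 0 < w0 Nw j < w1 Nw j) /\
  (forall j, globally_lipschitz (fs Nw j) (gs Nw j)).

Record state (Nw : Net) := mkState {
  eta : Fin.t (nE Nw) -> R;
  om  : Fin.t (nN Nw) -> R;
  xs  : forall j, Vec (nd Nw j)
}.
Arguments mkState {Nw}.
Arguments eta {Nw}.
Arguments om {Nw}.
Arguments xs {Nw}.

(* hybrid state z = (x, sigma), sigma_j in {-1,0,1} encoded in Z *)
Record hstate (Nw : Net) := mkH { hx : state Nw; sg : Fin.t (nN Nw) -> Z }.
Arguments mkH {Nw}.
Arguments hx {Nw}.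
Arguments sg {Nw}.

Definition sgn (a : R) : Z := if Rle_dec 0 a then 1%Z else (-1)%Z.

Definition inI (w0j w1j w : R) (s : Z) : Prop :=
  (w1j < Rabs w /\ s = sgn w) \/
  (Rabs w < w0j /\ s = 0%Z) \/
  (w0j <= Rabs w <= w1j /\ (s = 0%Z \/ s = sgn w)).

Definition inC {Nw} (z : hstate Nw) : Prop :=
  forall j, inI (w0 Nw j) (w1 Nw j) (om (hx z) j) (sg z j).

Definition inD {Nw} (z : hstate Nw) : Prop :=
  inC z /\ exists j,
    (Rabs (om (hx z) j) = w1 Nw j /\ sg z j = 0%Z) \/
    (Rabs (om (hx z) j) = w0 Nw j /\ sg z j = sgn (om (hx z) j)).

Definition pflow {Nw} (x : state Nw) (e : Fin.t (nE Nw)) : R := Bc Nw e * sin (eta x e).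

Definition flow_eta {Nw} (z : hstate Nw) (e : Fin.t (nE Nw)) : R :=
  om (hx z) (src Nw e) - om (hx z) (dst Nw e).

Definition flow_om {Nw} (z : hstate Nw) (j : Fin.t (nN Nw)) : R :=
  let x := hx z in
  ( - pL Nw j + gs Nw j (xs x j) (- om x j) - dbar Nw j * IZR (sg z j)
    - fsum (nE Nw) (fun e => if Fin.eq_dec (src Nw e) j then pflow x e else 0)
    + fsum (nE Nw) (fun e => if Fin.eq_dec (dst Nw e) j then pflow x e else 0) )
  / Mc Nw j.

Definition flow_xs {Nw} (z : hstate Nw) (j : Fin.t (nN Nw)) : Vec (nd Nw j) :=
  fs Nw j (xs (hx z) j) (- om (hx z) j).

Definition jump_sg {Nw} (z : hstate Nw) (j : Fin.t (nN Nw)) : Z :=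
  let w := om (hx z) j in
  if Req_EM_T (Rabs w) (w1 Nw j) then
    (if Z.eq_dec (sg z j) 0 then sgn w
     else if Req_EM_T (Rabs w) (w0 Nw j) then
            (if Z.eq_dec (sg z j) (sgn w) then 0%Z else sg z j)
          else sg z j)
  else if Req_EM_T (Rabs w) (w0 Nw j) then
    (if Z.eq_dec (sg z j) (sgn w) then 0%Z else sg z j)
  else sg z j.

Definition jump {Nw} (z : hstate Nw) : hstate Nw := mkH (hx z) (jump_sg z).

Definition equilibrium {Nw} (z : hstate Nw) : Prop :=
  (inC z \/ inD z) /\
  (inC z -> (forall e, flow_eta z e = 0) /\ (forall j, flow_om z j = 0) /\
            (forall j k, flow_xs z j k = 0)) /\
  (inD z -> jump z = z).

Inductive last_kind := LClosed | LOpen | LInf.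

Definition last_piece (k : last_kind) (a b t : R) : Prop :=
  match k with
  | LClosed => a <= t <= b
  | LOpen => a <= t < b
  | LInf => a <= t
  end.

Definition hybrid_time_domain (K : R -> nat -> Prop) : Prop :=
  exists tt : nat -> R, tt O = 0 /\ (forall l, tt l <= tt (S l)) /\
   ( (forall t l, K t l <-> tt l <= t <= tt (S l))
   \/ exists (J : nat) (k : last_kind), forall t l,
        K t l <-> ((l < J)%nat /\ tt l <= t <= tt (S l)) \/
                  (l = J /\ last_piece k (tt J) (tt (S J)) t)).

Definition abs_cont_on (phi : R -> R) (a b : R) : Prop :=
  forall eps, 0 < eps -> exists d, 0 < d /\
    forall (n : nat) (u v : nat -> R),
      (forall i, (i < n)%nat -> a <= u i <= v i /\ v i <= b) ->
      (forall i, (S i < n)%nat -> v i <= u (S i)) ->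
      rsum n (fun i => v i - u i) < d ->
      rsum n (fun i => Rabs (phi (v i) - phi (u i))) < eps.

Definition null_set (A : R -> Prop) : Prop :=
  forall eps, 0 < eps -> exists a b : nat -> R,
    (forall i, a i <= b i) /\
    (forall t, A t -> exists i, a i < t < b i) /\
    (forall n, rsum n (fun i => b i - a i) <= eps).

Definition flow_deriv_at {Nw} (z : R -> nat -> hstate Nw) (l : nat) (t : R) : Prop :=
  (forall e, derivable_pt_lim (fun s => eta (hx (z s l)) e) t (flow_eta (z t l) e)) /\
  (forall j, derivable_pt_lim (fun s => om (hx (z s l)) j) t (flow_om (z t l) j)) /\
  (forall j k, derivable_pt_lim (fun s => xs (hx (z s l)) j k) t (flow_xs (z t l) j k)).

Definition flow_ok {Nw} (K : R -> nat -> Prop) (z : R -> nat -> hstate Nw) (l : nat) : Prop :=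
  (forall a b, K a l -> K b l -> a <= b ->
     (forall e, abs_cont_on (fun s => eta (hx (z s l)) e) a b) /\
     (forall j, abs_cont_on (fun s => om (hx (z s l)) j) a b) /\
     (forall j k, abs_cont_on (fun s => xs (hx (z s l)) j k) a b)) /\
  (forall t t', K t l -> K t' l -> sg (z t l) = sg (z t' l)) /\
  (forall t, (exists d, 0 < d /\ forall s, Rabs (s - t) < d -> K s l) -> inC (z t l)) /\
  null_set (fun t => K t l /\ ~ flow_deriv_at z l t).

Definition is_solution {Nw} (K : R -> nat -> Prop) (z : R -> nat -> hstate Nw) : Prop :=
  hybrid_time_domain K /\ K 0 O /\
  (inC (z 0 O) \/ inD (z 0 O)) /\
  (forall l, flow_ok K z l) /\
  (forall t l, K t l -> K t (S l) -> inD (z t l) /\ z t (S l) = jump (z t l)).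

Definition maximal_solution {Nw} (K : R -> nat -> Prop) (z : R -> nat -> hstate Nw) : Prop :=
  is_solution K z /\
  forall K' z', is_solution K' z' ->
    (forall t l, K t l -> K' t l /\ z' t l = z t l) ->
    (forall t l, K' t l -> K t l).

Definition xclose {Nw} (d : R) (x y : state Nw) : Prop :=
  (forall e, Rabs (eta x e - eta y e) < d) /\
  (forall j, Rabs (om x j - om y j) < d) /\
  (forall j k, Rabs (xs x j k - xs y j k) < d).

Definition zclose {Nw} (d : R) (z1 z2 : hstate Nw) : Prop :=
  xclose d (hx z1) (hx z2) /\ forall j, Rabs (IZR (sg z1 j) - IZR (sg z2 j)) < d.

Definition open_states {Nw} (S : state Nw -> Prop) : Prop :=
  forall x, S x -> exists d, 0 < d /\ forall y, xclose d x y -> S y.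

Definition converges_to_equilibria {Nw} (K : R -> nat -> Prop) (z : R -> nat -> hstate Nw) : Prop :=
  forall eps, 0 < eps -> exists T, forall t l, K t l -> T <= t + INR l ->
    exists ze, equilibrium ze /\ zclose eps (z t l) ze.

Definition omega_sigma_to_zero {Nw} (K : R -> nat -> Prop) (z : R -> nat -> hstate Nw) : Prop :=
  (forall eps, 0 < eps -> exists T, forall t l, K t l -> T <= t + INR l ->
     forall j, Rabs (om (hx (z t l)) j) < eps) /\
  (forall eps, 0 < eps -> exists T, forall t l, K t l -> T <= t + INR l ->
     forall j, Rabs (IZR (sg (z t l) j)) < eps).

(* Main.v *)
Require Import Defs.
From Stdlib Require Import Reals Lra Lia ZArith List ClassicalEpsilon Classical FunctionalExtensionality.
From Stdlib Require Import Relations.Relation_Operators.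
Open Scope R_scope.

Lemma fsum_ext n (f g : Fin.t n -> R) : (forall i, f i = g i) -> fsum n f = fsum n g.
Proof. revert f g; induction n; simpl; intros f g H; auto. rewrite H, (IHn _ (fun i => g (Fin.FS i))); auto. Qed.

Lemma fsum_le n (f g : Fin.t n -> R) : (forall i, f i <= g i) -> fsum n f <= fsum n g.
Proof. revert f g; induction n; simpl; intros f g H. lra.
 assert (H0: forall i, f (Fin.FS i) <= g (Fin.FS i)) by auto.
 specialize (IHn (fun i => f (Fin.FS i)) (fun i => g (Fin.FS i)) H0). specialize (H Fin.F1). lra. Qed.

Lemma fsum_plus n (f g : Fin.t n -> R) : fsum n (fun i => f i + g i) = fsum n f + fsum n g.
Proof. revert f g; induction n; simpl; intros f g. lra. rewrite IHn. lra. Qed.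

Lemma fsum_scal n c (f : Fin.t n -> R) : fsum n (fun i => c * f i) = c * fsum n f.
Proof. revert f; induction n; simpl; intros f. lra. rewrite IHn. lra. Qed.

Lemma fsum_opp n (f : Fin.t n -> R) : fsum n (fun i => - f i) = - fsum n f.
Proof. revert f; induction n; simpl; intros f. lra. rewrite IHn. lra. Qed.

Lemma fsum_minus n (f g : Fin.t n -> R) : fsum n (fun i => f i - g i) = fsum n f - fsum n g.
Proof. revert f g; induction n; simpl; intros f g. lra. rewrite IHn. lra. Qed.

Lemma fsum_zero n (f : Fin.t n -> R) : (forall i, f i = 0) -> fsum n f = 0.
Proof. intro H. rewrite (fsum_ext n f (fun _ => 0)); auto. clear. induction n; simpl; auto. rewrite IHn; lra. Qed.

Lemma fsum_nonneg n (f : Fin.t n -> R) : (forall i, 0 <= f i) -> 0 <= fsum n f.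
Proof. intro H. replace 0 with (fsum n (fun _ => 0)). apply fsum_le; auto. apply fsum_zero; auto. Qed.

Lemma fsum_const n c : fsum n (fun _ => c) = INR n * c.
Proof. induction n; simpl fsum. simpl; lra. rewrite IHn, S_INR. lra. Qed.

Lemma fsum_bound n (f : Fin.t n -> R) c : (forall i, f i <= c) -> fsum n f <= INR n * c.
Proof. intro H. rewrite <- fsum_const. apply fsum_le; auto. Qed.

Lemma fsum_abs n (f : Fin.t n -> R) : Rabs (fsum n f) <= fsum n (fun i => Rabs (f i)).
Proof. revert f; induction n; simpl; intros f. rewrite Rabs_R0; lra.
 eapply Rle_trans. apply Rabs_triang. specialize (IHn (fun i => f (Fin.FS i))). lra. Qed.

Lemma fsum_term n (f : Fin.t n -> R) i : (forall j, 0 <= f j) -> f i <= fsum n f.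
Proof. revert f i; induction n; intros f i H. inversion i. simpl.
 revert f H. pattern i. apply Fin.caseS'. intros f H. pose proof (fsum_nonneg n (fun i => f (Fin.FS i))). simpl in H0. assert (forall i0, 0 <= f (Fin.FS i0)) by auto. specialize (H0 H1). lra.
 intros p f H. specialize (IHn (fun i => f (Fin.FS i)) p). assert (forall i0, 0 <= f (Fin.FS i0)) by auto. specialize (IHn H0). specialize (H Fin.F1). lra. Qed.

Lemma fsum_swap n m (f : Fin.t n -> Fin.t m -> R) :
  fsum n (fun i => fsum m (fun j => f i j)) = fsum m (fun j => fsum n (fun i => f i j)).
Proof. revert m f; induction n; intros m f; simpl.
 rewrite fsum_zero; auto.
 rewrite IHn. rewrite <- fsum_plus. reflexivity. Qed.

Lemma fsum_delta n (k : Fin.t n) (g : Fin.t n -> R) :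
  fsum n (fun j => if Fin.eq_dec k j then g j else 0) = g k.
Proof. revert k g; induction n; intros k g. inversion k. simpl.
 revert g. pattern k. apply Fin.caseS'.
 - intros g. destruct (Fin.eq_dec Fin.F1 Fin.F1) as [_|C]; [|congruence].
   rewrite fsum_zero. lra. intro i. destruct (Fin.eq_dec Fin.F1 (Fin.FS i)) as [C|]; auto. inversion C.
 - intros p g. destruct (Fin.eq_dec (Fin.FS p) Fin.F1) as [C|_]. inversion C.
   rewrite <- (IHn p (fun i => g (Fin.FS i))). rewrite Rplus_0_l. apply fsum_ext. intro i.
   destruct (Fin.eq_dec (Fin.FS p) (Fin.FS i)) as [E|E]; destruct (Fin.eq_dec p i) as [E'|E']; auto.
   apply Fin.FS_inj in E. congruence. subst. congruence. Qed.

Lemma fin_min n (P : Fin.t n -> R -> Prop) :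
  (forall i d d', 0 < d' <= d -> P i d -> P i d') -> (forall i, exists d, 0 < d /\ P i d) ->
  exists d, 0 < d /\ forall i, P i d.
Proof. revert P; induction n; intros P Hm H. exists 1; split; [lra|]. intro i; inversion i.
 destruct (H Fin.F1) as [d1 [H1 H1']].
 destruct (IHn (fun i => P (Fin.FS i))) as [d2 [H2 H2']]. intros; eapply Hm; eauto. intros; apply H.
 exists (Rmin d1 d2). split. apply Rmin_pos; auto. intro i. pattern i. apply Fin.caseS'.
 eapply Hm; [|apply H1']. split. apply Rmin_pos; auto. apply Rmin_l.
 intro p. eapply Hm; [|apply H2']. split. apply Rmin_pos; auto. apply Rmin_r. Qed.

Lemma fin_max n (P : Fin.t n -> R -> Prop) :
  (forall i d d', d <= d' -> P i d -> P i d') -> (forall i, exists d, P i d) ->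
  exists d, forall i, P i d.
Proof. intros Hm H. destruct (fin_min n (fun i d => P i (/d))) as [d [Hd Hd']].
 intros i d d' [H1 H2] H3. eapply Hm; [|apply H3]. apply Rinv_le_contravar; lra.
 intro i. destruct (H i) as [d Hd]. exists (/ (Rabs d + 1)). split. apply Rinv_0_lt_compat. pose proof (Rabs_pos d); lra.
 rewrite Rinv_inv. eapply Hm; [|apply Hd]. pose proof (Rle_abs d); lra.
 exists (/d). auto. Qed.

Lemma vnorm_nonneg n (v : Vec n) : 0 <= vnorm v.
Proof. unfold vnorm. apply fsum_nonneg. intro; apply Rabs_pos. Qed.

Lemma vnorm_coord n (v : Vec n) k : Rabs (v k) <= vnorm v.
Proof. unfold vnorm. apply (fsum_term n (fun i => Rabs (v i))). intro; apply Rabs_pos. Qed.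

Lemma vnorm_triang n (v w : Vec n) : vnorm (fun i => v i + w i) <= vnorm v + vnorm w.
Proof. unfold vnorm. rewrite <- fsum_plus. apply fsum_le. intro; apply Rabs_triang. Qed.

Lemma vsub_triang n (x y z : Vec n) : vnorm (vsub x z) <= vnorm (vsub x y) + vnorm (vsub y z).
Proof. unfold vnorm, vsub. rewrite <- fsum_plus. apply fsum_le. intro i.
 replace (x i - z i) with ((x i - y i) + (y i - z i)) by ring. apply Rabs_triang. Qed.

Lemma vsub_sym n (x y : Vec n) : vnorm (vsub x y) = vnorm (vsub y x).
Proof. unfold vnorm, vsub. apply fsum_ext. intro; apply Rabs_minus_sym. Qed.

Lemma vnorm_small n (v : Vec n) e : (forall i, Rabs (v i) <= e) -> vnorm v <= INR n * e.
Proof. intro; unfold vnorm; apply fsum_bound; auto. Qed.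

Lemma vdot_bound n (g h : Vec n) : Rabs (vdot g h) <= vnorm g * vnorm h.
Proof. unfold vdot. eapply Rle_trans. apply fsum_abs.
 apply Rle_trans with (fsum n (fun i => vnorm h * Rabs (g i))).
 apply fsum_le. intro i. rewrite Rabs_mult, Rmult_comm. apply Rmult_le_compat_r. apply Rabs_pos. apply vnorm_coord.
 rewrite fsum_scal. unfold vnorm at 2. lra. Qed.

Lemma fsum_cv n (f : nat -> Fin.t n -> R) (L : Fin.t n -> R) :
  (forall i, Un_cv (fun m => f m i) (L i)) -> Un_cv (fun m => fsum n (f m)) (fsum n L).
Proof. revert f L; induction n; intros f L H; simpl.
 intros e He. exists O. intros. unfold Rdist. rewrite Rminus_0_r, Rabs_R0. lra.
 apply CV_plus. apply H. apply (IHn (fun m i => f m (Fin.FS i))). intro; apply H. Qed.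

Lemma abs_le_inv x B : Rabs x <= B -> - B <= x <= B.
Proof. intro H. pose proof (Rle_abs x). pose proof (Rle_abs (-x)). rewrite Rabs_Ropp in H1. lra. Qed.

Lemma real_ind a b (Q : R -> Prop) : a <= b -> Q a ->
  (forall c, a <= c < b -> Q c -> exists eta, 0 < eta /\ forall s, c < s < c + eta -> s <= b -> Q s) ->
  (forall c, a < c <= b -> (forall s, a <= s < c -> Q s) -> Q c) ->
  forall s, a <= s <= b -> Q s.
Proof.
 intros Hab Qa Hext Hcl.
 set (A := fun t => a <= t <= b /\ forall s, a <= s <= t -> Q s).
 assert (Hb : bound A). exists b. intros t [Ht _]. lra.
 assert (Hne : exists x, A x). exists a. split. lra. intros s Hs. replace s with a by lra. auto.
 destruct (completeness A Hb Hne) as [c [Hub Hlub]].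
 assert (Hac : a <= c). apply Hub. destruct Hne. unfold A. split. lra. intros s Hs. replace s with a by lra; auto.
 assert (Hcb : c <= b). apply Hlub. intros t [Ht _]; lra.
 assert (H1 : forall s, a <= s < c -> Q s).
 { intros s Hs. apply NNPP. intro Hn. assert (c <= s). apply Hlub. intros t [Ht Ht']. destruct (Rle_dec t s); auto. exfalso. apply Hn. apply Ht'. lra. lra. }
 assert (Qc : Q c). { destruct (Req_dec c a). subst; auto. apply Hcl. lra. auto. }
 assert (Ac : A c). { split. lra. intros s Hs. destruct (Req_dec s c). subst; auto. apply H1; lra. }
 assert (Hc : c = b).
 { destruct (Req_dec c b); auto. exfalso. destruct (Hext c) as [eta [He Heta]]. lra. auto.
   set (s' := Rmin (c + eta/2) b). assert (c < s'). unfold s'. apply Rmin_glb_lt; lra.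
   assert (s' <= c). apply Hub. split. split. lra. unfold s'; apply Rmin_r. intros s Hs. destruct (Rle_dec s c).
   apply (proj2 Ac); lra. apply Heta. split. lra. unfold s' in Hs. pose proof (Rmin_l (c+eta/2) b). lra. unfold s' in Hs. pose proof (Rmin_r (c+eta/2) b). lra.
   lra. }
 subst c. intros s Hs. apply (proj2 Ac). lra.
Qed.

Lemma deriv_right h c d eps : derivable_pt_lim h c d -> 0 < eps ->
  exists eta, 0 < eta /\ forall s, c < s < c + eta -> h s - h c <= (d + eps) * (s - c).
Proof. intros Hd He. destruct (Hd eps He) as [del Hdel]. exists del. split. apply cond_pos.
 intros s Hs. specialize (Hdel (s - c)). replace (c + (s - c)) with s in Hdel by ring.
 assert (Hq : Rabs ((h s - h c) / (s - c) - d) < eps). apply Hdel. lra. rewrite Rabs_right; lra.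
 apply Rabs_def2 in Hq. destruct Hq as [Hq1 Hq2].
 assert ((h s - h c) / (s - c) <= d + eps) by lra.
 apply (Rmult_le_compat_r (s - c)) in H. unfold Rdiv in H. rewrite Rmult_assoc, Rinv_l in H. lra. lra. lra. Qed.

Lemma deriv_left h c d eps : derivable_pt_lim h c d -> 0 < eps ->
  exists eta, 0 < eta /\ forall s, c - eta < s < c -> h c - h s <= (d + eps) * (c - s).
Proof. intros Hd He. destruct (Hd eps He) as [del Hdel]. exists del. split. apply cond_pos.
 intros s Hs. specialize (Hdel (s - c)). replace (c + (s - c)) with s in Hdel by ring.
 assert (Hq : Rabs ((h s - h c) / (s - c) - d) < eps). apply Hdel. lra. rewrite Rabs_left; lra.
 apply Rabs_def2 in Hq. destruct Hq as [Hq1 Hq2].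
 replace ((h s - h c) / (s - c)) with ((h c - h s) / (c - s)) in Hq1, Hq2 by (field; lra).
 assert ((h c - h s) / (c - s) <= d + eps) by lra.
 apply (Rmult_le_compat_r (c - s)) in H. unfold Rdiv in H. rewrite Rmult_assoc, Rinv_l in H. lra. lra. lra. Qed.

Definition lsum {A} (f : A -> R) (L : list A) : R := fold_right (fun p acc => f p + acc) 0 L.

Lemma lsum_app {A} (f : A -> R) L1 L2 : lsum f (L1 ++ L2) = lsum f L1 + lsum f L2.
Proof. induction L1; simpl; [lra|]. rewrite IHL1; lra. Qed.

Lemma lsum_filter {A} (f : A -> R) (P : A -> bool) L :
  lsum f L = lsum f (filter P L) + lsum f (filter (fun x => negb (P x)) L).
Proof. induction L; simpl. lra. destruct (P a); simpl; rewrite IHL; lra. Qed.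

Lemma FOP_filter {A} (Rl : A -> A -> Prop) P L : ForallOrdPairs Rl L -> ForallOrdPairs Rl (filter P L).
Proof. induction 1; simpl. constructor. destruct (P a); auto. constructor; auto.
 apply Forall_forall. intros x Hx. apply filter_In in Hx. rewrite Forall_forall in H. apply H. tauto. Qed.

Lemma Forall_filter' {A} (Q : A -> Prop) P L : Forall Q L -> Forall Q (filter P L).
Proof. intro H. rewrite Forall_forall in *. intros x Hx. apply filter_In in Hx. apply H; tauto. Qed.

Lemma FOP_app1 {A} (Rl : A -> A -> Prop) L x : ForallOrdPairs Rl L -> Forall (fun p => Rl p x) L ->
  ForallOrdPairs Rl (L ++ x :: nil).
Proof. induction 1; intros HF; simpl. constructor; constructor.
 inversion HF; subst. constructor; auto. apply Forall_app. split; auto. Qed.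

Definition iu (p : R * R * nat) := fst (fst p).
Definition iv (p : R * R * nat) := snd (fst p).
Definition ii (p : R * R * nat) := snd p.

Lemma ordered_in_interval L al be : al <= be ->
  ForallOrdPairs (fun p q => iv p <= iu q) L ->
  Forall (fun p => al <= iu p <= iv p /\ iv p <= be) L ->
  lsum (fun p => iv p - iu p) L <= be - al.
Proof. intros Hab Ho; revert al Hab. induction Ho as [|p L HF Ho IH]; intros al Hab HL; simpl. lra.
 inversion HL; subst. assert (lsum (fun p => iv p - iu p) L <= be - iv p).
 apply IH. lra. rewrite Forall_forall in *. intros x Hx. specialize (HF x Hx). specialize (H2 x Hx). lra.
 lra. Qed.

Lemma grouping (ca cb : nat -> R) (Hc : forall i, ca i <= cb i) N L :
  ForallOrdPairs (fun p q => iv p <= iu q) L ->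
  Forall (fun p => iu p <= iv p /\ ca (ii p) < iu p /\ iv p < cb (ii p) /\ (ii p < N)%nat) L ->
  lsum (fun p => iv p - iu p) L <= rsum N (fun i => cb i - ca i).
Proof. revert L; induction N; intros L Ho HL.
 - destruct L. simpl; lra. inversion HL; subst. lia.
 - rewrite (lsum_filter _ (fun p => Nat.eqb (ii p) N)). simpl rsum.
   assert (lsum (fun p => iv p - iu p) (filter (fun p => Nat.eqb (ii p) N) L) <= cb N - ca N).
   { apply ordered_in_interval. apply Hc. apply FOP_filter; auto.
     rewrite Forall_forall in *. intros x Hx. apply filter_In in Hx. destruct Hx as [Hx Hx']. apply Nat.eqb_eq in Hx'.
     specialize (HL x Hx). rewrite Hx' in HL. lra. }
   assert (lsum (fun p => iv p - iu p) (filter (fun p => negb (Nat.eqb (ii p) N)) L) <= rsum N (fun i => cb i - ca i)).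
   { apply IHN. apply FOP_filter; auto.
     rewrite Forall_forall in *. intros x Hx. apply filter_In in Hx. destruct Hx as [Hx Hx']. apply Bool.negb_true_iff in Hx'. apply Nat.eqb_neq in Hx'.
     specialize (HL x Hx). repeat split; try tauto. lia. }
   lra. Qed.

Lemma rsum_shift m f : rsum (S m) f = f O + rsum m (fun k => f (S k)).
Proof. induction m; simpl in *. lra. rewrite IHm. lra. Qed.

Lemma rsum_nth {A} (F : A -> R) L d : rsum (length L) (fun k => F (nth k L d)) = lsum F L.
Proof. induction L; simpl length. reflexivity. rewrite rsum_shift. simpl. rewrite IHL. reflexivity. Qed.

Lemma FOP_nth {A} (Rl : A -> A -> Prop) L d : ForallOrdPairs Rl L ->
  forall i j, (i < j < length L)%nat -> Rl (nth i L d) (nth j L d).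
Proof. induction 1; intros i j Hij; simpl in *. lia.
 destruct i; destruct j; try lia. rewrite Forall_forall in H. apply H. apply nth_In. lia.
 apply IHForallOrdPairs. lia. Qed.

Lemma exists_bound_idx (L : list (R*R*nat)) : exists N, Forall (fun p => (ii p < N)%nat) L.
Proof. induction L. exists O; constructor. destruct IHL as [N HN]. exists (S (Nat.max N (ii a))).
 constructor. lia. rewrite Forall_forall in *. intros x Hx. specialize (HN x Hx). lia. Qed.

Definition fam_ok (ca cb : nat -> R) (a s : R) (L : list (R*R*nat)) : Prop :=
  ForallOrdPairs (fun p q => iv p <= iu q) L /\
  Forall (fun p => a <= iu p <= iv p /\ iv p <= s /\ ca (ii p) < iu p /\ iv p < cb (ii p)) L.

Lemma fam_ok_mono ca cb a s s' L : s <= s' -> fam_ok ca cb a s L -> fam_ok ca cb a s' L.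
Proof. intros H [H1 H2]. split; auto. rewrite Forall_forall in *. intros x Hx. specialize (H2 x Hx). lra. Qed.

Lemma fam_ok_app ca cb a s L u v i : fam_ok ca cb a s L -> a <= u -> s <= u <= v -> ca i < u -> v < cb i ->
  fam_ok ca cb a v (L ++ ((u,v),i) :: nil).
Proof. intros [H1 H2] Ha Huv Hu Hv. split.
 apply FOP_app1; auto. rewrite Forall_forall in *. intros x Hx. specialize (H2 x Hx). unfold iu; simpl. lra.
 apply Forall_app. split. rewrite Forall_forall in *. intros x Hx. specialize (H2 x Hx). lra.
 constructor; [|constructor]. unfold iu, iv, ii; simpl. lra. Qed.

Lemma ac_cont h a b : abs_cont_on h a b -> forall eps, 0 < eps -> exists d, 0 < d /\ forall s t, a <= s <= t -> t <= b -> t - s < d -> Rabs (h t - h s) < eps.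
Proof. intros Hac eps He. destruct (Hac eps He) as [d [Hd Hd']]. exists d. split; auto.
 intros s t Hs Ht Hst. specialize (Hd' 1%nat (fun _ => s) (fun _ => t)). simpl in Hd'.
 rewrite !Rplus_0_l in Hd'. apply Hd'. intros; lra. intros; lia. lra. Qed.

Lemma gauge0 (h : R -> R) a b (E : R -> Prop) : a <= b -> abs_cont_on h a b -> null_set E ->
  (forall t, a <= t <= b -> ~ E t -> exists d, derivable_pt_lim h t d /\ d <= 0) -> h b <= h a.
Proof.
 intros Hab Hac HE Hd.
 assert (Key : forall eps, 0 < eps -> h b - h a <= eps * (b - a) + eps).
 { intros eps Heps. destruct (Hac eps Heps) as [del [Hdel Hdel']].
   destruct (HE (del/2)) as [ca [cb [Hc1 [Hc2 Hc3]]]]. lra.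
   set (Q := fun s => exists L, fam_ok ca cb a s L /\ h s - h a <= eps * (s - a) + lsum (fun p => Rabs (h (iv p) - h (iu p))) L).
   assert (Qb : Q b).
   { apply (real_ind a b Q Hab).
     - exists nil. split. split; constructor. simpl. lra.
     - intros c Hc [L [HL HL']]. destruct (classic (E c)) as [Ec|Ec].
       + destruct (Hc2 c Ec) as [i Hi]. exists (cb i - c). split. lra. intros s Hs Hsb.
         exists (L ++ ((c,s),i) :: nil). split. apply (fam_ok_app ca cb a c L c s i); auto; lra.
         rewrite lsum_app. replace (lsum _ (((c,s),i)::nil)) with (Rabs (h s - h c)) by (unfold lsum, iu, iv; simpl; ring).
         pose proof (Rle_abs (h s - h c)). assert (eps * (c - a) <= eps * (s - a)) by (apply Rmult_le_compat_l; lra). lra.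
       + destruct (Hd c ltac:(lra) Ec) as [d [Hd1 Hd2]].
         destruct (deriv_right h c d eps Hd1 Heps) as [eta [Heta Heta']].
         exists eta. split; auto. intros s Hs Hsb. exists L. split. eapply fam_ok_mono; [|apply HL]; lra.
         specialize (Heta' s Hs). assert ((d + eps) * (s - c) <= eps * (s - c)). apply Rmult_le_compat_r; lra. assert (eps * (c - a) + eps * (s - c) = eps * (s - a)) by ring. lra.
     - intros c Hc HQ. destruct (classic (E c)) as [Ec|Ec].
       + destruct (Hc2 c Ec) as [i Hi]. set (s := Rmax a ((ca i + c)/2)).
         assert (Hs1 : a <= s) by apply Rmax_l.
         assert (Hs2 : s < c). unfold s. apply Rmax_lub_lt; lra.
         assert (Hs3 : ca i < s). unfold s. eapply Rlt_le_trans; [|apply Rmax_r]. lra.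
         destruct (HQ s ltac:(lra)) as [L [HL HL']]. exists (L ++ ((s,c),i) :: nil). split.
         apply (fam_ok_app ca cb a s L s c i); auto; lra.
         rewrite lsum_app. replace (lsum _ (((s,c),i)::nil)) with (Rabs (h c - h s)) by (unfold lsum, iu, iv; simpl; ring).
         pose proof (Rle_abs (h c - h s)). assert (eps * (s - a) <= eps * (c - a)) by (apply Rmult_le_compat_l; lra). lra.
       + destruct (Hd c ltac:(lra) Ec) as [d [Hd1 Hd2]].
         destruct (deriv_left h c d eps Hd1 Heps) as [eta [Heta Heta']].
         set (s := Rmax a (c - eta/2)).
         assert (Hs1 : a <= s) by apply Rmax_l.
         assert (Hs2 : s < c). unfold s. apply Rmax_lub_lt; lra.
         assert (Hs3 : c - eta < s). unfold s. eapply Rlt_le_trans; [|apply Rmax_r]. lra.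
         destruct (HQ s ltac:(lra)) as [L [HL HL']]. exists L. split. eapply fam_ok_mono; [|apply HL]; lra.
         specialize (Heta' s ltac:(lra)). assert ((d + eps) * (c - s) <= eps * (c - s)). apply Rmult_le_compat_r; lra. assert (eps * (s - a) + eps * (c - s) = eps * (c - a)) by ring. lra.
     - lra. }
   destruct Qb as [L [[Ho HL] HL']].
   destruct (exists_bound_idx L) as [N HN].
   assert (Hsum : lsum (fun p => iv p - iu p) L <= rsum N (fun i => cb i - ca i)).
   { apply grouping; auto. rewrite Forall_forall in *. intros x Hx. specialize (HL x Hx). specialize (HN x Hx). repeat split; lra || auto. }
   specialize (Hc3 N).
   set (d0 := (0,0,O)).
   assert (lsum (fun p => Rabs (h (iv p) - h (iu p))) L < eps).
   { rewrite <- (rsum_nth _ L d0). rewrite <- (rsum_nth _ L d0) in Hsum.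
     apply (Hdel' (length L) (fun k => iu (nth k L d0)) (fun k => iv (nth k L d0))).
     - intros i Hi. rewrite Forall_forall in HL. specialize (HL (nth i L d0) (nth_In _ _ Hi)). lra.
     - intros i Hi. apply (FOP_nth _ L d0 Ho). lia.
     - lra. }
   lra. }
 apply Rnot_lt_le. intro Hlt. set (eps := (h b - h a) / (2 * (b - a + 1))).
 assert (Heps : 0 < eps). unfold eps. apply Rdiv_lt_0_compat; lra.
 specialize (Key eps Heps). unfold eps in Key.
 assert ((h b - h a) / (2 * (b - a + 1)) * (b - a) + (h b - h a) / (2 * (b - a + 1)) = (h b - h a) / 2) by (field; lra).
 lra.
Qed.

Lemma ac_lin h a b M : abs_cont_on h a b -> abs_cont_on (fun s => h s - M * s) a b.
Proof. intros Hac eps He. destruct (Hac (eps/2)) as [d [Hd Hd']]. lra.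
 exists (Rmin d (eps / (2 * (Rabs M + 1)))). split. apply Rmin_pos; auto. apply Rdiv_lt_0_compat. lra. pose proof (Rabs_pos M); lra.
 intros n u v H1 H2 H3.
 assert (rsum n (fun i => Rabs (h (v i) - h (u i))) < eps/2). apply Hd'; auto. pose proof (Rmin_l d (eps / (2 * (Rabs M + 1)))). lra.
 assert (Hs : forall m, (m <= n)%nat -> rsum m (fun i => Rabs (h (v i) - M * v i - (h (u i) - M * u i))) <=
     rsum m (fun i => Rabs (h (v i) - h (u i))) + Rabs M * rsum m (fun i => v i - u i)).
 { induction m; intros Hm; simpl. lra. specialize (IHm ltac:(lia)).
   replace (h (v m) - M * v m - (h (u m) - M * u m)) with ((h (v m) - h (u m)) + (- M) * (v m - u m)) by ring.
   pose proof (Rabs_triang (h (v m) - h (u m)) (- M * (v m - u m))). rewrite Rabs_mult, Rabs_Ropp in H0.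
   specialize (H1 m ltac:(lia)). rewrite (Rabs_right (v m - u m)) in H0 by lra. lra. }
 specialize (Hs n (le_n n)).
 assert (rsum n (fun i => v i - u i) >= 0).
 { clear -H1. induction n; simpl. lra. assert (rsum n (fun i => v i - u i) >= 0). apply IHn. intros; apply H1; lia. specialize (H1 n ltac:(lia)). lra. }
 assert (Rabs M * rsum n (fun i => v i - u i) <= Rabs M * (eps / (2 * (Rabs M + 1)))).
 apply Rmult_le_compat_l. apply Rabs_pos. pose proof (Rmin_r d (eps / (2 * (Rabs M + 1)))). lra.
 assert (Rabs M * (eps / (2 * (Rabs M + 1))) < eps / 2).
 { pose proof (Rabs_pos M). apply Rmult_lt_reg_r with (2 * (Rabs M + 1)). lra.
   replace (Rabs M * (eps / (2 * (Rabs M + 1))) * (2 * (Rabs M + 1))) with (Rabs M * eps) by (field; lra).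
   replace (eps / 2 * (2 * (Rabs M + 1))) with (Rabs M * eps + eps) by field. lra. }
 lra. Qed.

Lemma gaugeM (h : R -> R) a b (E : R -> Prop) M : a <= b -> abs_cont_on h a b -> null_set E ->
  (forall t, a <= t <= b -> ~ E t -> exists d, derivable_pt_lim h t d /\ d <= M) -> h b - h a <= M * (b - a).
Proof. intros Hab Hac HE Hd.
 pose proof (gauge0 (fun s => h s - M * s) a b E Hab (ac_lin h a b M Hac) HE). simpl in H.
 enough (h b - M * b <= h a - M * a) by lra. apply H. intros t Ht Et. destruct (Hd t Ht Et) as [d [Hd1 Hd2]].
 exists (d - M). split. apply derivable_pt_lim_minus; auto.
 replace M with (M * 1) at 2 by ring. apply derivable_pt_lim_scal. apply derivable_pt_lim_id. lra. Qed.

Lemma ac_opp h a b : abs_cont_on h a b -> abs_cont_on (fun s => - h s) a b.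
Proof. intros Hac eps He. destruct (Hac eps He) as [d [Hd Hd']]. exists d. split; auto. intros n u v H1 H2 H3.
 replace (rsum n (fun i => Rabs (- h (v i) - - h (u i)))) with (rsum n (fun i => Rabs (h (v i) - h (u i)))). auto.
 clear. induction n; simpl; auto. rewrite IHn. f_equal. rewrite <- Rabs_Ropp. f_equal; ring. Qed.

Lemma gaugem (h : R -> R) a b (E : R -> Prop) m : a <= b -> abs_cont_on h a b -> null_set E ->
  (forall t, a <= t <= b -> ~ E t -> exists d, derivable_pt_lim h t d /\ m <= d) -> m * (b - a) <= h b - h a.
Proof. intros Hab Hac HE Hd.
 pose proof (gaugeM (fun s => - h s) a b E (-m) Hab (ac_opp h a b Hac) HE). simpl in H.
 enough (- h b - - h a <= - m * (b - a)) by lra. apply H. intros t Ht Et. destruct (Hd t Ht Et) as [d [Hd1 Hd2]].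
 exists (- d). split. apply derivable_pt_lim_opp; auto. lra. Qed.

Lemma inv_small eps : 0 < eps -> exists N : nat, forall n, (N <= n)%nat -> / (INR n + 1) < eps.
Proof. intro He. destruct (archimed (/ eps)) as [H1 _].
 assert (0 <= IZR (up (/eps))). apply Rle_trans with (/eps). left; apply Rinv_0_lt_compat; auto. lra.
 destruct (Z_of_nat_complete (up (/eps))) as [N HN]. apply le_IZR. lra.
 exists N. intros n Hn. rewrite HN in H1. rewrite <- INR_IZR_INZ in H1. apply le_INR in Hn.
 rewrite <- (Rinv_inv eps). apply Rinv_lt_contravar. apply Rmult_lt_0_compat. apply Rinv_0_lt_compat; auto. pose proof (pos_INR n); lra. lra. Qed.

Lemma bw1 (u : nat -> R) B : (forall n, Rabs (u n) <= B) ->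
  exists phi : nat -> nat, (forall n, (phi n < phi (S n))%nat) /\ exists l, Un_cv (fun n => u (phi n)) l.
Proof. intro HB. destruct (Bolzano_Weierstrass u (fun c => -B <= c <= B) (compact_P3 (-B) B)) as [l Hl].
 intro n. specialize (HB n). apply abs_le_inv in HB. auto.
 assert (H : forall N k : nat, exists p, (N <= p)%nat /\ Rabs (u p - l) < / (INR k + 1)).
 { intros N k. assert (Hpos : 0 < / (INR k + 1)). apply Rinv_0_lt_compat. pose proof (pos_INR k); lra.
   destruct (Hl (disc l (mkposreal _ Hpos)) N) as [p [Hp1 Hp2]]. exists (mkposreal _ Hpos). intros x Hx; auto.
   exists p. split; auto. }
 set (sel := fun N k => proj1_sig (constructive_indefinite_description _ (H N k))).
 assert (Hsel : forall N k, (N <= sel N k)%nat /\ Rabs (u (sel N k) - l) < / (INR k + 1)).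
 { intros N k. unfold sel. destruct (constructive_indefinite_description _ (H N k)); simpl; auto. }
 set (phi := fix f n := match n with O => sel O O | S m => sel (S (f m)) (S m) end).
 exists phi. split. intro n. simpl. apply (Hsel (S (phi n)) (S n)).
 exists l. intros eps He. destruct (inv_small eps He) as [N HN]. exists N. intros n Hn. unfold Rdist.
 apply Rlt_trans with (/ (INR n + 1)); auto. destruct n; simpl. apply (Hsel O O). apply (Hsel (S (phi n)) (S n)). Qed.

Lemma incr_ge (psi : nat -> nat) : (forall n, (psi n < psi (S n))%nat) -> forall n, (n <= psi n)%nat.
Proof. intros H n; induction n. lia. specialize (H n). lia. Qed.

Lemma incr_mono (psi : nat -> nat) : (forall n, (psi n < psi (S n))%nat) -> forall n m, (n <= m)%nat -> (psi n <= psi m)%nat.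
Proof. intros H n m Hnm; induction Hnm. lia. specialize (H m). lia. Qed.

Lemma cv_sub u L (psi : nat -> nat) : Un_cv u L -> (forall n, (psi n < psi (S n))%nat) -> Un_cv (fun n => u (psi n)) L.
Proof. intros Hu Hp eps He. destruct (Hu eps He) as [N HN]. exists N. intros n Hn. apply HN.
 pose proof (incr_ge psi Hp n). lia. Qed.

Lemma bw_list {I : Type} (l : list I) (y : nat -> I -> R) B : (forall n i, Rabs (y n i) <= B) ->
  exists phi : nat -> nat, (forall n, (phi n < phi (S n))%nat) /\
    forall i, In i l -> exists L, Un_cv (fun n => y (phi n) i) L.
Proof. intro HB. induction l as [|i0 l IH].
 - exists (fun n => n). split. intro; lia. intros i [].
 - destruct IH as [phi1 [Hp1 Hc1]].
   destruct (bw1 (fun n => y (phi1 n) i0) B) as [phi2 [Hp2 [L0 HL0]]]. intro; apply HB.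
   exists (fun n => phi1 (phi2 n)). split.
   + intro n. specialize (Hp2 n). pose proof (incr_mono phi1 Hp1 (S (phi2 n)) (phi2 (S n)) Hp2). specialize (Hp1 (phi2 n)). lia.
   + intros i [Hi|Hi]. subst. exists L0; auto. destruct (Hc1 i Hi) as [L HL]. exists L.
     apply (cv_sub (fun n => y (phi1 n) i) L phi2); auto. Qed.

Lemma deriv_cont h c d : derivable_pt_lim h c d -> forall eps, 0 < eps -> exists eta, 0 < eta /\
  forall s, Rabs (s - c) < eta -> Rabs (h s - h c) < eps.
Proof. intros Hd eps He. destruct (Hd 1 ltac:(lra)) as [del Hdel].
 exists (Rmin del (eps / (Rabs d + 2))). split. apply Rmin_pos. apply cond_pos. apply Rdiv_lt_0_compat; auto. pose proof (Rabs_pos d); lra.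
 intros s Hs. destruct (Req_dec s c). subst. rewrite Rminus_diag, Rabs_R0; auto.
 specialize (Hdel (s - c)). replace (c + (s - c)) with s in Hdel by ring.
 assert (Hq : Rabs ((h s - h c) / (s - c) - d) < 1). apply Hdel. lra. pose proof (Rmin_l del (eps / (Rabs d + 2))). lra.
 assert (Rabs ((h s - h c) / (s - c)) < Rabs d + 1).
 { pose proof (Rabs_triang ((h s - h c) / (s - c) - d) d). replace ((h s - h c) / (s - c) - d + d) with ((h s - h c) / (s - c)) in H0 by ring. lra. }
 replace (h s - h c) with ((h s - h c) / (s - c) * (s - c)) by (field; lra). rewrite Rabs_mult.
 assert (Rabs (s - c) < eps / (Rabs d + 2)). pose proof (Rmin_r del (eps / (Rabs d + 2))). lra.
 assert (Rabs (s - c) * (Rabs d + 2) < eps). { pose proof (Rabs_pos d). apply Rmult_lt_reg_r with (/ (Rabs d + 2)). apply Rinv_0_lt_compat; lra.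
   rewrite Rmult_assoc, Rinv_r by lra. rewrite Rmult_1_r. exact H1. }
 pose proof (Rabs_pos (s - c)). pose proof (Rabs_pos ((h s - h c) / (s - c))).
 apply Rle_lt_trans with ((Rabs d + 2) * Rabs (s - c)). apply Rmult_le_compat_r; lra. lra. Qed.

Lemma deriv_left_abs h c d eps : derivable_pt_lim h c d -> 0 < eps ->
  exists eta, 0 < eta /\ forall s, c - eta < s < c -> Rabs (h c - h s) <= (Rabs d + eps) * (c - s).
Proof. intros Hd He. destruct (deriv_left h c d eps Hd He) as [e1 [He1 H1]].
 destruct (deriv_left (fun s => - h s) c (- d) eps (derivable_pt_lim_opp _ _ _ Hd) He) as [e2 [He2 H2]].
 exists (Rmin e1 e2). split. apply Rmin_pos; auto. intros s Hs.
 pose proof (Rmin_l e1 e2). pose proof (Rmin_r e1 e2).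
 specialize (H1 s ltac:(lra)). specialize (H2 s ltac:(lra)). simpl in H2.
 assert (d * (c - s) <= Rabs d * (c - s)). apply Rmult_le_compat_r. lra. apply Rle_abs.
 assert (- d * (c - s) <= Rabs d * (c - s)). apply Rmult_le_compat_r. lra. rewrite <- Rabs_Ropp. apply Rle_abs.
 apply Rabs_le. lra. Qed.

Lemma vnorm_cont n (e : R -> Vec n) c (g : Vec n) : (forall k, derivable_pt_lim (fun s => e s k) c (g k)) ->
  forall eps, 0 < eps -> exists eta, 0 < eta /\ forall s, Rabs (s - c) < eta -> Rabs (vnorm (e s) - vnorm (e c)) < eps.
Proof. intros Hd eps He.
 destruct (fin_min n (fun k eta => forall s, Rabs (s - c) < eta -> Rabs (e s k - e c k) < eps / (INR n + 1))) as [eta [Heta H]].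
 - intros k d d' Hd' Hp s Hs. apply Hp. lra.
 - intro k. apply (deriv_cont _ c (g k) (Hd k)). apply Rdiv_lt_0_compat; auto. pose proof (pos_INR n); lra.
 - exists eta. split; auto. intros s Hs. unfold vnorm. rewrite <- fsum_minus.
   eapply Rle_lt_trans. apply fsum_abs.
   apply Rle_lt_trans with (INR n * (eps / (INR n + 1))).
   apply fsum_bound. intro k. eapply Rle_trans. apply Rabs_triang_inv2. left; apply H; auto.
   apply Rmult_lt_reg_r with (INR n + 1). pose proof (pos_INR n); lra.
   replace (INR n * (eps / (INR n + 1)) * (INR n + 1)) with (INR n * eps) by (field; pose proof (pos_INR n); lra). nra. Qed.

Lemma vnorm_left n (e : R -> Vec n) (g : Vec n) c eps : (forall k, derivable_pt_lim (fun s => e s k) c (g k)) -> 0 < eps ->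
  exists eta, 0 < eta /\ forall s, c - eta < s < c -> vnorm (e c) - vnorm (e s) <= (vnorm g + eps) * (c - s).
Proof. intros Hd He. set (ep := eps / (INR n + 1)). assert (Hep : 0 < ep). unfold ep. apply Rdiv_lt_0_compat; auto. pose proof (pos_INR n); lra.
 destruct (fin_min n (fun k eta => forall s, c - eta < s < c -> Rabs (e c k - e s k) <= (Rabs (g k) + ep) * (c - s))) as [eta [Heta H]].
 - intros k d d' Hd' Hp s Hs. apply Hp. lra.
 - intro k. apply (deriv_left_abs (fun s => e s k) c (g k) ep (Hd k) Hep).
 - exists eta. split; auto. intros s Hs. unfold vnorm. rewrite <- fsum_minus.
   apply Rle_trans with (fsum n (fun k => (Rabs (g k) + ep) * (c - s))).
   apply fsum_le. intro k. eapply Rle_trans. 2: apply (H k s Hs). apply Rabs_triang_inv.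
   rewrite (fsum_ext n _ (fun k => (c - s) * Rabs (g k) + (c - s) * ep)) by (intro; ring).
   rewrite fsum_plus, fsum_scal, fsum_const.
   assert (INR n * ep <= eps). unfold ep. apply Rmult_le_reg_r with (INR n + 1). pose proof (pos_INR n); lra.
   replace (INR n * (eps / (INR n + 1)) * (INR n + 1)) with (INR n * eps) by (field; pose proof (pos_INR n); lra). nra.
   assert (c - s > 0) by lra. nra. Qed.

Lemma lin_deriv L c : derivable_pt_lim (fun t => L * t) c L.
Proof. pose proof (derivable_pt_lim_mult (fct_cte L) id c 0 1 (derivable_pt_lim_const L c) (derivable_pt_lim_id c)).
 unfold mult_fct, fct_cte, id in H. replace (0 * c + L * 1) with L in H by ring. exact H. Qed.

Lemma Phi_deriv C K L c : derivable_pt_lim (fun t => (C + K * t) * exp (L * t)) c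
   (K * exp (L * c) + (C + K * c) * (exp (L * c) * L)).
Proof. apply (derivable_pt_lim_mult (fun t => C + K * t) (fun t => exp (L * t))).
 replace K with (0 + K) at 1 by ring. apply derivable_pt_lim_plus. apply derivable_pt_lim_const.
 apply lin_deriv.
 apply (derivable_pt_lim_comp (fun t => L * t) exp). apply lin_deriv. apply derivable_pt_lim_exp. Qed.

Lemma gronwall n (a b da db : R -> Vec n) T L beta del :
  0 <= T -> 0 < L -> 0 < del -> 0 <= beta ->
  (forall t, 0 <= t <= T -> forall k, derivable_pt_lim (fun s => a s k) t (da t k) /\
                                    derivable_pt_lim (fun s => b s k) t (db t k)) ->
  (forall t, 0 <= t <= T -> vnorm (vsub (da t) (db t)) <= L * vnorm (vsub (a t) (b t)) + L * beta) ->
  forall t, 0 <= t <= T -> vnorm (vsub (a t) (b t)) <=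
     (vnorm (vsub (a 0) (b 0)) + del + (L * beta + del) * t) * exp (L * t).
Proof.
 intros HT HL Hdel Hb Hd Hlip.
 set (D := fun t => vnorm (vsub (a t) (b t))).
 set (C := vnorm (vsub (a 0) (b 0)) + del). set (K := L * beta + del).
 set (Phi := fun t => (C + K * t) * exp (L * t)).
 assert (He : forall t, 0 <= t <= T -> forall k, derivable_pt_lim (fun s => vsub (a s) (b s) k) t (vsub (da t) (db t) k)).
 { intros t Ht k. unfold vsub. apply derivable_pt_lim_minus; apply Hd; auto. }
 assert (HPhi : forall c, derivable_pt_lim Phi c (K * exp (L * c) + (C + K * c) * (exp (L * c) * L))).
 { intro c. apply Phi_deriv. }
 assert (Hcont : forall c, 0 <= c <= T -> forall eps, 0 < eps -> exists eta, 0 < eta /\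
           forall s, Rabs (s - c) < eta -> Rabs ((D s - Phi s) - (D c - Phi c)) < eps).
 { intros c Hc eps Heps. destruct (vnorm_cont n (fun s => vsub (a s) (b s)) c _ (He c Hc) (eps/2)) as [e1 [He1 H1]]. lra.
   destruct (deriv_cont Phi c _ (HPhi c) (eps/2)) as [e2 [He2 H2]]. lra.
   exists (Rmin e1 e2). split. apply Rmin_pos; auto. intros s Hs.
   pose proof (Rmin_l e1 e2). pose proof (Rmin_r e1 e2).
   specialize (H1 s ltac:(lra)). specialize (H2 s ltac:(lra)).
   replace (D s - Phi s - (D c - Phi c)) with ((D s - D c) - (Phi s - Phi c)) by ring.
   eapply Rle_lt_trans. apply Rabs_triang. rewrite Rabs_Ropp. unfold D. lra. }
 assert (Q : forall s, 0 <= s <= T -> D s < Phi s).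
 { apply (real_ind 0 T (fun s => D s < Phi s) HT).
   - unfold Phi, D. rewrite !Rmult_0_r, exp_0. unfold C. lra.
   - intros c Hc Hq. destruct (Hcont c ltac:(lra) ((Phi c - D c)/2)) as [eta [Heta H]]. lra.
     exists eta. split; auto. intros s Hs _. specialize (H s). rewrite Rabs_right in H by lra.
     assert (Rabs ((D s - Phi s) - (D c - Phi c)) < (Phi c - D c)/2) by (apply H; lra).
     apply Rabs_def2 in H0. lra.
   - intros c Hc Hq.
     assert (Hle : D c <= Phi c).
     { apply Rnot_lt_le. intro Hgt. destruct (Hcont c ltac:(lra) ((D c - Phi c)/2)) as [eta [Heta H]]. lra.
       set (s := Rmax 0 (c - eta/2)). assert (0 <= s) by apply Rmax_l.
       assert (s < c). unfold s. apply Rmax_lub_lt; lra.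
       assert (c - eta < s). unfold s. eapply Rlt_le_trans; [|apply Rmax_r]. lra.
       specialize (Hq s ltac:(lra)). assert (Rabs ((D s - Phi s) - (D c - Phi c)) < (D c - Phi c)/2).
       apply H. apply Rabs_def1; lra. apply Rabs_def2 in H3. lra. }
     destruct Hle as [Hlt|Heq]; auto. exfalso.
     set (g := vsub (da c) (db c)).
     destruct (vnorm_left n (fun s => vsub (a s) (b s)) g c (del/3) (He c ltac:(lra)) ltac:(lra)) as [e1 [He1 H1]].
     destruct (deriv_left (fun s => - Phi s) c _ (del/3) (derivable_pt_lim_opp _ _ _ (HPhi c)) ltac:(lra)) as [e2 [He2 H2]].
     set (s := Rmax 0 (c - Rmin e1 e2 / 2)). assert (0 <= s) by apply Rmax_l.
     assert (Hm : 0 < Rmin e1 e2) by (apply Rmin_pos; auto).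
     assert (s < c). unfold s. apply Rmax_lub_lt; lra.
     assert (c - Rmin e1 e2 < s). unfold s. eapply Rlt_le_trans; [|apply Rmax_r]. lra.
     pose proof (Rmin_l e1 e2). pose proof (Rmin_r e1 e2).
     specialize (H1 s ltac:(lra)). specialize (H2 s ltac:(lra)). specialize (Hq s ltac:(lra)).
     fold (D c) (D s) in H1.
     assert (Hg : vnorm g <= L * D c + L * beta). apply Hlip; lra.
     assert (Hex : 1 <= exp (L * c)). { rewrite <- exp_0. destruct (Req_dec (L*c) 0) as [E0|E0]. rewrite E0; lra. left. apply exp_increasing. nra. }
     assert (Hk : K <= K * exp (L * c)). { assert (0 <= K) by (unfold K; nra). nra. }
     assert (HP : Phi c = (C + K * c) * exp (L * c)) by reflexivity.
     set (P' := K * exp (L * c) + (C + K * c) * (exp (L * c) * L)) in *.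
     assert (P' >= K + L * Phi c). unfold P'. rewrite HP. nra.
     assert ((P' - del/3) * (c - s) <= (vnorm g + del/3) * (c - s)).
     { assert ((P' - del/3) * (c - s) = - ((- P' + del/3) * (c - s))) by ring. lra. }
     assert (P' - del/3 <= vnorm g + del/3). { apply Rmult_le_reg_r with (c - s). lra. lra. }
     assert (L * D c = L * Phi c) by (rewrite Heq; ring). unfold K in H6. lra.
   }
 intros t Ht. left. apply Q; auto.
Qed.

Lemma mono_M f a b M : a <= b -> (forall t, a <= t <= b -> exists d, derivable_pt_lim f t d /\ d <= M) ->
  f b - f a <= M * (b - a).
Proof. intros Hab Hd.
 assert (Key : forall eps, 0 < eps -> f b - f a <= (M + eps) * (b - a)).
 { intros eps He. apply (real_ind a b (fun s => f s - f a <= (M + eps) * (s - a)) Hab).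
   - lra.
   - intros c Hc Hq. destruct (Hd c ltac:(lra)) as [d [Hd1 Hd2]]. destruct (deriv_right f c d eps Hd1 He) as [eta [Heta H]].
     exists eta. split; auto. intros s Hs _. specialize (H s Hs).
     assert ((d + eps) * (s - c) <= (M + eps) * (s - c)) by (apply Rmult_le_compat_r; lra).
     assert ((M + eps) * (c - a) + (M + eps) * (s - c) = (M + eps) * (s - a)) by ring. lra.
   - intros c Hc Hq. destruct (Hd c ltac:(lra)) as [d [Hd1 Hd2]]. destruct (deriv_left f c d eps Hd1 He) as [eta [Heta H]].
     set (s := Rmax a (c - eta/2)). assert (a <= s) by apply Rmax_l.
     assert (s < c). unfold s. apply Rmax_lub_lt; lra.
     assert (c - eta < s). unfold s. eapply Rlt_le_trans; [|apply Rmax_r]. lra.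
     specialize (H s ltac:(lra)). specialize (Hq s ltac:(lra)).
     assert ((d + eps) * (c - s) <= (M + eps) * (c - s)) by (apply Rmult_le_compat_r; lra).
     assert ((M + eps) * (s - a) + (M + eps) * (c - s) = (M + eps) * (c - a)) by ring. lra.
   - lra. }
 apply Rnot_lt_le. intro Hlt. destruct (Req_dec a b). subst. lra.
 set (eps := (f b - f a - M * (b - a)) / (2 * (b - a))).
 assert (Heps : 0 < eps). unfold eps. apply Rdiv_lt_0_compat; lra.
 specialize (Key eps Heps). unfold eps in Key.
 assert ((M + (f b - f a - M * (b - a)) / (2 * (b - a))) * (b - a) = M * (b - a) + (f b - f a - M * (b - a)) / 2) by (field; lra).
 lra. Qed.

Lemma mono_m f a b m : a <= b -> (forall t, a <= t <= b -> exists d, derivable_pt_lim f t d /\ m <= d) ->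
  m * (b - a) <= f b - f a.
Proof. intros Hab Hd. pose proof (mono_M (fun s => - f s) a b (- m) Hab). simpl in H.
 enough (- f b - - f a <= - m * (b - a)) by lra. apply H. intros t Ht. destruct (Hd t Ht) as [d [H1 H2]].
 exists (- d). split. apply derivable_pt_lim_opp; auto. lra. Qed.

Lemma sin_lip x y : Rabs (sin x - sin y) <= Rabs (x - y).
Proof. destruct (Rle_dec y x).
 - assert (sin x - sin y <= 1 * (x - y)). apply mono_M; auto. intros t _. exists (cos t). split. apply derivable_pt_lim_sin. apply COS_bound.
   assert (-1 * (x - y) <= sin x - sin y). apply mono_m; auto. intros t _. exists (cos t). split. apply derivable_pt_lim_sin. apply COS_bound.
   rewrite (Rabs_right (x - y)) by lra. apply Rabs_le. lra.
 - assert (sin y - sin x <= 1 * (y - x)). apply mono_M; try lra. intros t _. exists (cos t). split. apply derivable_pt_lim_sin. apply COS_bound.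
   assert (-1 * (y - x) <= sin y - sin x). apply mono_m; try lra. intros t _. exists (cos t). split. apply derivable_pt_lim_sin. apply COS_bound.
   rewrite (Rabs_left (x - y)) by lra. apply Rabs_le. lra. Qed.

Lemma cos_lip x y : Rabs (cos x - cos y) <= Rabs (x - y).
Proof. destruct (Rle_dec y x).
 - assert (cos x - cos y <= 1 * (x - y)). apply mono_M; auto. intros t _. exists (- sin t). split. apply derivable_pt_lim_cos. pose proof (SIN_bound t). lra.
   assert (-1 * (x - y) <= cos x - cos y). apply mono_m; auto. intros t _. exists (- sin t). split. apply derivable_pt_lim_cos. pose proof (SIN_bound t). lra.
   rewrite (Rabs_right (x - y)) by lra. apply Rabs_le. lra.
 - assert (cos y - cos x <= 1 * (y - x)). apply mono_M; try lra. intros t _. exists (- sin t). split. apply derivable_pt_lim_cos. pose proof (SIN_bound t). lra.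
   assert (-1 * (y - x) <= cos y - cos x). apply mono_m; try lra. intros t _. exists (- sin t). split. apply derivable_pt_lim_cos. pose proof (SIN_bound t). lra.
   rewrite (Rabs_left (x - y)) by lra. apply Rabs_le. lra. Qed.

Lemma fsum_deriv n (f : Fin.t n -> R -> R) (d : Fin.t n -> R) c :
  (forall i, derivable_pt_lim (f i) c (d i)) -> derivable_pt_lim (fun t => fsum n (fun i => f i t)) c (fsum n d).
Proof. revert f d; induction n; intros f d H; simpl.
 apply derivable_pt_lim_const.
 apply (derivable_pt_lim_plus (f Fin.F1) (fun t => fsum n (fun i => f (Fin.FS i) t))). apply H.
 apply (IHn (fun i => f (Fin.FS i)) (fun i => d (Fin.FS i))). intro; apply H. Qed.

Lemma ac_restrict h a b a' b' : abs_cont_on h a b -> a <= a' -> b' <= b -> abs_cont_on h a' b'.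
Proof. intros Hac H1 H2 eps He. destruct (Hac eps He) as [d [Hd H]]. exists d. split; auto.
 intros n u v Hi Ho Hs. apply H; auto. intros i Hi'. specialize (Hi i Hi'). lra. Qed.

Lemma traj_deriv (h F : R -> R) a b (E : R -> Prop) c : a < c < b -> abs_cont_on h a b -> null_set E ->
  (forall t, a <= t <= b -> ~ E t -> derivable_pt_lim h t (F t)) ->
  (forall eps, 0 < eps -> exists del, 0 < del /\ forall s, a <= s <= b -> Rabs (s - c) < del -> Rabs (F s - F c) < eps) ->
  derivable_pt_lim h c (F c).
Proof. intros Hc Hac HE Hd HF eps He. destruct (HF (eps/2) ltac:(lra)) as [del [Hdel HFd]].
 assert (Hp : 0 < Rmin del (Rmin (c - a) (b - c))). repeat apply Rmin_pos; lra.
 exists (mkposreal _ Hp). simpl. intros h0 Hh0 Hlt.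
 pose proof (Rmin_l del (Rmin (c - a) (b - c))). pose proof (Rmin_r del (Rmin (c - a) (b - c))).
 pose proof (Rmin_l (c - a) (b - c)). pose proof (Rmin_r (c - a) (b - c)).
 destruct (Rle_dec 0 h0) as [Hp0|Hn0].
 - assert (0 < h0) by lra. rewrite Rabs_right in Hlt by lra.
   assert (U : h (c + h0) - h c <= (F c + eps/2) * (c + h0 - c)).
   { apply (gaugeM h c (c + h0) E); try lra. eapply ac_restrict; eauto; lra. exact HE.
     intros t Ht Et. exists (F t). split. apply Hd; auto; lra. specialize (HFd t ltac:(lra)).
     assert (Rabs (F t - F c) < eps / 2). apply HFd. rewrite Rabs_right; lra. apply Rabs_def2 in H4. lra. }
   assert (Lo : (F c - eps/2) * (c + h0 - c) <= h (c + h0) - h c).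
   { apply (gaugem h c (c + h0) E); try lra. eapply ac_restrict; eauto; lra. exact HE.
     intros t Ht Et. exists (F t). split. apply Hd; auto; lra. specialize (HFd t ltac:(lra)).
     assert (Rabs (F t - F c) < eps / 2). apply HFd. rewrite Rabs_right; lra. apply Rabs_def2 in H4. lra. }
   replace (c + h0 - c) with h0 in U, Lo by ring.
   apply Rabs_def1.
   + apply Rle_lt_trans with (eps/2); [|lra]. apply (Rmult_le_reg_r h0). lra.
     unfold Rdiv. replace (((h (c + h0) - h c) * / h0 - F c) * h0) with (h (c + h0) - h c - F c * h0) by (field; lra). nra.
   + apply Rlt_le_trans with (-(eps/2)); [lra|]. apply (Rmult_le_reg_r h0). lra.
     unfold Rdiv. replace (((h (c + h0) - h c) * / h0 - F c) * h0) with (h (c + h0) - h c - F c * h0) by (field; lra). nra.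
 - assert (h0 < 0) by lra. rewrite Rabs_left in Hlt by lra.
   assert (U : h c - h (c + h0) <= (F c + eps/2) * (c - (c + h0))).
   { apply (gaugeM h (c + h0) c E); try lra. eapply ac_restrict; eauto; lra. exact HE.
     intros t Ht Et. exists (F t). split. apply Hd; auto; lra. specialize (HFd t ltac:(lra)).
     assert (Rabs (F t - F c) < eps / 2). apply HFd. rewrite Rabs_left1; lra. apply Rabs_def2 in H4. lra. }
   assert (Lo : (F c - eps/2) * (c - (c + h0)) <= h c - h (c + h0)).
   { apply (gaugem h (c + h0) c E); try lra. eapply ac_restrict; eauto; lra. exact HE.
     intros t Ht Et. exists (F t). split. apply Hd; auto; lra. specialize (HFd t ltac:(lra)).
     assert (Rabs (F t - F c) < eps / 2). apply HFd. rewrite Rabs_left1; lra. apply Rabs_def2 in H4. lra. }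
   replace (c - (c + h0)) with (- h0) in U, Lo by ring.
   apply Rabs_def1.
   + apply Rle_lt_trans with (eps/2); [|lra]. apply (Rmult_le_reg_r (- h0)). lra.
     unfold Rdiv. replace (((h (c + h0) - h c) * / h0 - F c) * - h0) with (h c - h (c + h0) - F c * (- h0)) by (field; lra). nra.
   + apply Rlt_le_trans with (-(eps/2)); [lra|]. apply (Rmult_le_reg_r (- h0)). lra.
     unfold Rdiv. replace (((h (c + h0) - h c) * / h0 - F c) * - h0) with (h c - h (c + h0) - F c * (- h0)) by (field; lra). nra.
Qed.

Lemma vdot_minus n (g a b : Vec n) : vdot g a - vdot g b = vdot g (fun k => a k - b k).
Proof. unfold vdot. rewrite <- fsum_minus. apply fsum_ext. intro; ring. Qed.

Lemma V_chain n (V : Vec n -> R) (G : Vec n -> Vec n) (y : R -> Vec n) (v : Vec n) c :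
  C1_with_grad V G -> (forall k, derivable_pt_lim (fun t => y t k) c (v k)) ->
  derivable_pt_lim (fun t => V (y t)) c (vdot (G (y c)) v).
Proof. intros [HV _] Hy eps He.
 set (x := y c). set (g := G x).
 pose proof (vnorm_nonneg n g) as Hg0. pose proof (vnorm_nonneg n v) as Hv0. pose proof (pos_INR n) as Hn0.
 set (e2 := Rmin 1 (eps / (2 * (vnorm g + 1))) / (INR n + 1)).
 assert (Hm : 0 < Rmin 1 (eps / (2 * (vnorm g + 1)))). apply Rmin_pos. lra. apply Rdiv_lt_0_compat; lra.
 assert (He2 : 0 < e2). unfold e2. apply Rdiv_lt_0_compat; lra.
 destruct (fin_min n (fun k d => forall h0, h0 <> 0 -> Rabs h0 < d -> Rabs ((y (c + h0) k - y c k) / h0 - v k) < e2)) as [d2 [Hd2 H2]].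
 - intros k d d' Hd' Hp h0 H0 H1. apply Hp; auto; lra.
 - intro k. destruct (Hy k e2 He2) as [del Hdel]. exists del. split. apply cond_pos. intros; apply Hdel; auto.
 - set (e1 := eps / (2 * (vnorm v + 1))). assert (He1 : 0 < e1). unfold e1. apply Rdiv_lt_0_compat; lra.
   destruct (HV x e1 He1) as [d1 [Hd1 H1]].
   assert (Hp : 0 < Rmin d2 (d1 / (vnorm v + 1))). apply Rmin_pos; auto. apply Rdiv_lt_0_compat; lra.
   exists (mkposreal _ Hp). simpl. intros h0 Hh0 Hlt.
   pose proof (Rmin_l d2 (d1 / (vnorm v + 1))). pose proof (Rmin_r d2 (d1 / (vnorm v + 1))).
   set (q := fun k => (y (c + h0) k - y c k) / h0).
   assert (Hq : vnorm (vsub q v) <= Rmin 1 (eps / (2 * (vnorm g + 1)))).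
   { apply Rle_trans with (INR n * e2). apply vnorm_small. intro k. left. apply H2; auto. lra.
     unfold e2. apply Rmult_le_reg_r with (INR n + 1). lra. replace (INR n * (Rmin 1 (eps / (2 * (vnorm g + 1))) / (INR n + 1)) * (INR n + 1)) with (INR n * Rmin 1 (eps / (2 * (vnorm g + 1)))) by (field; lra). nra. }
   pose proof (Rmin_l 1 (eps / (2 * (vnorm g + 1)))). pose proof (Rmin_r 1 (eps / (2 * (vnorm g + 1)))).
   assert (Hqn : vnorm q <= vnorm v + 1).
   { pose proof (vsub_triang n q v (fun _ => 0)). unfold vsub in H5 at 1 3. 
     replace (vnorm (fun i => q i - 0)) with (vnorm q) in H5 by (unfold vnorm; apply fsum_ext; intro; f_equal; ring).
     replace (vnorm (fun i => v i - 0)) with (vnorm v) in H5 by (unfold vnorm; apply fsum_ext; intro; f_equal; ring). lra. }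
   assert (Hdiff : vsub (y (c + h0)) x = fun k => h0 * q k).
   { apply functional_extensionality. intro k. unfold vsub, q, x. field. auto. }
   assert (Hnd : vnorm (vsub (y (c + h0)) x) = Rabs h0 * vnorm q).
   { rewrite Hdiff. unfold vnorm. rewrite <- fsum_scal. apply fsum_ext. intro; apply Rabs_mult. }
   assert (Hsm : vnorm (vsub (y (c + h0)) x) < d1).
   { rewrite Hnd. apply Rle_lt_trans with (Rabs h0 * (vnorm v + 1)). apply Rmult_le_compat_l. apply Rabs_pos. auto.
     apply Rlt_le_trans with (d1 / (vnorm v + 1) * (vnorm v + 1)). apply Rmult_lt_compat_r; lra.
     right; field; lra. }
   specialize (H1 _ Hsm). fold g in H1. rewrite Hnd in H1.
   assert (Hdot : vdot g (vsub (y (c + h0)) x) = h0 * vdot g q).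
   { rewrite Hdiff. unfold vdot. rewrite <- fsum_scal. apply fsum_ext. intro; ring. }
   rewrite Hdot in H1.
   replace ((V (y (c + h0)) - V x) / h0 - vdot g v) with
      ((V (y (c + h0)) - V x - h0 * vdot g q) / h0 + (vdot g q - vdot g v)) by (unfold x; field; auto).
   eapply Rle_lt_trans. apply Rabs_triang.
   assert (A1 : Rabs ((V (y (c + h0)) - V x - h0 * vdot g q) / h0) <= e1 * vnorm q).
   { unfold Rdiv. rewrite Rabs_mult, Rabs_inv. apply Rmult_le_reg_r with (Rabs h0). apply Rabs_pos_lt; auto.
     rewrite Rmult_assoc, Rinv_l. rewrite Rmult_1_r. nra. apply Rabs_no_R0; auto. }
   assert (A2 : Rabs (vdot g q - vdot g v) <= vnorm g * vnorm (vsub q v)).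
   { rewrite vdot_minus. apply vdot_bound. }
   assert (e1 * vnorm q <= eps / 2). { apply Rle_trans with (e1 * (vnorm v + 1)). apply Rmult_le_compat_l; lra. unfold e1. right; field; lra. }
   assert (vnorm g * vnorm (vsub q v) < eps / 2).
   { apply Rle_lt_trans with (vnorm g * (eps / (2 * (vnorm g + 1)))). apply Rmult_le_compat_l; lra.
     apply Rmult_lt_reg_r with (2 * (vnorm g + 1)). lra. replace (vnorm g * (eps / (2 * (vnorm g + 1))) * (2 * (vnorm g + 1))) with (vnorm g * eps) by (field; lra). nra. }
   lra.
Qed.

Fixpoint fin_list (n : nat) : list (Fin.t n) :=
  match n with O => nil | S m => Fin.F1 :: map Fin.FS (fin_list m) end.

Lemma fin_list_in n (i : Fin.t n) : In i (fin_list n).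
Proof. induction i; simpl. auto. right. apply in_map. auto. Qed.

Section Coords.
Variable Nw : Net.

Inductive crd : Type := CE (e : Fin.t (nE Nw)) | CO (j : Fin.t (nN Nw)) | CX (j : Fin.t (nN Nw)) (k : Fin.t (nd Nw j)).

Definition getc (x : state Nw) (c : crd) : R :=
  match c with CE e => eta x e | CO j => om x j | CX j k => xs x j k end.

Definition mkc (f : crd -> R) : state Nw := mkState (fun e => f (CE e)) (fun j => f (CO j)) (fun j k => f (CX j k)).

Lemma getc_mkc f c : getc (mkc f) c = f c.
Proof. destruct c; reflexivity. Qed.

Definition crd_list : list crd :=
  map CE (fin_list _) ++ map CO (fin_list _) ++ flat_map (fun j => map (CX j) (fin_list _)) (fin_list _).

Lemma crd_list_in c : In c crd_list.
Proof. unfold crd_list. destruct c; apply in_or_app.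
 left. apply in_map. apply fin_list_in.
 right. apply in_or_app. left. apply in_map. apply fin_list_in.
 right. apply in_or_app. right. apply in_flat_map. exists j. split. apply fin_list_in. apply in_map. apply fin_list_in. Qed.

Lemma crd_min (P : crd -> R -> Prop) :
  (forall c d d', 0 < d' <= d -> P c d -> P c d') -> (forall c, exists d, 0 < d /\ P c d) ->
  exists d, 0 < d /\ forall c, P c d.
Proof. intros Hm H.
 destruct (fin_min _ (fun e => P (CE e))) as [d1 [H1 H1']]. intros; eapply Hm; eauto. intro; apply H.
 destruct (fin_min _ (fun j => P (CO j))) as [d2 [H2 H2']]. intros; eapply Hm; eauto. intro; apply H.
 destruct (fin_min _ (fun j d => forall k, P (CX j k) d)) as [d3 [H3 H3']]. intros i d d' Hd Hp k; eapply Hm; eauto.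
 intro j. apply (fin_min _ (fun k => P (CX j k))). intros; eapply Hm; eauto. intro; apply H.
 exists (Rmin d1 (Rmin d2 d3)). split. repeat apply Rmin_pos; auto.
 pose proof (Rmin_l d1 (Rmin d2 d3)). pose proof (Rmin_r d1 (Rmin d2 d3)). pose proof (Rmin_l d2 d3). pose proof (Rmin_r d2 d3).
 assert (0 < Rmin d1 (Rmin d2 d3)) by (repeat apply Rmin_pos; auto).
 intros [e|j|j k].
 apply (Hm _ d1). lra. auto. apply (Hm _ d2). lra. auto. apply (Hm _ d3). lra. auto. Qed.

Lemma xclose_getc d (x y : state Nw) : xclose d x y <-> forall c, Rabs (getc x c - getc y c) < d.
Proof. split. intros [H1 [H2 H3]] [e|j|j k]; simpl; auto. intro H. split; [|split]; intros; apply (H (CE _)) || apply (H (CO _)) || apply (H (CX _ _)). Qed.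

Lemma xclose_mono d d' (x y : state Nw) : d <= d' -> xclose d x y -> xclose d' x y.
Proof. rewrite !xclose_getc. intros H H1 c. specialize (H1 c). lra. Qed.

Lemma xclose_sym d (x y : state Nw) : xclose d x y -> xclose d y x.
Proof. rewrite !xclose_getc. intros H c. rewrite Rabs_minus_sym. auto. Qed.

Lemma xclose_trans d d' (x y z : state Nw) : xclose d x y -> xclose d' y z -> xclose (d + d') x z.
Proof. rewrite !xclose_getc. intros H H' c. specialize (H c). specialize (H' c).
 replace (getc x c - getc z c) with ((getc x c - getc y c) + (getc y c - getc z c)) by ring.
 eapply Rle_lt_trans. apply Rabs_triang. lra. Qed.

Lemma xclose_vnorm d (x y : state Nw) j : xclose d x y -> vnorm (vsub (xs x j) (xs y j)) <= INR (nd Nw j) * d.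
Proof. intros [_ [_ H]]. apply vnorm_small. intro k. left. apply H. Qed.

End Coords.
Arguments CE {Nw}. Arguments CO {Nw}. Arguments CX {Nw}.

Lemma sum_incidence nn ne (f : Fin.t ne -> Fin.t nn) (q : Fin.t ne -> R) (a : Fin.t nn -> R) :
  fsum nn (fun j => a j * fsum ne (fun e => if Fin.eq_dec (f e) j then q e else 0)) = fsum ne (fun e => q e * a (f e)).
Proof.
 rewrite (fsum_ext nn _ (fun j => fsum ne (fun e => if Fin.eq_dec (f e) j then a j * q e else 0))).
 rewrite fsum_swap. apply fsum_ext. intro e. rewrite (fsum_delta nn (f e) (fun j => a j * q e)). ring.
 intro j. rewrite <- fsum_scal. apply fsum_ext. intro e. destruct (Fin.eq_dec (f e) j); ring. Qed.

Section Main.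
Variable Nw : Net.

Definition outf (x : state Nw) j := fsum (nE Nw) (fun e => if Fin.eq_dec (src Nw e) j then pflow x e else 0).
Definition inff (x : state Nw) j := fsum (nE Nw) (fun e => if Fin.eq_dec (dst Nw e) j then pflow x e else 0).
Definition Fom (x : state Nw) j := (- pL Nw j + gs Nw j (xs x j) (- om x j) - outf x j + inff x j) / Mc Nw j.

Lemma flow_om_0 (z : hstate Nw) j : (forall j, sg z j = 0%Z) -> flow_om z j = Fom (hx z) j.
Proof. intro H. unfold flow_om, Fom, outf, inff. rewrite H. simpl IZR. f_equal. ring. Qed.

Definition flowc (x : state Nw) (c : crd Nw) : R :=
  match c with
  | CE e => om x (src Nw e) - om x (dst Nw e)
  | CO j => Fom x j
  | CX j k => fs Nw j (xs x j) (- om x j) k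
  end.

Lemma out_diff x y j : outf x j - outf y j = fsum (nE Nw) (fun e => if Fin.eq_dec (src Nw e) j then pflow x e - pflow y e else 0).
Proof. unfold outf. rewrite <- fsum_minus. apply fsum_ext. intro e. destruct (Fin.eq_dec (src Nw e) j); ring. Qed.
Lemma in_diff x y j : inff x j - inff y j = fsum (nE Nw) (fun e => if Fin.eq_dec (dst Nw e) j then pflow x e - pflow y e else 0).
Proof. unfold inff. rewrite <- fsum_minus. apply fsum_ext. intro e. destruct (Fin.eq_dec (dst Nw e) j); ring. Qed.

Lemma flows_cancel (x y : state Nw) :
  fsum (nN Nw) (fun j => om x j * (- (outf x j - outf y j) + (inff x j - inff y j))) =
  fsum (nE Nw) (fun e => (pflow x e - pflow y e) * (om x (dst Nw e) - om x (src Nw e))).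
Proof.
 rewrite (fsum_ext _ _ (fun j => - (om x j * (outf x j - outf y j)) + om x j * (inff x j - inff y j))) by (intro; ring).
 rewrite fsum_plus, fsum_opp.
 rewrite (fsum_ext _ (fun j => om x j * (outf x j - outf y j)) (fun j => om x j * fsum (nE Nw) (fun e => if Fin.eq_dec (src Nw e) j then pflow x e - pflow y e else 0))) by (intro; rewrite out_diff; auto).
 rewrite (fsum_ext _ (fun j => om x j * (inff x j - inff y j)) (fun j => om x j * fsum (nE Nw) (fun e => if Fin.eq_dec (dst Nw e) j then pflow x e - pflow y e else 0))) by (intro; rewrite in_diff; auto).
 rewrite !sum_incidence. rewrite <- fsum_opp, <- fsum_plus. apply fsum_ext. intro; ring. Qed.

Variable xst : state Nw.
Hypothesis HM : forall j, 0 < Mc Nw j.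
Hypothesis bal : forall j, - pL Nw j + gs Nw j (xs xst j) 0 - outf xst j + inff xst j = 0.
Variable G : forall j, Vec (nd Nw j) -> Vec (nd Nw j).

Definition Psi j (y : Vec (nd Nw j)) u := u * (gs Nw j y u - gs Nw j (xs xst j) 0) - vdot (G j y) (fs Nw j y u).

Definition Dfun (x : state Nw) :=
  fsum (nN Nw) (fun j => Mc Nw j * om x j * Fom x j) +
  fsum (nE Nw) (fun e => Bc Nw e * (sin (eta x e) - sin (eta xst e)) * (om x (src Nw e) - om x (dst Nw e))) +
  fsum (nN Nw) (fun j => vdot (G j (xs x j)) (fs Nw j (xs x j) (- om x j))).

Lemma Dfun_Psi x : Dfun x = - fsum (nN Nw) (fun j => Psi j (xs x j) (- om x j)).
Proof. unfold Dfun.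
 rewrite (fsum_ext _ (fun j => Mc Nw j * om x j * Fom x j)
   (fun j => om x j * (gs Nw j (xs x j) (- om x j) - gs Nw j (xs xst j) 0) + om x j * (- (outf x j - outf xst j) + (inff x j - inff xst j)))).
 2:{ intro j. unfold Fom. specialize (bal j). specialize (HM j).
     assert (E : - pL Nw j + gs Nw j (xs x j) (- om x j) - outf x j + inff x j =
        (gs Nw j (xs x j) (- om x j) - gs Nw j (xs xst j) 0) + (- (outf x j - outf xst j) + (inff x j - inff xst j))) by lra.
     rewrite E. field. lra. }
 rewrite fsum_plus, flows_cancel.
 rewrite <- fsum_opp.
 assert (fsum (nE Nw) (fun e => (pflow x e - pflow xst e) * (om x (dst Nw e) - om x (src Nw e))) +
         fsum (nE Nw) (fun e => Bc Nw e * (sin (eta x e) - sin (eta xst e)) * (om x (src Nw e) - om x (dst Nw e))) = 0).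
 { rewrite <- fsum_plus. apply fsum_zero. intro e. unfold pflow. ring. }
 assert (fsum (nN Nw) (fun j => om x j * (gs Nw j (xs x j) (- om x j) - gs Nw j (xs xst j) 0)) +
         fsum (nN Nw) (fun j => vdot (G j (xs x j)) (fs Nw j (xs x j) (- om x j))) =
         fsum (nN Nw) (fun j => - Psi j (xs x j) (- om x j))).
 { rewrite <- fsum_plus. apply fsum_ext. intro j. unfold Psi. ring. }
 lra. Qed.

End Main.

Lemma dl_ext f g t d d' : (forall s, f s = g s) -> d = d' -> derivable_pt_lim f t d -> derivable_pt_lim g t d'.
Proof. intros H1 H2 H. replace g with f by (apply functional_extensionality; auto). subst; auto. Qed.

Lemma d_cmul C f t d : derivable_pt_lim f t d -> derivable_pt_lim (fun s => C * f s) t (C * d).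
Proof. intro H. pose proof (derivable_pt_lim_mult (fct_cte C) f t 0 d (derivable_pt_lim_const C t) H).
 eapply dl_ext; [| |apply H0]. intro; reflexivity. unfold fct_cte; ring. Qed.

Lemma d_sq C f t d : derivable_pt_lim f t d -> derivable_pt_lim (fun s => C * (f s * f s) / 2) t (C * f t * d).
Proof. intro H. pose proof (d_cmul (C/2) _ t _ (derivable_pt_lim_mult f f t d d H H)).
 eapply dl_ext; [| |apply H0]. intro s. unfold mult_fct. field. field. Qed.

Definition hfun a b := cos b - cos a - sin b * (a - b).

Lemma d_hfun B f t d b : derivable_pt_lim f t d ->
  derivable_pt_lim (fun s => B * hfun (f s) b) t (B * (sin (f t) - sin b) * d).
Proof. intro H. unfold hfun.
 assert (H1 : derivable_pt_lim (fun s => cos (f s)) t (- sin (f t) * d)).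
 { apply (derivable_pt_lim_comp f cos). auto. apply derivable_pt_lim_cos. }
 assert (H2 : derivable_pt_lim (fun s => cos b - cos (f s) - sin b * (f s - b)) t (0 - (- sin (f t) * d) - sin b * (d - 0))).
 { apply derivable_pt_lim_minus. apply derivable_pt_lim_minus. apply derivable_pt_lim_const. auto.
   apply d_cmul. apply derivable_pt_lim_minus. auto. apply derivable_pt_lim_const. }
 eapply dl_ext; [| |apply (d_cmul B _ _ _ H2)]. intro; reflexivity. ring. Qed.

Section W.
Variable Nw : Net.
Variable xst : state Nw.
Variable V : forall j, Vec (nd Nw j) -> R.
Variable G : forall j, Vec (nd Nw j) -> Vec (nd Nw j).
Hypothesis HC1 : forall j, C1_with_grad (V j) (G j).

Definition W (x : state Nw) :=
  fsum (nN Nw) (fun j => Mc Nw j * (om x j * om x j) / 2) +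
  fsum (nE Nw) (fun e => Bc Nw e * hfun (eta x e) (eta xst e)) +
  fsum (nN Nw) (fun j => V j (xs x j) - V j (xs xst j)).

Lemma W_deriv (x : R -> state Nw) t :
  (forall c, derivable_pt_lim (fun s => getc Nw (x s) c) t (flowc Nw (x t) c)) ->
  derivable_pt_lim (fun s => W (x s)) t (Dfun Nw xst G (x t)).
Proof. intro H. unfold W, Dfun.
 apply (derivable_pt_lim_plus (fun s => fsum (nN Nw) (fun j => Mc Nw j * (om (x s) j * om (x s) j) / 2) +
    fsum (nE Nw) (fun e => Bc Nw e * hfun (eta (x s) e) (eta xst e)))
   (fun s => fsum (nN Nw) (fun j => V j (xs (x s) j) - V j (xs xst j)))).
 apply (derivable_pt_lim_plus (fun s => fsum (nN Nw) (fun j => Mc Nw j * (om (x s) j * om (x s) j) / 2))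
    (fun s => fsum (nE Nw) (fun e => Bc Nw e * hfun (eta (x s) e) (eta xst e)))).
 - apply (fsum_deriv _ (fun j s => Mc Nw j * (om (x s) j * om (x s) j) / 2)). intro j.
   apply d_sq. apply (H (CO j)).
 - apply (fsum_deriv _ (fun e s => Bc Nw e * hfun (eta (x s) e) (eta xst e))). intro e.
   apply d_hfun. apply (H (CE e)).
 - apply (fsum_deriv _ (fun j s => V j (xs (x s) j) - V j (xs xst j))). intro j.
   replace (vdot (G j (xs (x t) j)) (fs Nw j (xs (x t) j) (- om (x t) j))) with
     (vdot (G j (xs (x t) j)) (fs Nw j (xs (x t) j) (- om (x t) j)) - 0) by ring.
   apply derivable_pt_lim_minus. 2: apply derivable_pt_lim_const.
   apply (V_chain _ (V j) (G j) (fun s => xs (x s) j)). auto. intro k. apply (H (CX j k)).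
Qed.
End W.

Lemma hfun_deriv a b : derivable_pt_lim (fun s => hfun s b) a (sin a - sin b).
Proof. pose proof (d_hfun 1 (fun s => s) a 1 b (derivable_pt_lim_id a)). eapply dl_ext; [| |apply H]; simpl.
 intro; ring. ring. Qed.

Lemma hfun_nonneg a b : Rabs a <= PI/2 -> Rabs b <= PI/2 -> 0 <= hfun a b.
Proof. intros Ha Hb. apply abs_le_inv in Ha. apply abs_le_inv in Hb.
 assert (hbb : hfun b b = 0) by (unfold hfun; ring).
 destruct (Rle_dec b a).
 - assert (0 * (a - b) <= hfun a b - hfun b b). apply (mono_m (fun s => hfun s b)); auto.
   intros t Ht. exists (sin t - sin b). split. apply hfun_deriv. assert (sin b <= sin t). apply sin_incr_1; lra. lra. lra.
 - assert (hfun b b - hfun a b <= 0 * (b - a)). apply (mono_M (fun s => hfun s b)); try lra.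
   intros t Ht. exists (sin t - sin b). split. apply hfun_deriv. assert (sin t <= sin b). apply sin_incr_1; lra. lra. lra. Qed.

Lemma hfun_pos a b r : 0 < r -> Rabs b + r < PI/2 -> Rabs (a - b) = r -> 0 < hfun a b.
Proof. intros Hr Hb Hab. pose proof (Rabs_pos b). pose proof (Rle_abs b). pose proof (Rle_abs (-b)). rewrite Rabs_Ropp in H1.
 destruct (Rle_dec b a).
 - rewrite Rabs_right in Hab by lra.
   assert (0 <= hfun (b + r/2) b). apply hfun_nonneg; apply Rabs_le; lra.
   assert ((sin (b + r/2) - sin b) * (a - (b + r/2)) <= hfun a b - hfun (b + r/2) b).
   apply (mono_m (fun s => hfun s b)). lra. intros t Ht. exists (sin t - sin b). split. apply hfun_deriv.
   assert (sin (b + r/2) <= sin t). apply sin_incr_1; lra. lra.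
   assert (sin b < sin (b + r/2)). apply sin_increasing_1; lra.
   assert (0 < (sin (b + r/2) - sin b) * (a - (b + r/2))). apply Rmult_lt_0_compat; lra. lra.
 - rewrite Rabs_left in Hab by lra.
   assert (0 <= hfun (b - r/2) b). apply hfun_nonneg; apply Rabs_le; lra.
   assert (hfun (b - r/2) b - hfun a b <= (sin (b - r/2) - sin b) * ((b - r/2) - a)).
   apply (mono_M (fun s => hfun s b)). lra. intros t Ht. exists (sin t - sin b). split. apply hfun_deriv.
   assert (sin t <= sin (b - r/2)). apply sin_incr_1; lra. lra.
   assert (sin (b - r/2) < sin b). apply sin_increasing_1; lra.
   assert ((sin (b - r/2) - sin b) * ((b - r/2) - a) < 0). apply Rmult_neg_pos; lra. lra. Qed.

Lemma V_cont n (V : Vec n -> R) G : C1_with_grad V G -> forall p eps, 0 < eps -> exists d, 0 < d /\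
  forall y, vnorm (vsub y p) < d -> Rabs (V y - V p) < eps.
Proof. intros [H1 _] p eps He. pose proof (vnorm_nonneg n (G p)).
 destruct (H1 p 1 ltac:(lra)) as [d [Hd Hd']].
 exists (Rmin d (eps / (vnorm (G p) + 2))). split. apply Rmin_pos; auto. apply Rdiv_lt_0_compat; lra.
 intros y Hy. pose proof (Rmin_l d (eps / (vnorm (G p) + 2))). pose proof (Rmin_r d (eps / (vnorm (G p) + 2))).
 specialize (Hd' y ltac:(lra)). pose proof (vdot_bound n (G p) (vsub y p)). pose proof (vnorm_nonneg n (vsub y p)).
 assert (Rabs (V y - V p) <= (vnorm (G p) + 1) * vnorm (vsub y p)).
 { replace (V y - V p) with ((V y - V p - vdot (G p) (vsub y p)) + vdot (G p) (vsub y p)) by ring.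
   eapply Rle_trans. apply Rabs_triang. lra. }
 assert ((vnorm (G p) + 1) * vnorm (vsub y p) < eps).
 { apply Rle_lt_trans with ((vnorm (G p) + 1) * (eps / (vnorm (G p) + 2))). apply Rmult_le_compat_l; lra.
   apply Rmult_lt_reg_r with (vnorm (G p) + 2). lra.
   replace ((vnorm (G p) + 1) * (eps / (vnorm (G p) + 2)) * (vnorm (G p) + 2)) with ((vnorm (G p) + 1) * eps) by (field; lra). nra. }
 lra. Qed.

Lemma bw_vec n (y : nat -> Vec n) B : (forall m k, Rabs (y m k) <= B) ->
  exists phi : nat -> nat, (forall m, (phi m < phi (S m))%nat) /\ exists p : Vec n,
    Un_cv (fun m => vnorm (vsub (y (phi m)) p)) 0.
Proof. intro HB. destruct (bw_list (fin_list n) y B HB) as [phi [Hphi Hc]].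
 assert (H : forall k, exists L, Un_cv (fun m => y (phi m) k) L). intro k. apply Hc. apply fin_list_in.
 set (p := fun k => proj1_sig (constructive_indefinite_description _ (H k))).
 assert (Hp : forall k, Un_cv (fun m => y (phi m) k) (p k)). intro k. unfold p. destruct (constructive_indefinite_description _ (H k)); auto.
 exists phi. split; auto. exists p.
 replace 0 with (fsum n (fun _ => 0)) by (apply fsum_zero; auto).
 apply (fsum_cv n (fun m k => Rabs (y (phi m) k - p k))). intro k.
 intros eps He. destruct (Hp k eps He) as [N HN]. exists N. intros m Hm. specialize (HN m Hm). unfold Rdist in *.
 rewrite Rminus_0_r, Rabs_Rabsolu. auto. Qed.

Lemma vnorm_zero_eq n (y x : Vec n) : vnorm (vsub y x) = 0 -> y = x.
Proof. intro H. apply functional_extensionality. intro k.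
 assert (H0 : Rabs (y k - x k) <= vnorm (vsub y x)) by exact (vnorm_coord n (vsub y x) k).
 pose proof (Rabs_pos (y k - x k)). assert (Rabs (y k - x k) = 0) by lra.
 destruct (Req_dec (y k - x k) 0). lra. apply Rabs_no_R0 in H3. contradiction. Qed.

Lemma strict_min_nonneg n (V : Vec n -> R) x r : strict_local_min V x ->
  (exists d, 0 < d /\ r < d /\ forall y, 0 < vnorm (vsub y x) < d -> V x < V y) ->
  forall y, vnorm (vsub y x) <= r -> 0 <= V y - V x.
Proof. intros _ [d [Hd [Hrd H]]] y Hy. destruct (Req_dec (vnorm (vsub y x)) 0).
 apply vnorm_zero_eq in H0. subst. lra. pose proof (vnorm_nonneg n (vsub y x)).
 specialize (H y ltac:(lra)). lra. Qed.

Lemma V_sphere n (V : Vec n -> R) G x r d : C1_with_grad V G -> 0 < r -> r < d ->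
  (forall y, 0 < vnorm (vsub y x) < d -> V x < V y) ->
  exists m, 0 < m /\ forall y, vnorm (vsub y x) = r -> m <= V y - V x.
Proof. intros HC Hr Hrd Hmin. apply NNPP. intro Hn.
 assert (H : forall k : nat, exists y, vnorm (vsub y x) = r /\ V y - V x < / (INR k + 1)).
 { intro k. apply NNPP. intro Hk. apply Hn. exists (/ (INR k + 1)). split. apply Rinv_0_lt_compat. pose proof (pos_INR k); lra.
   intros y Hy. apply Rnot_lt_le. intro Hlt. apply Hk. exists y; auto. }
 set (ys := fun k => proj1_sig (constructive_indefinite_description _ (H k))).
 assert (Hys : forall k, vnorm (vsub (ys k) x) = r /\ V (ys k) - V x < / (INR k + 1)).
 { intro k. unfold ys. destruct (constructive_indefinite_description _ (H k)); auto. }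
 destruct (bw_vec n ys (r + vnorm x)) as [phi [Hphi [p Hp]]].
 { intros m k. destruct (Hys m) as [H1 _].
   assert (H0 : Rabs (ys m k - x k) <= vnorm (vsub (ys m) x)) by exact (vnorm_coord n (vsub (ys m) x) k). pose proof (vnorm_coord n x k). replace (ys m k) with ((ys m k - x k) + x k) by ring. eapply Rle_trans. apply Rabs_triang. lra. }
 assert (Hpr : vnorm (vsub p x) = r).
 { apply Rle_antisym; apply Rnot_lt_le; intro Hlt.
   - destruct (Hp (vnorm (vsub p x) - r) ltac:(lra)) as [N HN]. specialize (HN N (le_n N)). unfold Rdist in HN. rewrite Rminus_0_r, Rabs_right in HN by (apply Rle_ge, vnorm_nonneg).
     pose proof (vsub_triang n p (ys (phi N)) x). destruct (Hys (phi N)). rewrite vsub_sym in HN. lra.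
   - destruct (Hp (r - vnorm (vsub p x)) ltac:(lra)) as [N HN]. specialize (HN N (le_n N)). unfold Rdist in HN. rewrite Rminus_0_r, Rabs_right in HN by (apply Rle_ge, vnorm_nonneg).
     pose proof (vsub_triang n (ys (phi N)) p x). destruct (Hys (phi N)). lra. }
 specialize (Hmin p ltac:(lra)). set (gap := V p - V x).
 destruct (V_cont n V G HC p (gap/2) ltac:(unfold gap; lra)) as [del [Hdel Hdel']].
 destruct (Hp del Hdel) as [N1 HN1]. destruct (inv_small (gap/2) ltac:(unfold gap; lra)) as [N2 HN2].
 set (m := Nat.max N1 N2). specialize (HN1 m ltac:(unfold m; lia)). specialize (HN2 (phi m)).
 assert (N2 <= phi m)%nat. pose proof (incr_ge phi Hphi m). unfold m in *. lia. specialize (HN2 H0).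
 unfold Rdist in HN1. rewrite Rminus_0_r, Rabs_right in HN1 by (apply Rle_ge, vnorm_nonneg).
 specialize (Hdel' _ HN1). destruct (Hys (phi m)) as [_ Hv]. apply Rabs_def2 in Hdel'. unfold gap in *. lra. Qed.

Lemma vdot_split n (a b c d : Vec n) : vdot a b - vdot c d = vdot (vsub a c) b + vdot c (vsub b d).
Proof. unfold vdot, vsub. rewrite <- fsum_minus, <- fsum_plus. apply fsum_ext; intro; ring. Qed.

Lemma Psi_cont n (gf : Vec n -> R -> R) (ff : Vec n -> R -> Vec n) (Gf : Vec n -> Vec n) gst :
  globally_lipschitz ff gf ->
  (forall x eps, 0 < eps -> exists d, 0 < d /\ forall y, vnorm (vsub y x) < d -> vnorm (vsub (Gf y) (Gf x)) < eps) ->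
  forall p u0 eps, 0 < eps -> exists del, 0 < del /\ forall y u, vnorm (vsub y p) < del -> Rabs (u - u0) < del ->
    Rabs ((u * (gf y u - gst) - vdot (Gf y) (ff y u)) - (u0 * (gf p u0 - gst) - vdot (Gf p) (ff p u0))) < eps.
Proof. intros [L HL] HG p u0 eps He.
 set (L1 := Rabs L + 1). assert (HL1 : 0 < L1) by (unfold L1; pose proof (Rabs_pos L); lra).
 assert (HL' : forall x y u v, vnorm (vsub (ff x u) (ff y v)) <= L1 * (vnorm (vsub x y) + Rabs (u - v)) /\
                 Rabs (gf x u - gf y v) <= L1 * (vnorm (vsub x y) + Rabs (u - v))).
 { intros. destruct (HL x y u v). pose proof (vnorm_nonneg n (vsub x y)). pose proof (Rabs_pos (u - v)).
   pose proof (Rle_abs L). unfold L1. split; nra. }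
 set (A := vnorm (ff p u0)). set (Gp := vnorm (Gf p)). set (C1 := Rabs (gf p u0 - gst) + 2 * L1).
 pose proof (vnorm_nonneg n (ff p u0)). pose proof (vnorm_nonneg n (Gf p)). pose proof (Rabs_pos (gf p u0 - gst)). pose proof (Rabs_pos u0).
 set (eta := eps / (2 * (A + 2 * L1 + 1))).
 assert (Heta : 0 < eta). unfold eta. apply Rdiv_lt_0_compat. lra. unfold A; lra.
 destruct (HG p eta Heta) as [dG [HdG HdG']].
 set (K := C1 + 2 * L1 * Rabs u0 + 2 * L1 * Gp + 1).
 assert (HK : 0 < K). unfold K, C1, Gp. nra.
 exists (Rmin 1 (Rmin dG (eps / (2 * K)))). split. repeat apply Rmin_pos; try lra. apply Rdiv_lt_0_compat; lra.
 intros y u Hy Hu.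
 pose proof (Rmin_l 1 (Rmin dG (eps / (2 * K)))). pose proof (Rmin_r 1 (Rmin dG (eps / (2 * K)))).
 pose proof (Rmin_l dG (eps / (2 * K))). pose proof (Rmin_r dG (eps / (2 * K))).
 set (del := Rmin 1 (Rmin dG (eps / (2 * K)))) in *.
 assert (Hdel0 : 0 < del) by (unfold del; repeat apply Rmin_pos; try lra; apply Rdiv_lt_0_compat; lra).
 destruct (HL' y p u u0) as [Hf Hg].
 assert (Hs : vnorm (vsub y p) + Rabs (u - u0) < 2 * del) by lra.
 assert (Hgd : Rabs (gf y u - gf p u0) <= 2 * L1 * del) by nra.
 assert (Hfd : vnorm (vsub (ff y u) (ff p u0)) <= 2 * L1 * del) by nra.
 assert (Hgg : Rabs (gf y u - gst) <= C1).
 { replace (gf y u - gst) with ((gf y u - gf p u0) + (gf p u0 - gst)) by ring. eapply Rle_trans. apply Rabs_triang. unfold C1. nra. }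
 assert (Hfy : vnorm (ff y u) <= A + 2 * L1).
 { pose proof (vsub_triang n (ff y u) (ff p u0) (fun _ => 0)) as H8.
   replace (vnorm (vsub (ff y u) (fun _ => 0))) with (vnorm (ff y u)) in H8 by (unfold vnorm, vsub; apply fsum_ext; intro; f_equal; ring).
   replace (vnorm (vsub (ff p u0) (fun _ => 0))) with A in H8 by (unfold A, vnorm, vsub; apply fsum_ext; intro; f_equal; ring). nra. }
 specialize (HdG' y ltac:(lra)).
 replace ((u * (gf y u - gst) - vdot (Gf y) (ff y u)) - (u0 * (gf p u0 - gst) - vdot (Gf p) (ff p u0)))
   with ((u - u0) * (gf y u - gst) + u0 * (gf y u - gf p u0) - (vdot (Gf y) (ff y u) - vdot (Gf p) (ff p u0))) by ring.
 rewrite vdot_split.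
 pose proof (vdot_bound n (vsub (Gf y) (Gf p)) (ff y u)). pose proof (vdot_bound n (Gf p) (vsub (ff y u) (ff p u0))).
 pose proof (vnorm_nonneg n (vsub (Gf y) (Gf p))). pose proof (vnorm_nonneg n (ff y u)). pose proof (vnorm_nonneg n (vsub (ff y u) (ff p u0))).
 assert (T1 : Rabs ((u - u0) * (gf y u - gst)) <= del * C1). { rewrite Rabs_mult. apply Rmult_le_compat; try apply Rabs_pos; lra. }
 assert (T2 : Rabs (u0 * (gf y u - gf p u0)) <= Rabs u0 * (2 * L1 * del)). { rewrite Rabs_mult. apply Rmult_le_compat_l; try apply Rabs_pos; lra. }
 assert (T3 : vnorm (vsub (Gf y) (Gf p)) * vnorm (ff y u) <= eta * (A + 2 * L1)). { apply Rmult_le_compat; lra. }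
 assert (T4 : vnorm (Gf p) * vnorm (vsub (ff y u) (ff p u0)) <= Gp * (2 * L1 * del)). { unfold Gp. apply Rmult_le_compat_l; lra. }
 assert (T5 : eta * (A + 2 * L1) < eps / 2).
 { unfold eta. apply Rmult_lt_reg_r with (2 * (A + 2 * L1 + 1)). lra.
   replace (eps / (2 * (A + 2 * L1 + 1)) * (A + 2 * L1) * (2 * (A + 2 * L1 + 1))) with (eps * (A + 2 * L1)) by (field; lra). nra. }
 assert (T6 : del * K <= eps / 2).
 { apply Rle_trans with (eps / (2 * K) * K). apply Rmult_le_compat_r; lra. right; field; lra. }
 assert (Rabs ((u - u0) * (gf y u - gst) + u0 * (gf y u - gf p u0) - (vdot (vsub (Gf y) (Gf p)) (ff y u) + vdot (Gf p) (vsub (ff y u) (ff p u0))))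
   <= del * C1 + Rabs u0 * (2 * L1 * del) + eta * (A + 2 * L1) + Gp * (2 * L1 * del)).
 { eapply Rle_trans. apply Rabs_triang. rewrite Rabs_Ropp. eapply Rle_trans. apply Rplus_le_compat. apply Rabs_triang. apply Rabs_triang.
   unfold Gp in *. lra. }
 assert (del * C1 + Rabs u0 * (2 * L1 * del) + Gp * (2 * L1 * del) <= del * K) by (unfold K; nra).
 lra. Qed.

Lemma Psi_lower n (P : Vec n -> R -> R) x r e : 0 < e ->
  (forall p u0 eps, 0 < eps -> exists del, 0 < del /\ forall y u, vnorm (vsub y p) < del -> Rabs (u - u0) < del -> Rabs (P y u - P p u0) < eps) ->
  (forall y u, vnorm (vsub y x) <= r -> e <= Rabs u <= r -> 0 < P y u) ->
  exists m, 0 < m /\ forall y u, vnorm (vsub y x) <= r -> e <= Rabs u <= r -> m <= P y u.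
Proof. intros He HP Hpos. apply NNPP. intro Hn.
 assert (H : forall k : nat, exists yu : Vec n * R, vnorm (vsub (fst yu) x) <= r /\ e <= Rabs (snd yu) <= r /\ P (fst yu) (snd yu) < / (INR k + 1)).
 { intro k. apply NNPP. intro Hk. apply Hn. exists (/ (INR k + 1)). split. apply Rinv_0_lt_compat. pose proof (pos_INR k); lra.
   intros y u Hy Hu. apply Rnot_lt_le. intro Hlt. apply Hk. exists (y, u); auto. }
 set (yu := fun k => proj1_sig (constructive_indefinite_description _ (H k))).
 assert (Hyu : forall k, vnorm (vsub (fst (yu k)) x) <= r /\ e <= Rabs (snd (yu k)) <= r /\ P (fst (yu k)) (snd (yu k)) < / (INR k + 1)).
 { intro k. unfold yu. destruct (constructive_indefinite_description _ (H k)); auto. }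
 destruct (bw1 (fun k => snd (yu k)) r) as [phi1 [Hphi1 [u0 Hu0]]]. intro k. apply Hyu.
 destruct (bw_vec n (fun k => fst (yu (phi1 k))) (r + vnorm x)) as [phi2 [Hphi2 [p Hp]]].
 { intros m k. destruct (Hyu (phi1 m)) as [H1 _].
   assert (H0 : Rabs (fst (yu (phi1 m)) k - x k) <= vnorm (vsub (fst (yu (phi1 m))) x)) by exact (vnorm_coord n (vsub (fst (yu (phi1 m))) x) k). pose proof (vnorm_coord n x k).
   replace (fst (yu (phi1 m)) k) with ((fst (yu (phi1 m)) k - x k) + x k) by ring. eapply Rle_trans. apply Rabs_triang. lra. }
 set (psi := fun m => phi1 (phi2 m)).
 assert (Hpsi : forall m, (psi m < psi (S m))%nat).
 { intro m. unfold psi. specialize (Hphi2 m). pose proof (incr_mono phi1 Hphi1 (S (phi2 m)) (phi2 (S m)) Hphi2). specialize (Hphi1 (phi2 m)). lia. }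
 assert (Hu : Un_cv (fun m => snd (yu (psi m))) u0). apply (cv_sub (fun k => snd (yu (phi1 k))) u0 phi2); auto.
 assert (Hpr : vnorm (vsub p x) <= r).
 { apply Rnot_lt_le; intro Hlt.
   destruct (Hp (vnorm (vsub p x) - r) ltac:(lra)) as [N HN]. specialize (HN N (le_n N)). unfold Rdist in HN. rewrite Rminus_0_r, Rabs_right in HN by (apply Rle_ge, vnorm_nonneg).
   pose proof (vsub_triang n p (fst (yu (phi1 (phi2 N)))) x). destruct (Hyu (phi1 (phi2 N))). rewrite vsub_sym in HN. lra. }
 assert (Hur : e <= Rabs u0 <= r).
 { split; apply Rnot_lt_le; intro Hlt.
   - destruct (Hu (e - Rabs u0) ltac:(lra)) as [N HN]. specialize (HN N (le_n N)). unfold Rdist in HN.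
     destruct (Hyu (psi N)) as [_ [H1 _]]. pose proof (Rabs_triang_inv (snd (yu (psi N))) u0). lra.
   - destruct (Hu (Rabs u0 - r) ltac:(lra)) as [N HN]. specialize (HN N (le_n N)). unfold Rdist in HN.
     destruct (Hyu (psi N)) as [_ [H1 _]]. pose proof (Rabs_triang_inv u0 (snd (yu (psi N)))). rewrite Rabs_minus_sym in HN. lra. }
 specialize (Hpos p u0 Hpr Hur). set (gap := P p u0).
 destruct (HP p u0 (gap/2) ltac:(unfold gap; lra)) as [del [Hdel Hdel']].
 destruct (Hp del Hdel) as [N1 HN1]. destruct (Hu del Hdel) as [N3 HN3]. destruct (inv_small (gap/2) ltac:(unfold gap; lra)) as [N2 HN2].
 set (m := Nat.max N1 (Nat.max N2 N3)). specialize (HN1 m ltac:(unfold m; lia)). specialize (HN3 m ltac:(unfold m; lia)). specialize (HN2 (psi m)).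
 assert (N2 <= psi m)%nat. pose proof (incr_ge psi Hpsi m). unfold m in *. lia. specialize (HN2 H0).
 unfold Rdist in HN1, HN3. rewrite Rminus_0_r, Rabs_right in HN1 by (apply Rle_ge, vnorm_nonneg).
 specialize (Hdel' _ _ HN1 HN3). destruct (Hyu (psi m)) as [_ [_ Hv]]. apply Rabs_def2 in Hdel'. unfold gap in *. unfold psi in *. lra. Qed.

Section Sol.
Variable Nw : Net.
Hypothesis HM : forall j, 0 < Mc Nw j.
Hypothesis HB : forall e, 0 < Bc Nw e.
Hypothesis Hlip : forall j, globally_lipschitz (fs Nw j) (gs Nw j).

Lemma lip_pos j : exists L, 0 < L /\ forall x y u v,
    vnorm (vsub (fs Nw j x u) (fs Nw j y v)) <= L * (vnorm (vsub x y) + Rabs (u - v)) /\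
    Rabs (gs Nw j x u - gs Nw j y v) <= L * (vnorm (vsub x y) + Rabs (u - v)).
Proof. destruct (Hlip j) as [L HL]. exists (Rabs L + 1). split. pose proof (Rabs_pos L); lra.
 intros. destruct (HL x y u v). pose proof (vnorm_nonneg _ (vsub x y)). pose proof (Rabs_pos (u - v)).
 pose proof (Rle_abs L). split; nra. Qed.

Lemma flowc_lip c : exists Lc, 0 <= Lc /\ forall x y d, 0 <= d -> xclose d x y -> Rabs (flowc Nw x c - flowc Nw y c) <= Lc * d.
Proof. destruct c as [e|j|j k].
 - exists 2. split. lra. intros x y d Hd Hxy. destruct Hxy as [_ [H _]]. simpl.
   replace (om x (src Nw e) - om x (dst Nw e) - (om y (src Nw e) - om y (dst Nw e))) with
     ((om x (src Nw e) - om y (src Nw e)) - (om x (dst Nw e) - om y (dst Nw e))) by ring.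
   eapply Rle_trans. apply Rabs_triang. rewrite Rabs_Ropp. specialize (H (src Nw e)) as H1. specialize (H (dst Nw e)). lra.
 - destruct (lip_pos j) as [L [HL HL']].
   set (SB := fsum (nE Nw) (fun e => Bc Nw e)).
   assert (HSB : 0 <= SB) by (apply fsum_nonneg; intro; left; apply HB).
   exists ((L * (INR (nd Nw j) + 1) + 2 * SB) / Mc Nw j). split.
   apply Rmult_le_pos. pose proof (pos_INR (nd Nw j)). nra. left; apply Rinv_0_lt_compat; auto.
   intros x y d Hd Hxy. simpl. unfold Fom.
   assert (Hp : forall e, Rabs (pflow x e - pflow y e) <= Bc Nw e * d).
   { intro e. unfold pflow. rewrite <- Rmult_minus_distr_l, Rabs_mult, Rabs_right by (left; apply HB).
     apply Rmult_le_compat_l. left; apply HB. eapply Rle_trans. apply sin_lip. destruct Hxy as [H _]. left; apply H. }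
   assert (Ho : Rabs (outf Nw x j - outf Nw y j) <= SB * d).
   { rewrite out_diff. eapply Rle_trans. apply fsum_abs. unfold SB. rewrite Rmult_comm, <- fsum_scal. apply fsum_le. intro e.
     destruct (Fin.eq_dec (src Nw e) j). rewrite Rmult_comm; apply Hp. rewrite Rabs_R0. specialize (HB e). nra. }
   assert (Hi : Rabs (inff Nw x j - inff Nw y j) <= SB * d).
   { rewrite in_diff. eapply Rle_trans. apply fsum_abs. unfold SB. rewrite Rmult_comm, <- fsum_scal. apply fsum_le. intro e.
     destruct (Fin.eq_dec (dst Nw e) j). rewrite Rmult_comm; apply Hp. rewrite Rabs_R0. specialize (HB e). nra. }
   assert (Hg : Rabs (gs Nw j (xs x j) (- om x j) - gs Nw j (xs y j) (- om y j)) <= L * (INR (nd Nw j) + 1) * d).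
   { destruct (HL' (xs x j) (xs y j) (- om x j) (- om y j)) as [_ H]. eapply Rle_trans. apply H.
     pose proof (xclose_vnorm Nw d x y j Hxy). destruct Hxy as [_ [Hw _]]. specialize (Hw j).
     replace (- om x j - - om y j) with (- (om x j - om y j)) by ring. rewrite Rabs_Ropp.
     apply Rle_trans with (L * (INR (nd Nw j) * d + d)). apply Rmult_le_compat_l; lra. right; ring. }
   specialize (HM j).
   replace ((- pL Nw j + gs Nw j (xs x j) (- om x j) - outf Nw x j + inff Nw x j) / Mc Nw j -
            (- pL Nw j + gs Nw j (xs y j) (- om y j) - outf Nw y j + inff Nw y j) / Mc Nw j) with
     (((gs Nw j (xs x j) (- om x j) - gs Nw j (xs y j) (- om y j)) - (outf Nw x j - outf Nw y j) + (inff Nw x j - inff Nw y j)) / Mc Nw j) by (field; lra).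
   unfold Rdiv. rewrite Rabs_mult, (Rabs_right (/ Mc Nw j)) by (left; apply Rinv_0_lt_compat; auto).
   replace ((L * (INR (nd Nw j) + 1) + 2 * SB) * / Mc Nw j * d) with ((L * (INR (nd Nw j) + 1) * d + 2 * SB * d) * / Mc Nw j) by ring.
   apply Rmult_le_compat_r. left; apply Rinv_0_lt_compat; auto.
   set (a1 := gs Nw j (xs x j) (- om x j) - gs Nw j (xs y j) (- om y j)) in *.
   set (a2 := outf Nw x j - outf Nw y j) in *. set (a3 := inff Nw x j - inff Nw y j) in *.
   pose proof (Rabs_triang (a1 - a2) a3).
   assert (Rabs (a1 - a2) <= Rabs a1 + Rabs a2) by (unfold Rminus; eapply Rle_trans; [apply Rabs_triang| rewrite Rabs_Ropp; lra]).
   lra.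
 - destruct (lip_pos j) as [L [HL HL']]. exists (L * (INR (nd Nw j) + 1)). split. pose proof (pos_INR (nd Nw j)). nra.
   intros x y d Hd Hxy. simpl.
   destruct (HL' (xs x j) (xs y j) (- om x j) (- om y j)) as [H _].
   assert (Rabs (fs Nw j (xs x j) (- om x j) k - fs Nw j (xs y j) (- om y j) k) <= vnorm (vsub (fs Nw j (xs x j) (- om x j)) (fs Nw j (xs y j) (- om y j)))) by exact (vnorm_coord _ (vsub (fs Nw j (xs x j) (- om x j)) (fs Nw j (xs y j) (- om y j))) k).
   pose proof (xclose_vnorm Nw d x y j Hxy). destruct Hxy as [_ [Hw _]]. specialize (Hw j).
   replace (- om x j - - om y j) with (- (om x j - om y j)) in H by ring. rewrite Rabs_Ropp in H.
   eapply Rle_trans. apply H0. eapply Rle_trans. apply H.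
   apply Rle_trans with (L * (INR (nd Nw j) * d + d)). apply Rmult_le_compat_l; lra. right; ring.
Qed.

Lemma dom_facts (K : R -> nat -> Prop) : hybrid_time_domain K ->
  (forall t, K t O -> 0 <= t) /\ (forall t s, K t O -> 0 <= s <= t -> K s O) /\
  (forall t l, K t l -> l <> O -> exists t1, K t1 O /\ K t1 1%nat).
Proof. intros [tt [H0 [Hmono [Hall | [J [k Hk]]]]]].
 - split; [|split].
   + intros t Ht. apply Hall in Ht. lra.
   + intros t s Ht Hs. apply Hall in Ht. apply Hall. lra.
   + intros t l _ _. exists (tt 1%nat). split; apply Hall. specialize (Hmono O). lra. specialize (Hmono 1%nat). lra.
 - split; [|split].
   + intros t Ht. apply Hk in Ht. destruct Ht as [[_ Ht]|[HJ Ht]]. lra. subst J. destruct k; simpl in Ht; lra.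
   + intros t s Ht Hs. apply Hk in Ht. apply Hk. destruct Ht as [[HJ Ht]|[HJ Ht]]. left. split; auto. lra.
     right. split; auto. subst J. destruct k; simpl in *; lra.
   + intros t l Ht Hl. apply Hk in Ht. pose proof (Hmono O). pose proof (Hmono 1%nat).
     assert (HJ : (1 <= J)%nat). destruct Ht as [[HJ _]|[HJ _]]; lia.
     exists (tt 1%nat). split; apply Hk. left. split. lia. lra.
     destruct (Nat.eq_dec J 1) as [E1|E1].
     * right. split; auto. subst J. destruct k; simpl; try lra.
       destruct Ht as [[HJ' _]|[HJ' Ht]]. lia. subst l. simpl in Ht. lra.
     * left. split. lia. lra. Qed.

Lemma sol_sg (K : R -> nat -> Prop) (z : R -> nat -> hstate Nw) : is_solution K z ->
  forall t, K t O -> sg (z t O) = sg (z 0 O).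
Proof. intros [_ [H0 [_ [Hf _]]]] t Ht. destruct (Hf O) as [_ [Hs _]]. apply Hs; auto. Qed.

Lemma sol_ac (K : R -> nat -> Prop) (z : R -> nat -> hstate Nw) : is_solution K z ->
  forall a b c, K a O -> K b O -> a <= b -> abs_cont_on (fun s => getc Nw (hx (z s O)) c) a b.
Proof. intros [_ [_ [_ [Hf _]]]] a b c Ha Hb Hab. destruct (Hf O) as [Hac _].
 destruct (Hac a b Ha Hb Hab) as [H1 [H2 H3]]. destruct c; simpl; auto. Qed.

Lemma traj_cont (K : R -> nat -> Prop) (z : R -> nat -> hstate Nw) : is_solution K z ->
  forall t, K t O -> forall eps, 0 < eps -> exists del, 0 < del /\
    forall s, K s O -> Rabs (s - t) < del -> xclose eps (hx (z s O)) (hx (z t O)).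
Proof. intros Hs t Ht eps He. pose proof Hs as [Hd [H0 _]]. destruct (dom_facts K Hd) as [Dpos [Ddown _]].
 destruct (classic (exists b, K b O /\ t < b)) as [[b [Hb Htb]]|Hnb].
 - destruct (crd_min Nw (fun c del => forall s u, 0 <= s <= u -> u <= b -> u - s < del ->
        Rabs (getc Nw (hx (z u O)) c - getc Nw (hx (z s O)) c) < eps)) as [d [Hd0 Hd1]].
   + intros c d d' Hd' Hp s u H1 H2 H3. apply Hp; auto; lra.
   + intro c. apply (ac_cont _ 0 b (sol_ac K z Hs 0 b c H0 Hb (Dpos b Hb)) eps He).
   + exists (Rmin d (b - t)). split. apply Rmin_pos; lra. intros s Ks Hst.
     pose proof (Rmin_l d (b - t)). pose proof (Rmin_r d (b - t)). pose proof (Dpos s Ks). pose proof (Dpos t Ht).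
     apply xclose_getc. intro c. destruct (Rle_dec s t).
     * rewrite Rabs_minus_sym. apply Hd1; try lra. rewrite Rabs_left1 in Hst by lra. lra.
     * apply Hd1; try lra. rewrite Rabs_right in Hst by lra. lra. rewrite Rabs_right in Hst by lra. lra.
 - destruct (crd_min Nw (fun c del => forall s u, 0 <= s <= u -> u <= t -> u - s < del ->
        Rabs (getc Nw (hx (z u O)) c - getc Nw (hx (z s O)) c) < eps)) as [d [Hd0 Hd1]].
   + intros c d d' Hd' Hp s u H1 H2 H3. apply Hp; auto; lra.
   + intro c. apply (ac_cont _ 0 t (sol_ac K z Hs 0 t c H0 Ht (Dpos t Ht)) eps He).
   + exists d. split; auto. intros s Ks Hst. pose proof (Dpos s Ks).
     assert (s <= t). apply Rnot_lt_le. intro. apply Hnb. exists s; auto.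
     apply xclose_getc. intro c. rewrite Rabs_minus_sym. apply Hd1; try lra. rewrite Rabs_left1 in Hst by lra. lra. Qed.

Lemma traj_deriv_all (K : R -> nat -> Prop) (z : R -> nat -> hstate Nw) : is_solution K z ->
  (forall j, sg (z 0 O) j = 0%Z) ->
  forall t b, K b O -> 0 < t < b -> forall c,
    derivable_pt_lim (fun s => getc Nw (hx (z s O)) c) t (flowc Nw (hx (z t O)) c).
Proof. intros Hs Hsg t b Hb Htb c. pose proof Hs as [Hd [H0 [_ [Hf _]]]]. destruct (dom_facts K Hd) as [Dpos [Ddown _]].
 destruct (Hf O) as [_ [_ [_ Hnull]]].
 assert (Kt : K t O). apply (Ddown b); auto; lra.
 apply (traj_deriv _ (fun s => flowc Nw (hx (z s O)) c) 0 b (fun s => K s O /\ ~ flow_deriv_at z O s)); auto.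
 - apply (sol_ac K z Hs); auto.
 - intros s Hsb HE. assert (Ks : K s O). apply (Ddown b); auto.
   assert (Hfd : flow_deriv_at z O s). apply NNPP. intro. apply HE. auto.
   assert (Hsg' : forall j, sg (z s O) j = 0%Z). intro j. rewrite (sol_sg K z Hs s Ks). auto.
   destruct Hfd as [F1 [F2 F3]]. destruct c as [e|j|j k]; simpl.
   + apply F1.
   + rewrite <- flow_om_0; auto.
   + apply F3.
 - intros eps He. destruct (flowc_lip c) as [Lc [HLc HLc']].
   destruct (traj_cont K z Hs t Kt (eps / (Lc + 1))) as [d [Hd0 Hd1]]. apply Rdiv_lt_0_compat; lra.
   exists d. split; auto. intros s Hsb Hst. assert (Ks : K s O). apply (Ddown b); auto.
   specialize (Hd1 s Ks Hst). specialize (HLc' _ _ (eps / (Lc + 1)) ltac:(left; apply Rdiv_lt_0_compat; lra) Hd1).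
   eapply Rle_lt_trans. apply HLc'. apply Rmult_lt_reg_r with (Lc + 1). lra.
   replace (Lc * (eps / (Lc + 1)) * (Lc + 1)) with (Lc * eps) by (field; lra). nra. Qed.
End Sol.

Lemma fsum_cont_gen {T : Type} n (F : Fin.t n -> T -> R) (Cl : R -> T -> Prop) (x0 : T) :
  (forall d d' y, 0 < d' <= d -> Cl d' y -> Cl d y) ->
  (forall i eps, 0 < eps -> exists del, 0 < del /\ forall y, Cl del y -> Rabs (F i y - F i x0) < eps) ->
  forall eps, 0 < eps -> exists del, 0 < del /\ forall y, Cl del y ->
    Rabs (fsum n (fun i => F i y) - fsum n (fun i => F i x0)) <= eps.
Proof. intros Hm HF eps He. pose proof (pos_INR n) as Hn.
 destruct (fin_min n (fun i del => forall y, Cl del y -> Rabs (F i y - F i x0) < eps / (INR n + 1))) as [d [Hd HH]].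
 - intros i d d' Hd' Hp y Hy. apply Hp. eapply Hm; eauto.
 - intro i. apply HF. apply Rdiv_lt_0_compat; lra.
 - exists d. split; auto. intros y Hy. rewrite <- fsum_minus. eapply Rle_trans. apply fsum_abs.
   apply Rle_trans with (INR n * (eps / (INR n + 1))). apply fsum_bound. intro i. left; apply HH; auto.
   apply Rmult_le_reg_r with (INR n + 1). lra.
   replace (INR n * (eps / (INR n + 1)) * (INR n + 1)) with (INR n * eps) by (field; lra). nra. Qed.

Lemma nat_larger x : exists k : nat, x < INR k.
Proof. destruct (Rlt_le_dec x 0). exists O. simpl. lra.
 destruct (archimed x) as [H1 _]. assert (0 <= IZR (up x)) by lra.
 destruct (Z_of_nat_complete (up x)) as [N HN]. apply le_IZR. lra.
 exists N. rewrite HN in H1. rewrite <- INR_IZR_INZ in H1. auto. Qed.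

Lemma exp_le_mono a b : a <= b -> exp a <= exp b.
Proof. intro H. destruct (Req_dec a b). subst; lra. left. apply exp_increasing. lra. Qed.

Lemma vnorm_tri0 n (p q : Vec n) : vnorm p <= vnorm (vsub p q) + vnorm q.
Proof. unfold vnorm, vsub. rewrite <- fsum_plus. apply fsum_le. intro i.
 replace (p i) with ((p i - q i) + q i) at 1 by ring. apply Rabs_triang. Qed.

Lemma vnorm_neg n (a b : Vec n) : vnorm (vsub (fun k => - a k) (fun k => - b k)) = vnorm (vsub a b).
Proof. unfold vnorm, vsub. apply fsum_ext. intro i. rewrite <- Rabs_Ropp. f_equal; ring. Qed.

Lemma d_shift f t d s : derivable_pt_lim f (s + t) d -> derivable_pt_lim (fun sg => f (s + sg)) t d.
Proof. intro H. assert (H1 : derivable_pt_lim (fun sg => s + sg) t (0 + 1)).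
 apply (derivable_pt_lim_plus (fun _ => s) (fun sg => sg)). apply derivable_pt_lim_const. apply derivable_pt_lim_id.
 pose proof (derivable_pt_lim_comp _ f t _ _ H1 H). eapply dl_ext; [| |apply H0]. intro; reflexivity. ring. Qed.

Lemma d_refl f t d s : derivable_pt_lim f (s - t) d -> derivable_pt_lim (fun sg => f (s - sg)) t (- d).
Proof. intro H. assert (H1 : derivable_pt_lim (fun sg => s - sg) t (0 - 1)).
 apply (derivable_pt_lim_minus (fun _ => s) (fun sg => sg)). apply derivable_pt_lim_const. apply derivable_pt_lim_id.
 pose proof (derivable_pt_lim_comp _ f t _ _ H1 H). eapply dl_ext; [| |apply H0]. intro; reflexivity. ring. Qed.

Lemma unif_cv Nw (y : nat -> state Nw) (p : state Nw) : (forall c, Un_cv (fun n => getc Nw (y n) c) (getc Nw p c)) ->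
  forall eps, 0 < eps -> exists N : nat, forall n, (N <= n)%nat -> xclose eps (y n) p.
Proof. intros Hc eps He.
 destruct (crd_min Nw (fun c d => forall n, / d <= INR n -> Rabs (getc Nw (y n) c - getc Nw p c) < eps)) as [d [Hd H]].
 - intros c d d' Hd' Hp n Hn. apply Hp. eapply Rle_trans; [|apply Hn]. apply Rinv_le_contravar; lra.
 - intro c. destruct (Hc c eps He) as [N HN]. exists (/ (INR N + 1)). split. apply Rinv_0_lt_compat. pose proof (pos_INR N); lra.
   intros n Hn. rewrite Rinv_inv in Hn. apply HN. apply INR_le. lra.
 - destruct (nat_larger (/ d)) as [N HN]. exists N. intros n Hn. apply xclose_getc. intro c. apply H.
   apply le_INR in Hn. lra. Qed.

Section Main.
Variable Nw : Net.
Hypothesis HM : forall j, 0 < Mc Nw j.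
Hypothesis HB : forall e, 0 < Bc Nw e.
Hypothesis Hw : forall j, 0 < w0 Nw j < w1 Nw j.
Hypothesis Hlip : forall j, globally_lipschitz (fs Nw j) (gs Nw j).
Variable xst : state Nw.
Hypothesis om_star : forall j, om xst j = 0.
Hypothesis bal : forall j, - pL Nw j + gs Nw j (xs xst j) 0 - outf Nw xst j + inff Nw xst j = 0.
Variable V : forall j, Vec (nd Nw j) -> R.
Variable G : forall j, Vec (nd Nw j) -> Vec (nd Nw j).
Variable ph : Fin.t (nN Nw) -> R -> R.
Hypothesis HC1 : forall j, C1_with_grad (V j) (G j).
Hypothesis Hph : forall j, pos_def (ph j).
Variable r : R.
Hypothesis Hr : 0 < r.
Hypothesis Hr1 : forall j, r < w0 Nw j.
Hypothesis Hpass : forall j u y, Rabs u <= r -> vnorm (vsub y (xs xst j)) <= r ->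
  vdot (G j y) (fs Nw j y u) <= (u - 0) * (gs Nw j y u - gs Nw j (xs xst j) 0) - ph j (u - 0).
Hypothesis Hr4 : forall j, exists d, r < d /\ forall y, 0 < vnorm (vsub y (xs xst j)) < d -> V j (xs xst j) < V j y.
Hypothesis Hr5 : forall e, Rabs (eta xst e) + r < PI/2.
Hypothesis A1ii : forall j (M : Vec (nd Nw j) -> Prop), vcompact M -> invariant_set (fun x => fs Nw j x (- 0)) M ->
      forall x, M x -> forall k, fs Nw j x (- 0) k = 0.

Definition InRc (x : state Nw) := (forall e, Rabs (eta x e - eta xst e) <= r) /\ (forall j, Rabs (om x j) <= r) /\
   (forall j, vnorm (vsub (xs x j) (xs xst j)) <= r).
Definition InRo (x : state Nw) := (forall e, Rabs (eta x e - eta xst e) < r) /\ (forall j, Rabs (om x j) < r) /\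
   (forall j, vnorm (vsub (xs x j) (xs xst j)) < r).

Lemma InRo_c x : InRo x -> InRc x.
Proof. intros [H1 [H2 H3]]. split; [|split]; intros; left; auto. Qed.

Definition Wf := W Nw xst V.

Lemma Vterm_nonneg j y : vnorm (vsub y (xs xst j)) <= r -> 0 <= V j y - V j (xs xst j).
Proof. intro Hy. destruct (Hr4 j) as [d [Hd Hd']]. destruct (Req_dec (vnorm (vsub y (xs xst j))) 0).
 apply vnorm_zero_eq in H. subst. lra. pose proof (vnorm_nonneg _ (vsub y (xs xst j))).
 specialize (Hd' y ltac:(lra)). lra. Qed.

Lemma Hterm_nonneg x e : InRc x -> 0 <= Bc Nw e * hfun (eta x e) (eta xst e).
Proof. intros [H _]. specialize (H e). specialize (Hr5 e). pose proof (HB e).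
 apply Rmult_le_pos. lra. apply hfun_nonneg. pose proof (Rabs_triang (eta x e - eta xst e) (eta xst e)).
 replace (eta x e - eta xst e + eta xst e) with (eta x e) in H1 by ring. lra. lra. Qed.

Lemma W_parts x : InRc x ->
  0 <= fsum (nN Nw) (fun j => Mc Nw j * (om x j * om x j) / 2) /\
  0 <= fsum (nE Nw) (fun e => Bc Nw e * hfun (eta x e) (eta xst e)) /\
  0 <= fsum (nN Nw) (fun j => V j (xs x j) - V j (xs xst j)).
Proof. intro Hx. split; [|split]; apply fsum_nonneg; intro i.
 specialize (HM i). assert (0 <= om x i * om x i) by nra. nra.
 apply Hterm_nonneg; auto. apply Vterm_nonneg. apply Hx. Qed.

Lemma W_nonneg x : InRc x -> 0 <= Wf x.
Proof. intro Hx. destruct (W_parts x Hx) as [A [B C]]. unfold Wf, W. lra. Qed.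

Lemma W_star : Wf xst = 0.
Proof. unfold Wf, W.
 assert (A : fsum (nN Nw) (fun j => Mc Nw j * (om xst j * om xst j) / 2) = 0).
 { apply fsum_zero. intro j. rewrite om_star. field. }
 assert (B : fsum (nE Nw) (fun e => Bc Nw e * hfun (eta xst e) (eta xst e)) = 0).
 { apply fsum_zero. intro e. unfold hfun. ring. }
 assert (C : fsum (nN Nw) (fun j => V j (xs xst j) - V j (xs xst j)) = 0).
 { apply fsum_zero. intro j. ring. }
 rewrite A, B, C. ring. Qed.

Lemma Psi_ph x j : InRc x -> ph j (- om x j) <= Psi Nw xst G j (xs x j) (- om x j).
Proof. intros [_ [H2 H3]]. unfold Psi. specialize (Hpass j (- om x j) (xs x j)). rewrite Rabs_Ropp in Hpass.
 specialize (Hpass (H2 j) (H3 j)). rewrite Rminus_0_r in Hpass. lra. Qed.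

Lemma ph_nonneg j u : 0 <= ph j u.
Proof. destruct (Hph j) as [H0 H1]. destruct (Req_dec u 0). subst. lra. left; auto. Qed.

Lemma Dfun_nonpos x : InRc x -> Dfun Nw xst G x <= 0.
Proof. intro Hx. rewrite Dfun_Psi by auto. enough (0 <= fsum (nN Nw) (fun j => Psi Nw xst G j (xs x j) (- om x j))) by lra.
 apply fsum_nonneg. intro j. pose proof (Psi_ph x j Hx). pose proof (ph_nonneg j (- om x j)). lra. Qed.

Lemma boundary_bound : exists m, 0 < m /\ forall x, InRc x -> ~ InRo x -> m <= Wf x.
Proof.
 destruct (fin_min _ (fun e m => m <= Bc Nw e * hfun (eta xst e + r) (eta xst e) /\ m <= Bc Nw e * hfun (eta xst e - r) (eta xst e))) as [m1 [Hm1 H1]].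
 { intros e d d' Hd [A B]. split; lra. }
 { intro e. set (p1 := Bc Nw e * hfun (eta xst e + r) (eta xst e)). set (p2 := Bc Nw e * hfun (eta xst e - r) (eta xst e)).
   assert (0 < p1). unfold p1. apply Rmult_lt_0_compat. apply HB. apply (hfun_pos _ _ r); auto. replace (eta xst e + r - eta xst e) with r by ring. apply Rabs_right; lra.
   assert (0 < p2). unfold p2. apply Rmult_lt_0_compat. apply HB. apply (hfun_pos _ _ r); auto. replace (eta xst e - r - eta xst e) with (- r) by ring. rewrite Rabs_Ropp. apply Rabs_right; lra.
   exists (Rmin p1 p2). split. apply Rmin_pos; auto. split. apply Rmin_l. apply Rmin_r. }
 destruct (fin_min _ (fun j m => m <= Mc Nw j * (r * r) / 2)) as [m2 [Hm2 H2]].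
 { intros j d d' Hd A. lra. }
 { intro j. exists (Mc Nw j * (r * r) / 2). split. specialize (HM j). assert (0 < r * r) by nra. nra. lra. }
 destruct (fin_min _ (fun j m => forall y, vnorm (vsub y (xs xst j)) = r -> m <= V j y - V j (xs xst j))) as [m3 [Hm3 H3]].
 { intros j d d' Hd A y Hy. specialize (A y Hy). lra. }
 { intro j. destruct (Hr4 j) as [d [Hd Hd']]. apply (V_sphere _ (V j) (G j) (xs xst j) r d); auto. }
 exists (Rmin m1 (Rmin m2 m3)). split. repeat apply Rmin_pos; auto.
 intros x Hx Hno. pose proof (Rmin_l m1 (Rmin m2 m3)). pose proof (Rmin_r m1 (Rmin m2 m3)). pose proof (Rmin_l m2 m3). pose proof (Rmin_r m2 m3).
 destruct (W_parts x Hx) as [P1 [P2 P3]]. unfold Wf, W. destruct Hx as [Hx1 [Hx2 Hx3]].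
 assert (Hcase : (exists e, Rabs (eta x e - eta xst e) = r) \/ (exists j, Rabs (om x j) = r) \/ (exists j, vnorm (vsub (xs x j) (xs xst j)) = r)).
 { apply NNPP. intro Hn. apply Hno. split; [|split].
   - intro e. destruct (Hx1 e); auto. exfalso. apply Hn. left. exists e; auto.
   - intro j. destruct (Hx2 j); auto. exfalso. apply Hn. right. left. exists j; auto.
   - intro j. destruct (Hx3 j); auto. exfalso. apply Hn. right. right. exists j; auto. }
 destruct Hcase as [[e He]|[[j Hj]|[j Hj]]].
 - assert (T : m1 <= Bc Nw e * hfun (eta x e) (eta xst e)).
   { destruct (H1 e) as [A B]. destruct (Rle_dec (eta xst e) (eta x e)).
     rewrite Rabs_right in He by lra. replace (eta x e) with (eta xst e + r) by lra. auto.
     rewrite Rabs_left in He by lra. replace (eta x e) with (eta xst e - r) by lra. auto. }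
   assert (T2 : Bc Nw e * hfun (eta x e) (eta xst e) <= fsum (nE Nw) (fun e => Bc Nw e * hfun (eta x e) (eta xst e))).
   { apply (fsum_term _ (fun e => Bc Nw e * hfun (eta x e) (eta xst e)) e). intro e0. apply Hterm_nonneg. split; auto. }
   lra.
 - assert (T : om x j * om x j = r * r). { destruct (Rle_dec 0 (om x j)). rewrite Rabs_right in Hj by lra. rewrite Hj; ring. rewrite Rabs_left in Hj by lra. rewrite <- Hj. ring. }
   assert (T2 : Mc Nw j * (om x j * om x j) / 2 <= fsum (nN Nw) (fun j => Mc Nw j * (om x j * om x j) / 2)).
   { apply (fsum_term _ (fun j => Mc Nw j * (om x j * om x j) / 2) j). intro i. specialize (HM i). assert (0 <= om x i * om x i) by nra. nra. }
   rewrite T in T2. specialize (H2 j). lra.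
 - assert (T2 : V j (xs x j) - V j (xs xst j) <= fsum (nN Nw) (fun j => V j (xs x j) - V j (xs xst j))).
   { apply (fsum_term _ (fun j => V j (xs x j) - V j (xs xst j)) j). intro i. apply Vterm_nonneg. auto. }
   specialize (H3 j _ Hj). lra.
Qed.

Lemma W_cont x eps : 0 < eps -> exists del, 0 < del /\ forall y, xclose del x y -> Rabs (Wf y - Wf x) < eps.
Proof. intro He.
 assert (Hm : forall d d' (y : state Nw), 0 < d' <= d -> xclose d' x y -> xclose d x y).
 { intros d d' y Hd H. eapply xclose_mono; [|apply H]. lra. }
 destruct (fsum_cont_gen _ (fun j y => Mc Nw j * (om y j * om y j) / 2) (fun d y => xclose d x y) x Hm) with (eps := eps/4) as [d1 [Hd1 H1]].
 { intros j e0 He0. destruct (deriv_cont _ _ _ (d_sq (Mc Nw j) (fun v => v) (om x j) 1 (derivable_pt_lim_id _)) e0 He0) as [d [Hd H]].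
   exists d. split; auto. intros y [_ [Hy _]]. apply H. rewrite Rabs_minus_sym. apply Hy. } lra.
 destruct (fsum_cont_gen _ (fun e y => Bc Nw e * hfun (eta y e) (eta xst e)) (fun d y => xclose d x y) x Hm) with (eps := eps/4) as [d2 [Hd2 H2]].
 { intros e e0 He0. destruct (deriv_cont _ _ _ (d_hfun (Bc Nw e) (fun v => v) (eta x e) 1 (eta xst e) (derivable_pt_lim_id _)) e0 He0) as [d [Hd H]].
   exists d. split; auto. intros y [Hy _]. apply H. rewrite Rabs_minus_sym. apply Hy. } lra.
 destruct (fsum_cont_gen _ (fun j y => V j (xs y j) - V j (xs xst j)) (fun d y => xclose d x y) x Hm) with (eps := eps/4) as [d3 [Hd3 H3]].
 { intros j e0 He0. destruct (V_cont _ (V j) (G j) (HC1 j) (xs x j) e0 He0) as [d [Hd H]].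
   pose proof (pos_INR (nd Nw j)).
   exists (d / (INR (nd Nw j) + 1)). split. apply Rdiv_lt_0_compat; lra. intros y Hy.
   replace (V j (xs y j) - V j (xs xst j) - (V j (xs x j) - V j (xs xst j))) with (V j (xs y j) - V j (xs x j)) by ring.
   apply H. rewrite vsub_sym. eapply Rle_lt_trans. apply (xclose_vnorm Nw _ x y j Hy).
   apply Rmult_lt_reg_r with (INR (nd Nw j) + 1). lra.
   replace (INR (nd Nw j) * (d / (INR (nd Nw j) + 1)) * (INR (nd Nw j) + 1)) with (INR (nd Nw j) * d) by (field; lra). nra. } lra.
 exists (Rmin d1 (Rmin d2 d3)). split. repeat apply Rmin_pos; auto. intros y Hy.
 pose proof (Rmin_l d1 (Rmin d2 d3)). pose proof (Rmin_r d1 (Rmin d2 d3)). pose proof (Rmin_l d2 d3). pose proof (Rmin_r d2 d3).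
 assert (0 < Rmin d1 (Rmin d2 d3)) by (repeat apply Rmin_pos; auto).
 set (dm := Rmin d1 (Rmin d2 d3)) in *. specialize (H1 y (Hm d1 dm y ltac:(lra) Hy)). specialize (H2 y (Hm d2 dm y ltac:(lra) Hy)). specialize (H3 y (Hm d3 dm y ltac:(lra) Hy)).
 unfold Wf, W. simpl in H1, H2, H3.
 set (a1 := fsum (nN Nw) (fun j => Mc Nw j * (om y j * om y j) / 2) - fsum (nN Nw) (fun j => Mc Nw j * (om x j * om x j) / 2)) in *.
 set (a2 := fsum (nE Nw) (fun e => Bc Nw e * hfun (eta y e) (eta xst e)) - fsum (nE Nw) (fun e => Bc Nw e * hfun (eta x e) (eta xst e))) in *.
 set (a3 := fsum (nN Nw) (fun j => V j (xs y j) - V j (xs xst j)) - fsum (nN Nw) (fun j => V j (xs x j) - V j (xs xst j))) in *.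
 match goal with |- Rabs ?E < _ => replace E with (a1 + a2 + a3) by (unfold a1, a2, a3; ring) end.
 eapply Rle_lt_trans. apply Rabs_triang. pose proof (Rabs_triang a1 a2). lra. Qed.

Lemma InRo_open x : InRo x -> exists del, 0 < del /\ forall y, xclose del x y -> InRo y.
Proof. intros [H1 [H2 H3]].
 destruct (fin_min _ (fun e d => d <= r - Rabs (eta x e - eta xst e))) as [d1 [Hd1 D1]]. intros; lra. intro e. exists (r - Rabs (eta x e - eta xst e)). specialize (H1 e). split; lra.
 destruct (fin_min _ (fun j d => d <= r - Rabs (om x j))) as [d2 [Hd2 D2]]. intros; lra. intro j. exists (r - Rabs (om x j)). specialize (H2 j). split; lra.
 destruct (fin_min _ (fun j d => d <= (r - vnorm (vsub (xs x j) (xs xst j))) / (INR (nd Nw j) + 1))) as [d3 [Hd3 D3]]. intros; lra.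
 intro j. exists ((r - vnorm (vsub (xs x j) (xs xst j))) / (INR (nd Nw j) + 1)). specialize (H3 j). pose proof (pos_INR (nd Nw j)). split. apply Rdiv_lt_0_compat; lra. lra.
 exists (Rmin d1 (Rmin d2 d3)). split. repeat apply Rmin_pos; auto.
 pose proof (Rmin_l d1 (Rmin d2 d3)). pose proof (Rmin_r d1 (Rmin d2 d3)). pose proof (Rmin_l d2 d3). pose proof (Rmin_r d2 d3).
 intros y Hy. split; [|split].
 - intro e. destruct Hy as [Hy _]. specialize (Hy e). specialize (D1 e).
   replace (eta y e - eta xst e) with ((eta y e - eta x e) + (eta x e - eta xst e)) by ring.
   eapply Rle_lt_trans. apply Rabs_triang. rewrite Rabs_minus_sym in Hy. lra.
 - intro j. destruct Hy as [_ [Hy _]]. specialize (Hy j). specialize (D2 j).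
   replace (om y j) with ((om y j - om x j) + om x j) by ring.
   eapply Rle_lt_trans. apply Rabs_triang. rewrite Rabs_minus_sym in Hy. lra.
 - intro j. pose proof (xclose_vnorm Nw _ x y j Hy) as Q1. specialize (D3 j). specialize (H3 j). pose proof (pos_INR (nd Nw j)).
   pose proof (vsub_triang _ (xs y j) (xs x j) (xs xst j)) as Q2. rewrite (vsub_sym _ (xs y j) (xs x j)) in Q2.
   assert (INR (nd Nw j) * Rmin d1 (Rmin d2 d3) < r - vnorm (vsub (xs x j) (xs xst j))).
   { apply Rle_lt_trans with (INR (nd Nw j) * ((r - vnorm (vsub (xs x j) (xs xst j))) / (INR (nd Nw j) + 1))).
     apply Rmult_le_compat_l; lra.
     apply Rmult_lt_reg_r with (INR (nd Nw j) + 1). lra.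
     replace (INR (nd Nw j) * ((r - vnorm (vsub (xs x j) (xs xst j))) / (INR (nd Nw j) + 1)) * (INR (nd Nw j) + 1)) with
       (INR (nd Nw j) * (r - vnorm (vsub (xs x j) (xs xst j)))) by (field; lra). nra. }
   lra. Qed.

Lemma InRc_closed x : (forall eps, 0 < eps -> exists y, InRc y /\ xclose eps x y) -> InRc x.
Proof. intro H. split; [|split].
 - intro e. apply Rnot_lt_le. intro Hlt. destruct (H (Rabs (eta x e - eta xst e) - r) ltac:(lra)) as [y [[Hy _] [Hc _]]].
   specialize (Hy e). specialize (Hc e). pose proof (Rabs_triang (eta x e - eta y e) (eta y e - eta xst e)).
   replace (eta x e - eta y e + (eta y e - eta xst e)) with (eta x e - eta xst e) in H0 by ring. lra.
 - intro j. apply Rnot_lt_le. intro Hlt. destruct (H (Rabs (om x j) - r) ltac:(lra)) as [y [[_ [Hy _]] [_ [Hc _]]]].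
   specialize (Hy j). specialize (Hc j). pose proof (Rabs_triang (om x j - om y j) (om y j)).
   replace (om x j - om y j + om y j) with (om x j) in H0 by ring. lra.
 - intro j. apply Rnot_lt_le. intro Hlt. pose proof (pos_INR (nd Nw j)).
   destruct (H ((vnorm (vsub (xs x j) (xs xst j)) - r) / (INR (nd Nw j) + 1))) as [y [[_ [_ Hy]] Hc]].
   apply Rdiv_lt_0_compat; lra.
   pose proof (xclose_vnorm Nw _ x y j Hc). specialize (Hy j). pose proof (vsub_triang _ (xs x j) (xs y j) (xs xst j)).
   assert (INR (nd Nw j) * ((vnorm (vsub (xs x j) (xs xst j)) - r) / (INR (nd Nw j) + 1)) < vnorm (vsub (xs x j) (xs xst j)) - r).
   { apply Rmult_lt_reg_r with (INR (nd Nw j) + 1). lra.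
     replace (INR (nd Nw j) * ((vnorm (vsub (xs x j) (xs xst j)) - r) / (INR (nd Nw j) + 1)) * (INR (nd Nw j) + 1)) with
       (INR (nd Nw j) * (vnorm (vsub (xs x j) (xs xst j)) - r)) by (field; lra). nra. }
   lra. Qed.

Section Traj.
Variable m : R.
Hypothesis Hm : 0 < m.
Hypothesis Hbd : forall x, InRc x -> ~ InRo x -> m <= Wf x.
Variable K : R -> nat -> Prop.
Variable z : R -> nat -> hstate Nw.
Hypothesis Hsol : is_solution K z.
Hypothesis HS0 : InRo (hx (z 0 O)) /\ Wf (hx (z 0 O)) < m.
Hypothesis HI0 : forall j, inI (w0 Nw j) (w1 Nw j) (om (hx (z 0 O)) j) (sg (z 0 O) j).

Definition xt t := hx (z t O).

Lemma sg0 : forall j, sg (z 0 O) j = 0%Z.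
Proof. intro j. destruct HS0 as [[_ [H2 _]] _]. specialize (H2 j). specialize (Hr1 j). specialize (Hw j).
 destruct (HI0 j) as [[A B]|[[A B]|[A B]]]; auto; lra. Qed.

Lemma Dpos : forall t, K t O -> 0 <= t.
Proof. destruct Hsol as [Hd _]. apply (dom_facts K Hd). Qed.
Lemma Ddown : forall t s, K t O -> 0 <= s <= t -> K s O.
Proof. destruct Hsol as [Hd _]. apply (dom_facts K Hd). Qed.
Lemma K0 : K 0 O.
Proof. destruct Hsol as [_ [H _]]. auto. Qed.

Lemma sgt : forall t, K t O -> forall j, sg (z t O) j = 0%Z.
Proof. intros t Ht j. rewrite (sol_sg Nw K z Hsol t Ht). apply sg0. Qed.

Lemma trap : forall t, K t O -> InRo (xt t) /\ Wf (xt t) <= Wf (xt 0).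
Proof.
 intros t Ht. pose proof (Dpos t Ht) as Ht0. set (W0 := Wf (xt 0)). destruct HS0 as [HR0 HW0].
 set (gap := m - W0). assert (Hgap : 0 < gap) by (unfold gap, W0, xt; lra).
 assert (Claim : forall eps, 0 < eps -> eps * (t + 1) < gap ->
           forall s, 0 <= s <= t -> InRo (xt s) /\ Wf (xt s) <= W0 + eps * (s + 1)).
 { intros eps He Hegap.
   apply (real_ind 0 t (fun s => InRo (xt s) /\ Wf (xt s) <= W0 + eps * (s + 1)) Ht0).
   - split. exact HR0. unfold W0. lra.
   - intros c Hc [Qc1 Qc2]. assert (Kc : K c O) by (apply (Ddown t); auto; lra).
     destruct (InRo_open _ Qc1) as [d1 [Hd1 Hd1']].
     destruct (traj_cont Nw K z Hsol c Kc d1 Hd1) as [e1 [He1 He1']].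
     assert (HW : exists e2, 0 < e2 /\ forall s, c < s < c + e2 -> s <= t -> Wf (xt s) <= W0 + eps * (s + 1)).
     { destruct (Req_dec c 0) as [Hc0|Hc0].
       - subst c. destruct (W_cont (xt 0) eps He) as [d2 [Hd2 Hd2']].
         destruct (traj_cont Nw K z Hsol 0 K0 d2 Hd2) as [e2 [He2 He2']].
         exists e2. split; auto. intros s Hs Hst. assert (Ks : K s O) by (apply (Ddown t); auto; lra).
         specialize (He2' s Ks ltac:(rewrite Rabs_right; lra)). apply xclose_sym in He2'.
         specialize (Hd2' _ He2'). apply Rabs_def2 in Hd2'. unfold W0. unfold xt in *. assert (0 <= eps * s) by (apply Rmult_le_pos; lra). lra.
       - assert (Hder : derivable_pt_lim (fun s => Wf (xt s)) c (Dfun Nw xst G (xt c))).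
         { apply W_deriv. auto. intro cc. apply (traj_deriv_all Nw HM HB Hlip K z Hsol sg0 c t Ht). lra. }
         destruct (deriv_right _ c _ eps Hder He) as [e2 [He2 He2']].
         exists e2. split; auto. intros s Hs Hst. specialize (He2' s Hs).
         pose proof (Dfun_nonpos (xt c) (InRo_c _ Qc1)).
         assert ((Dfun Nw xst G (xt c) + eps) * (s - c) <= eps * (s - c)) by (apply Rmult_le_compat_r; lra).
         assert (eps * (c + 1) + eps * (s - c) = eps * (s + 1)) by ring. lra. }
     destruct HW as [e2 [He2 He2']].
     exists (Rmin e1 e2). split. apply Rmin_pos; auto. intros s Hs Hst.
     pose proof (Rmin_l e1 e2). pose proof (Rmin_r e1 e2).
     assert (Ks : K s O) by (apply (Ddown t); auto; lra).
     split. apply Hd1'. apply xclose_sym. apply He1'; auto. rewrite Rabs_right; lra.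
     apply He2'; auto; lra.
   - intros c Hc HQ. assert (Kc : K c O) by (apply (Ddown t); auto; lra).
     assert (HWc : Wf (xt c) <= W0 + eps * (c + 1)).
     { apply Rnot_lt_le. intro Hlt. set (gc := Wf (xt c) - (W0 + eps * (c + 1))).
       destruct (W_cont (xt c) gc ltac:(unfold gc; lra)) as [d [Hd Hd']].
       destruct (traj_cont Nw K z Hsol c Kc d Hd) as [e [He' He'']].
       set (s := Rmax 0 (c - e/2)). assert (0 <= s) by apply Rmax_l.
       assert (s < c). unfold s. apply Rmax_lub_lt; lra.
       assert (c - e < s). unfold s. eapply Rlt_le_trans; [|apply Rmax_r]. lra.
       assert (Ks : K s O) by (apply (Ddown t); auto; lra).
       specialize (He'' s Ks ltac:(rewrite Rabs_left1; lra)). apply xclose_sym in He''.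
       specialize (Hd' _ He''). apply Rabs_def2 in Hd'. destruct (HQ s ltac:(lra)) as [_ Hs].
       assert (eps * (s + 1) <= eps * (c + 1)) by (apply Rmult_le_compat_l; lra). unfold gc in *. unfold xt in *. lra. }
     assert (HRc : InRc (xt c)).
     { apply InRc_closed. intros e' He'. destruct (traj_cont Nw K z Hsol c Kc e' He') as [e [He1 He2]].
       set (s := Rmax 0 (c - e/2)). assert (0 <= s) by apply Rmax_l.
       assert (s < c). unfold s. apply Rmax_lub_lt; lra.
       assert (c - e < s). unfold s. eapply Rlt_le_trans; [|apply Rmax_r]. lra.
       assert (Ks : K s O) by (apply (Ddown t); auto; lra).
       exists (xt s). split. apply InRo_c. apply (HQ s). lra. apply xclose_sym. apply He2; auto. rewrite Rabs_left1; lra. }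
     split; auto. apply NNPP. intro Hno. specialize (Hbd _ HRc Hno).
     assert (eps * (c + 1) <= eps * (t + 1)) by (apply Rmult_le_compat_l; lra). unfold gap, W0 in *. lra. }
 split.
 - apply (Claim (gap / (2 * (t + 1)))). apply Rdiv_lt_0_compat; lra.
   replace (gap / (2 * (t + 1)) * (t + 1)) with (gap / 2) by (field; lra). lra. lra.
 - apply Rnot_lt_le. intro Hlt. set (dd := Rmin gap (Wf (xt t) - W0)).
   assert (Hdd : 0 < dd) by (apply Rmin_pos; unfold W0 in *; lra).
   destruct (Claim (dd / (2 * (t + 1)))) with (s := t) as [_ H]. apply Rdiv_lt_0_compat; lra.
   replace (dd / (2 * (t + 1)) * (t + 1)) with (dd / 2) by (field; lra). pose proof (Rmin_l gap (Wf (xt t) - W0)). unfold dd in *. lra. lra.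
   replace (dd / (2 * (t + 1)) * (t + 1)) with (dd / 2) in H by (field; lra).
   pose proof (Rmin_r gap (Wf (xt t) - W0)). unfold dd in *. lra.
Qed.

Lemma nojump : forall t l, K t l -> l = O.
Proof. intros t l Ht. destruct (Nat.eq_dec l O) as [E|E]; auto. exfalso.
 pose proof Hsol as [Hd [_ [_ [_ Hj]]]]. destruct (dom_facts K Hd) as [_ [_ H3]].
 destruct (H3 t l Ht E) as [t1 [K1 K1']]. destruct (Hj t1 O K1 K1') as [[_ [j Hj']] _].
 destruct (trap t1 K1) as [[_ [Hom _]] _]. specialize (Hom j). pose proof (Hr1 j). pose proof (Hw j).
 rewrite (sgt t1 K1 j) in Hj'. unfold xt in Hom.
 destruct Hj' as [[A B]|[A B]]. lra. lra. Qed.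

Lemma InRc_close x : InRc x -> xclose (r + 1) xst x.
Proof. intros [H1 [H2 H3]]. split; [|split].
 intro e. rewrite Rabs_minus_sym. specialize (H1 e). lra.
 intro j. rewrite om_star. rewrite Rminus_0_l, Rabs_Ropp. specialize (H2 j). lra.
 intros j k. specialize (H3 j). rewrite Rabs_minus_sym.
 assert (Rabs (xs x j k - xs xst j k) <= vnorm (vsub (xs x j) (xs xst j))) by exact (vnorm_coord _ (vsub (xs x j) (xs xst j)) k). lra. Qed.

Lemma flow_bound : exists Lx, 0 < Lx /\ forall x, InRc x -> forall c, Rabs (flowc Nw x c) <= Lx.
Proof. destruct (crd_min Nw (fun c d => forall x, InRc x -> Rabs (flowc Nw x c) <= / d)) as [d [Hd H]].
 - intros c d d' Hd' Hp x Hx. eapply Rle_trans. apply Hp; auto. apply Rinv_le_contravar; lra.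
 - intro c. destruct (flowc_lip Nw HM HB Hlip c) as [Lc [HLc HLc']].
   exists (/ (Rabs (flowc Nw xst c) + Lc * (r + 1) + 1)). split. apply Rinv_0_lt_compat. pose proof (Rabs_pos (flowc Nw xst c)). nra.
   intros x Hx. rewrite Rinv_inv. specialize (HLc' xst x (r + 1) ltac:(lra) (InRc_close x Hx)).
   pose proof (Rabs_triang_inv (flowc Nw x c) (flowc Nw xst c)). rewrite Rabs_minus_sym in HLc'. lra.
 - exists (/ d). split. apply Rinv_0_lt_compat; auto. auto. Qed.

Section Unb.
Hypothesis Hunb : forall t, 0 <= t -> K t O.

Lemma deriv_all t : 0 < t -> forall c, derivable_pt_lim (fun s => getc Nw (xt s) c) t (flowc Nw (xt t) c).
Proof. intros Ht c. apply (traj_deriv_all Nw HM HB Hlip K z Hsol sg0 t (t + 1)). apply Hunb; lra. lra. Qed.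

Lemma inR t : 0 <= t -> InRo (xt t).
Proof. intro Ht. apply (trap t (Hunb t Ht)). Qed.

Lemma Wd t : 0 < t -> derivable_pt_lim (fun s => Wf (xt s)) t (Dfun Nw xst G (xt t)).
Proof. intro Ht. apply W_deriv; auto. intro c. apply deriv_all; auto. Qed.

Lemma W_mono a b : 0 < a <= b -> Wf (xt b) <= Wf (xt a).
Proof. intro Hab. assert (Wf (xt b) - Wf (xt a) <= 0 * (b - a)).
 apply (mono_M (fun s => Wf (xt s))). lra. intros t Ht. exists (Dfun Nw xst G (xt t)). split. apply Wd; lra.
 apply Dfun_nonpos. apply InRo_c. apply inR. lra. lra. Qed.

Lemma coord_move Lx : (forall x, InRc x -> forall c, Rabs (flowc Nw x c) <= Lx) ->
  forall c a b, 0 < a <= b -> Rabs (getc Nw (xt b) c - getc Nw (xt a) c) <= Lx * (b - a).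
Proof. intros HL c a b Hab. apply Rabs_le. split.
 - assert (- Lx * (b - a) <= getc Nw (xt b) c - getc Nw (xt a) c). apply (mono_m (fun s => getc Nw (xt s) c)). lra.
   intros t Ht. exists (flowc Nw (xt t) c). split. apply deriv_all; lra. specialize (HL (xt t) (InRo_c _ (inR t ltac:(lra))) c).
   apply abs_le_inv in HL. lra. lra.
 - apply (mono_M (fun s => getc Nw (xt s) c)). lra.
   intros t Ht. exists (flowc Nw (xt t) c). split. apply deriv_all; lra. specialize (HL (xt t) (InRo_c _ (inR t ltac:(lra))) c).
   apply abs_le_inv in HL. lra. Qed.

Lemma om_to_0 : forall eps, 0 < eps -> exists T, 0 <= T /\ forall t, T <= t -> forall j, Rabs (om (xt t) j) < eps.
Proof.
 intros eps He. apply NNPP. intro Hn.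
 assert (Hbad : forall T, exists t j, T <= t /\ eps <= Rabs (om (xt t) j)).
 { intro T. apply NNPP. intro Hn2. apply Hn. exists (Rmax 0 T). split. apply Rmax_l. intros t Ht j. apply Rnot_le_lt. intro Hle.
   apply Hn2. exists t, j. split; auto. pose proof (Rmax_r 0 T). lra. }
 destruct (Hbad 0) as [t0 [j0 [Ht0 Hj0]]]. destruct (inR t0 Ht0) as [_ [Hr0 _]]. specialize (Hr0 j0).
 assert (Her : eps <= r) by lra.
 set (e := eps / 2).
 destruct (fin_min _ (fun j mm => forall y u, vnorm (vsub y (xs xst j)) <= r -> e <= Rabs u <= r -> mm <= Psi Nw xst G j y u)) as [mm [Hmm Hmm']].
 { intros j d d' Hd Hp y u Hy Hu. specialize (Hp y u Hy Hu). lra. }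
 { intro j. apply (Psi_lower _ (Psi Nw xst G j) (xs xst j) r e). unfold e; lra.
   - intros p u0 eps0 He0. destruct (Psi_cont _ (gs Nw j) (fs Nw j) (G j) (gs Nw j (xs xst j) 0) (Hlip j) (proj2 (HC1 j)) p u0 eps0 He0) as [d [Hd Hd']].
     exists d. split; [exact Hd|]. intros y u Hy Hu. unfold Psi. apply Hd'; auto.
   - intros y u Hy Hu. unfold Psi. specialize (Hpass j u y ltac:(lra) Hy). rewrite !Rminus_0_r in Hpass.
     destruct (Hph j) as [_ Hp]. assert (u <> 0). intro. subst. rewrite Rabs_R0 in Hu. unfold e in Hu. lra.
     specialize (Hp u H). lra. }
 destruct flow_bound as [Lx [HLx HLx']].
 set (tau := e / Lx). assert (Htau : 0 < tau) by (unfold tau, e; apply Rdiv_lt_0_compat; lra).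
 assert (Step : forall t0 j, 1 <= t0 -> eps <= Rabs (om (xt t0) j) -> Wf (xt (t0 + tau)) - Wf (xt t0) <= - mm * (t0 + tau - t0)).
 { intros t1 j Ht1 Hj. apply (mono_M (fun s => Wf (xt s))). lra. intros s Hs. exists (Dfun Nw xst G (xt s)). split. apply Wd; lra.
   assert (HRs : InRc (xt s)) by (apply InRo_c; apply inR; lra).
   rewrite Dfun_Psi by auto.
   assert (Hmv : Rabs (getc Nw (xt s) (CO j) - getc Nw (xt t1) (CO j)) <= Lx * (s - t1)) by (apply coord_move; auto; lra).
   simpl in Hmv.
   assert (Hts : Lx * (s - t1) <= e). { apply Rle_trans with (Lx * tau). apply Rmult_le_compat_l; lra. unfold tau. right; field; lra. }
   assert (e <= Rabs (- om (xt s) j) <= r).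
   { rewrite Rabs_Ropp. destruct HRs as [_ [Hom _]]. split; auto. pose proof (Rabs_triang_inv (om (xt t1) j) (om (xt s) j)).
     rewrite Rabs_minus_sym in Hmv. unfold e in *. lra. }
   specialize (Hmm' j (xs (xt s) j) (- om (xt s) j) (proj2 (proj2 HRs) j) H).
   assert (Psi Nw xst G j (xs (xt s) j) (- om (xt s) j) <= fsum (nN Nw) (fun j => Psi Nw xst G j (xs (xt s) j) (- om (xt s) j))).
   { apply (fsum_term _ (fun j => Psi Nw xst G j (xs (xt s) j) (- om (xt s) j)) j). intro i.
     pose proof (Psi_ph (xt s) i HRs). pose proof (ph_nonneg i (- om (xt s) i)). lra. }
   lra. }
 assert (Iter : forall k : nat, exists t, 1 <= t /\ Wf (xt t) <= Wf (xt 1) - INR k * (mm * tau)).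
 { induction k. exists 1. split. lra. simpl. lra.
   destruct IHk as [tk [Htk Htk']]. destruct (Hbad tk) as [t' [j [Ht' Hj]]].
   exists (t' + tau). split. lra. specialize (Step t' j ltac:(lra) Hj). pose proof (W_mono tk t' ltac:(lra)).
   rewrite S_INR. replace (t' + tau - t') with tau in Step by ring. lra. }
 destruct (nat_larger (Wf (xt 1) / (mm * tau))) as [k Hk].
 destruct (Iter k) as [t [Ht Ht']]. pose proof (W_nonneg (xt t) (InRo_c _ (inR t ltac:(lra)))).
 assert (Wf (xt 1) < INR k * (mm * tau)).
 { apply Rmult_lt_reg_r with (/ (mm * tau)). apply Rinv_0_lt_compat. nra.
   rewrite Rmult_assoc, Rinv_r by nra. rewrite Rmult_1_r. exact Hk. }
 lra. Qed.

Definition Mj j (p : Vec (nd Nw j)) := forall eps, 0 < eps -> forall T, exists t, T <= t /\ vnorm (vsub (xs (xt t) j) p) < eps.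

Lemma Mj_compact j : vcompact (Mj j).
Proof. split.
 - exists (1 + r + vnorm (xs xst j)). intros p Hp. destruct (Hp 1 ltac:(lra) 0) as [t [Ht Ht']].
   destruct (inR t Ht) as [_ [_ H3]]. specialize (H3 j).
   pose proof (vnorm_tri0 _ p (xs (xt t) j)). pose proof (vnorm_tri0 _ (xs (xt t) j) (xs xst j)). rewrite vsub_sym in Ht'. lra.
 - intros x Hx eps He T. destruct (Hx (eps/2) ltac:(lra)) as [y [Hy Hxy]]. destruct (Hy (eps/2) ltac:(lra) T) as [t [Ht Ht']].
   exists t. split; auto. pose proof (vsub_triang _ (xs (xt t) j) y x). rewrite (vsub_sym _ y x) in H. lra. Qed.

Lemma Mj_inv j : invariant_set (fun x => fs Nw j x (- 0)) (Mj j).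
Proof. intros phi Hphi H0 tau0 eps' He' T.
 destruct (lip_pos Nw Hlip j) as [L [HL HL']].
 set (A := Rabs tau0). assert (HA : 0 <= A) by apply Rabs_pos.
 set (eta := eps' / (2 * (2 + (L + 1) * A) * exp (L * A))).
 assert (Heta : 0 < eta). { unfold eta. apply Rdiv_lt_0_compat; auto. pose proof (exp_pos (L * A)). apply Rmult_lt_0_compat; nra. }
 destruct (om_to_0 eta Heta) as [T1 [HT1 HT1']].
 destruct (H0 eta Heta (Rmax (T + A) (Rmax (T1 + A) (1 + A)))) as [s [Hs Hs']].
 pose proof (Rmax_l (T + A) (Rmax (T1 + A) (1 + A))). pose proof (Rmax_r (T + A) (Rmax (T1 + A) (1 + A))).
 pose proof (Rmax_l (T1 + A) (1 + A)). pose proof (Rmax_r (T1 + A) (1 + A)).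
 assert (Hfin : forall X, X <= (eta + eta + (L * eta + eta) * A) * exp (L * A) -> X < eps').
 { intros X HX. assert ((eta + eta + (L * eta + eta) * A) * exp (L * A) = eps' / 2).
   { unfold eta. field. pose proof (exp_pos (L * A)). split; nra. }
   lra. }
 exists (s + tau0). split. pose proof (Rle_abs tau0). pose proof (Rle_abs (- tau0)). rewrite Rabs_Ropp in H5. unfold A in *. lra.
 destruct (Rle_dec 0 tau0) as [Hpos|Hneg].
 - assert (HA' : A = tau0) by (unfold A; rewrite Rabs_right; lra).
   pose proof (gronwall (nd Nw j) (fun sg => xs (xt (s + sg)) j) phi
     (fun sg => fs Nw j (xs (xt (s + sg)) j) (- om (xt (s + sg)) j)) (fun sg => fs Nw j (phi sg) (- 0))
     tau0 L eta eta Hpos HL Heta (Rlt_le _ _ Heta)) as Hg.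
   assert (Hgr : vnorm (vsub (xs (xt (s + tau0)) j) (phi tau0)) <= (vnorm (vsub (xs (xt (s + 0)) j) (phi 0)) + eta + (L * eta + eta) * tau0) * exp (L * tau0)).
   { apply Hg; [| |lra].
     - intros t Ht k. split.
       + apply (d_shift (fun s' => xs (xt s') j k)). apply (deriv_all (s + t) ltac:(lra) (CX j k)).
       + apply Hphi.
     - intros t Ht. destruct (HL' (xs (xt (s + t)) j) (phi t) (- om (xt (s + t)) j) (- 0)) as [Hf _].
       eapply Rle_trans. apply Hf. replace (- om (xt (s + t)) j - - 0) with (- om (xt (s + t)) j) by ring. rewrite Rabs_Ropp.
       specialize (HT1' (s + t) ltac:(lra) j). nra. }
   rewrite Rplus_0_r in Hgr. apply Hfin. eapply Rle_trans. apply Hgr. rewrite <- HA'.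
   apply Rmult_le_compat_r. left; apply exp_pos. lra.
 - assert (HA' : A = - tau0) by (unfold A; rewrite Rabs_left; lra).
   pose proof (gronwall (nd Nw j) (fun sg => xs (xt (s - sg)) j) (fun sg => phi (- sg))
     (fun sg k => - fs Nw j (xs (xt (s - sg)) j) (- om (xt (s - sg)) j) k) (fun sg k => - fs Nw j (phi (- sg)) (- 0) k)
     A L eta eta HA HL Heta (Rlt_le _ _ Heta)) as Hg.
   assert (Hgr : vnorm (vsub (xs (xt (s - A)) j) (phi (- A))) <= (vnorm (vsub (xs (xt (s - 0)) j) (phi (- 0))) + eta + (L * eta + eta) * A) * exp (L * A)).
   { apply Hg; [| |lra].
     - intros t Ht k. split.
       + apply (d_refl (fun s' => xs (xt s') j k)). apply (deriv_all (s - t) ltac:(lra) (CX j k)).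
       + replace (- fs Nw j (phi (- t)) (- 0) k) with (fs Nw j (phi (- t)) (- 0) k * (- 1)) by ring.
         apply (derivable_pt_lim_comp (fun sg => - sg) (fun s' => phi s' k)). apply derivable_pt_lim_opp. apply derivable_pt_lim_id.
         apply Hphi.
     - intros t Ht. rewrite vnorm_neg. destruct (HL' (xs (xt (s - t)) j) (phi (- t)) (- om (xt (s - t)) j) (- 0)) as [Hf _].
       eapply Rle_trans. apply Hf. replace (- om (xt (s - t)) j - - 0) with (- om (xt (s - t)) j) by ring. rewrite Rabs_Ropp.
       specialize (HT1' (s - t) ltac:(lra) j). nra. }
   replace (s - 0) with s in Hgr by ring. replace (- 0) with 0 in Hgr by ring.
   replace (s - A) with (s + tau0) in Hgr by lra. replace (- A) with tau0 in Hgr by lra.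
   apply Hfin. eapply Rle_trans. apply Hgr. apply Rmult_le_compat_r. left; apply exp_pos. lra.
Qed.

Lemma Mj_equil j p : Mj j p -> forall k, fs Nw j p (- 0) k = 0.
Proof. intro Hp. apply (A1ii j (Mj j)); auto. apply Mj_compact. apply Mj_inv. Qed.

Lemma conv_unb : converges_to_equilibria K z.
Proof.
 intros eps He. apply NNPP. intro Hn.
 assert (Hbad : forall n : nat, exists t, INR n <= t /\ ~ exists ze, equilibrium ze /\ zclose eps (z t O) ze).
 { intro n. apply NNPP. intro Hn2. apply Hn. exists (INR n). intros t l Ht Htl. rewrite (nojump t l Ht) in Htl. simpl in Htl.
   rewrite Rplus_0_r in Htl. rewrite (nojump t l Ht). apply NNPP. intro Hn3. apply Hn2. exists t. split; auto. }
 set (ts := fun n => proj1_sig (constructive_indefinite_description _ (Hbad n))).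
 assert (Hts : forall n, INR n <= ts n /\ ~ exists ze, equilibrium ze /\ zclose eps (z (ts n) O) ze).
 { intro n. unfold ts. destruct (constructive_indefinite_description _ (Hbad n)); auto. }
 destruct (crd_min Nw (fun c d => forall x, InRc x -> Rabs (getc Nw x c) <= / d)) as [db [Hdb Hdb']].
 { intros c d d' Hd' Hp x Hx. eapply Rle_trans. apply Hp; auto. apply Rinv_le_contravar; lra. }
 { intro c. exists (/ (Rabs (getc Nw xst c) + r + 2)). split. apply Rinv_0_lt_compat. pose proof (Rabs_pos (getc Nw xst c)). lra.
   intros x Hx. rewrite Rinv_inv. pose proof (InRc_close x Hx). rewrite xclose_getc in H. specialize (H c).
   pose proof (Rabs_triang_inv (getc Nw x c) (getc Nw xst c)). rewrite Rabs_minus_sym in H. lra. }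
 assert (Hts0 : forall n, 0 <= ts n). intro n. pose proof (pos_INR n). pose proof (proj1 (Hts n)). lra.
 destruct (bw_list (crd_list Nw) (fun n c => getc Nw (xt (ts n)) c) (/ db)) as [phi [Hphi Hcv]].
 { intros n c. apply Hdb'. apply InRo_c. apply inR. auto. }
 assert (Hcv' : forall c, exists L, Un_cv (fun n => getc Nw (xt (ts (phi n))) c) L). intro c. apply Hcv. apply crd_list_in.
 set (Lf := fun c => proj1_sig (constructive_indefinite_description _ (Hcv' c))).
 assert (HLf : forall c, Un_cv (fun n => getc Nw (xt (ts (phi n))) c) (Lf c)).
 { intro c. unfold Lf. destruct (constructive_indefinite_description _ (Hcv' c)); auto. }
 set (p := mkc Nw Lf).
 assert (Hp : forall c, Un_cv (fun n => getc Nw (xt (ts (phi n))) c) (getc Nw p c)). intro c. unfold p. rewrite getc_mkc. auto.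
 set (tn := fun n => ts (phi n)).
 assert (Htn : forall n, INR n <= tn n). { intro n. unfold tn. pose proof (proj1 (Hts (phi n))). pose proof (incr_ge phi Hphi n). apply le_INR in H0. lra. }
 assert (Hom : forall j, om p j = 0).
 { intro j. apply NNPP. intro Hne. set (a := Rabs (om p j)). assert (Ha : 0 < a) by (unfold a; apply Rabs_pos_lt; auto).
   destruct (Hp (CO j) (a/2) ltac:(lra)) as [N HN]. destruct (om_to_0 (a/2) ltac:(lra)) as [T [HT HT']].
   destruct (nat_larger T) as [N2 HN2]. specialize (HN (Nat.max N N2) ltac:(lia)). unfold Rdist in HN. simpl in HN.
   specialize (HT' (tn (Nat.max N N2))). assert (INR N2 <= INR (Nat.max N N2)) by (apply le_INR; lia).
   specialize (Htn (Nat.max N N2)). specialize (HT' ltac:(lra) j). unfold tn in HT'.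
   pose proof (Rabs_triang_inv (om p j) (om (xt (ts (phi (Nat.max N N2)))) j)). change (Lf (CO j)) with (om p j) in HN. rewrite Rabs_minus_sym in HN. unfold a in *. lra. }
 assert (HM' : forall j, Mj j (xs p j)).
 { intros j e' He' T.
   assert (Hv : Un_cv (fun n => vnorm (vsub (xs (xt (tn n)) j) (xs p j))) 0).
   { replace 0 with (fsum (nd Nw j) (fun _ => 0)) by (apply fsum_zero; auto).
     apply (fsum_cv _ (fun n k => Rabs (xs (xt (tn n)) j k - xs p j k))). intro k.
     intros e0 He0. destruct (Hp (CX j k) e0 He0) as [N HN]. exists N. intros n Hnn. specialize (HN n Hnn). unfold Rdist in *. simpl in HN.
     rewrite Rminus_0_r, Rabs_Rabsolu. auto. }
   destruct (Hv e' He') as [N HN]. destruct (nat_larger T) as [N2 HN2].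
   exists (tn (Nat.max N N2)). split. specialize (Htn (Nat.max N N2)). assert (INR N2 <= INR (Nat.max N N2)) by (apply le_INR; lia). lra.
   specialize (HN (Nat.max N N2) ltac:(lia)). unfold Rdist in HN. rewrite Rminus_0_r, Rabs_right in HN by (apply Rle_ge, vnorm_nonneg). auto. }
 assert (HF : forall j, Fom Nw p j = 0).
 { intro j. apply NNPP. intro Hne. set (c0 := Rabs (Fom Nw p j)). assert (Hc0 : 0 < c0) by (unfold c0; apply Rabs_pos_lt; auto).
   destruct (flowc_lip Nw HM HB Hlip (CO j)) as [Lc [HLc HLc']]. simpl in HLc'.
   destruct flow_bound as [Lx [HLx HLx']].
   set (d := c0 / (2 * (Lc + 1))). assert (Hd : 0 < d) by (unfold d; apply Rdiv_lt_0_compat; lra).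
   set (tau := d / (2 * Lx)). assert (Htau : 0 < tau) by (unfold tau; apply Rdiv_lt_0_compat; lra).
   assert (Hclose : forall y, xclose d p y -> Rabs (Fom Nw y j - Fom Nw p j) < c0 / 2).
   { intros y Hy. specialize (HLc' p y d ltac:(lra) Hy). rewrite Rabs_minus_sym. eapply Rle_lt_trans. apply HLc'.
     unfold d. apply Rmult_lt_reg_r with (2 * (Lc + 1)). lra.
     replace (Lc * (c0 / (2 * (Lc + 1))) * (2 * (Lc + 1))) with (Lc * c0) by (field; lra). nra. }
   destruct (unif_cv Nw (fun n => xt (tn n)) p Hp (d/2) ltac:(lra)) as [N1 HN1].
   destruct (om_to_0 (c0 * tau / 8)) as [T2 [HT2 HT2']]. apply Rdiv_lt_0_compat; [apply Rmult_lt_0_compat; lra | lra].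
   destruct (nat_larger (Rmax T2 1)) as [N2 HN2]. set (n := Nat.max N1 N2).
   specialize (HN1 n ltac:(unfold n; lia)). simpl in HN1.
   set (t1 := tn n). assert (Ht1 : Rmax T2 1 <= t1). { unfold t1. specialize (Htn n). assert (INR N2 <= INR n) by (apply le_INR; unfold n; lia). lra. }
   pose proof (Rmax_l T2 1). pose proof (Rmax_r T2 1).
   assert (Hin : forall s, t1 <= s <= t1 + tau -> xclose d p (xt s)).
   { intros s Hs. apply xclose_getc. intro cc. apply xclose_sym in HN1. rewrite xclose_getc in HN1. specialize (HN1 cc).
     pose proof (coord_move Lx HLx' cc t1 s ltac:(lra)).
     assert (Lx * (s - t1) <= d / 2). { apply Rle_trans with (Lx * tau). apply Rmult_le_compat_l; lra. unfold tau. right; field; lra. }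
     replace (getc Nw p cc - getc Nw (xt s) cc) with ((getc Nw p cc - getc Nw (xt t1) cc) - (getc Nw (xt s) cc - getc Nw (xt t1) cc)) by ring.
     eapply Rle_lt_trans. apply Rabs_triang. rewrite Rabs_Ropp. unfold t1 in *. lra. }
   assert (Hw1 : Rabs (om (xt t1) j) < c0 * tau / 8) by (apply HT2'; lra).
   assert (Hw2 : Rabs (om (xt (t1 + tau)) j) < c0 * tau / 8) by (apply HT2'; lra).
   destruct (Rle_dec 0 (Fom Nw p j)) as [Hpos|Hneg].
   - assert (Fom Nw p j = c0) by (unfold c0; rewrite Rabs_right; lra).
     assert (c0 / 2 * (t1 + tau - t1) <= om (xt (t1 + tau)) j - om (xt t1) j).
     { apply (mono_m (fun s => om (xt s) j)). lra. intros s Hs. exists (Fom Nw (xt s) j). split.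
       apply (deriv_all s ltac:(lra) (CO j)). specialize (Hclose _ (Hin s Hs)). apply Rabs_def2 in Hclose. lra. }
     apply Rabs_def2 in Hw1. apply Rabs_def2 in Hw2. lra.
   - assert (Fom Nw p j = - c0) by (unfold c0; rewrite Rabs_left; lra).
     assert (om (xt (t1 + tau)) j - om (xt t1) j <= - (c0 / 2) * (t1 + tau - t1)).
     { apply (mono_M (fun s => om (xt s) j)). lra. intros s Hs. exists (Fom Nw (xt s) j). split.
       apply (deriv_all s ltac:(lra) (CO j)). specialize (Hclose _ (Hin s Hs)). apply Rabs_def2 in Hclose. lra. }
     apply Rabs_def2 in Hw1. apply Rabs_def2 in Hw2. lra. }
 set (ze := mkH p (fun _ => 0%Z)).
 assert (HinC : inC ze). { intro j. change (inI (w0 Nw j) (w1 Nw j) (om p j) 0%Z). rewrite Hom. right. left. split. rewrite Rabs_R0. apply Hw. auto. }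
 assert (Heq : equilibrium ze).
 { split. left; auto. split.
   - intros _. split; [|split].
     + intro e. unfold flow_eta. change (om p (src Nw e) - om p (dst Nw e) = 0). rewrite !Hom. ring.
     + intro j. rewrite flow_om_0 by auto. apply HF.
     + intros j k. unfold flow_xs. change (fs Nw j (xs p j) (- om p j) k = 0). rewrite Hom. apply (Mj_equil j (xs p j) (HM' j)).
   - intros [_ [j Hj]]. change (om (hx ze) j) with (om p j) in Hj. rewrite Hom, Rabs_R0 in Hj. pose proof (Hw j). exfalso. destruct Hj as [[A _]|[A _]]; lra. }
 destruct (unif_cv Nw (fun n => xt (tn n)) p Hp eps He) as [N HN].
 apply (proj2 (Hts (phi N))). exists ze. split; auto. split.
 - apply (HN N (le_n N)).
 - intro j. change (sg ze j) with 0%Z. rewrite (sgt (ts (phi N)) (Hunb _ (Hts0 _)) j). simpl IZR. rewrite Rminus_0_r, Rabs_R0. auto.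
Qed.
End Unb.

Lemma sol_conv : converges_to_equilibria K z /\ omega_sigma_to_zero K z.
Proof.
 destruct (classic (exists B, forall t, K t O -> t <= B)) as [[B HB']|Hnb].
 - assert (Hv : forall t l, K t l -> B + 1 <= t + INR l -> False).
   { intros t l Ht Htl. pose proof (nojump t l Ht). subst l. simpl in Htl. specialize (HB' t Ht). lra. }
   split. intros eps He. exists (B + 1). intros t l Ht Htl. exfalso. eapply Hv; eauto.
   split; intros eps He; exists (B + 1); intros t l Ht Htl; exfalso; eapply Hv; eauto.
 - assert (Hunb : forall t, 0 <= t -> K t O).
   { intros t Ht. apply NNPP. intro Hn. apply Hnb. exists t. intros t' Ht'. apply Rnot_lt_le. intro Hlt. apply Hn.
     apply (Ddown t'); auto. lra. }
   split. apply (conv_unb Hunb). split.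
   + intros eps He. destruct (om_to_0 Hunb eps He) as [T [HT HT']]. exists T. intros t l Ht Htl j.
     pose proof (nojump t l Ht). subst l. simpl in Htl. rewrite Rplus_0_r in Htl. apply HT'. auto.
   + intros eps He. exists 0. intros t l Ht Htl j. pose proof (nojump t l Ht). subst l.
     rewrite (sgt t Ht j). simpl IZR. rewrite Rabs_R0. auto.
Qed.
End Traj.

Theorem sec_main : exists S : state Nw -> Prop, open_states S /\ S xst /\
  forall (K : R -> nat -> Prop) (z : R -> nat -> hstate Nw), is_solution K z -> S (hx (z 0 O)) ->
    (forall j, inI (w0 Nw j) (w1 Nw j) (om (hx (z 0 O)) j) (sg (z 0 O) j)) ->
    converges_to_equilibria K z /\ omega_sigma_to_zero K z.
Proof. destruct boundary_bound as [m [Hm Hbd]].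
 exists (fun x => InRo x /\ Wf x < m). split; [|split].
 - intros x [Hx1 Hx2]. destruct (InRo_open x Hx1) as [d1 [Hd1 H1]]. destruct (W_cont x (m - Wf x) ltac:(lra)) as [d2 [Hd2 H2]].
   exists (Rmin d1 d2). split. apply Rmin_pos; auto. intros y Hy. split.
   apply H1. eapply xclose_mono; [|apply Hy]. apply Rmin_l.
   assert (xclose d2 x y). eapply xclose_mono; [|apply Hy]. apply Rmin_r. specialize (H2 y H). apply Rabs_def2 in H2. lra.
 - split. split; [|split].
   + intro e. rewrite Rminus_diag, Rabs_R0. auto.
   + intro j. rewrite om_star, Rabs_R0. auto.
   + intro j. replace (vnorm (vsub (xs xst j) (xs xst j))) with 0. auto.
     symmetry. apply fsum_zero. intro k. unfold vsub. rewrite Rminus_diag, Rabs_R0. auto.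
   + rewrite W_star. auto.
 - intros K z Hsol HS0 HI0. eapply sol_conv; eauto.
Qed.
End Main.

Theorem theorem2 (Nw : Net) (HNw : net_assumptions Nw)
  (A1i : forall j, exists x0 : Vec (nd Nw j), forall k, fs Nw j x0 0 k = 0)
  (A1ii : forall j (wb : R) (M : Vec (nd Nw j) -> Prop),
      vcompact M -> invariant_set (fun x => fs Nw j x (- wb)) M ->
      forall x, M x -> forall k, fs Nw j x (- wb) k = 0)
  (A2 : exists j, forall (xb : Vec (nd Nw j)) (wb : R),
      (forall k, fs Nw j xb (- wb) k = 0) -> wb = 0)
  (zs : hstate Nw) (Heq : equilibrium zs)
  (A3 : forall j, exists V : Vec (nd Nw j) -> R,
      loc_ISP (fs Nw j) (gs Nw j) 0 (xs (hx zs) j) V /\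
      strict_local_min V (xs (hx zs) j))
  (A4 : forall e, Rabs (eta (hx zs) e) < PI / 2) :
  exists S : state Nw -> Prop,
    open_states S /\ S (hx zs) /\
    forall (K : R -> nat -> Prop) (z : R -> nat -> hstate Nw),
      maximal_solution K z ->
      S (hx (z 0 O)) ->
      (forall j, inI (w0 Nw j) (w1 Nw j) (om (hx (z 0 O)) j) (sg (z 0 O) j)) ->
      converges_to_equilibria K z /\ omega_sigma_to_zero K z.
Proof.
 destruct HNw as [_ [_ [Hconn [HM [HB [_ [Hw Hlip]]]]]]].
 set (xst := hx zs).
 destruct Heq as [HCD [Hflow _]].
 assert (HC : inC zs) by (destruct HCD as [H|[H _]]; auto).
 destruct (Hflow HC) as [Feta [Fom0 Fxs]].
 assert (Hsame : forall i j, clos_refl_trans _ (adjacent Nw) i j -> om xst i = om xst j).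
 { intros i j H. induction H as [i j [e [[Hs Hd]|[Hs Hd]]]| |i j k _ IH1 _ IH2].
   - specialize (Feta e). unfold flow_eta in Feta. subst. fold xst in Feta. lra.
   - specialize (Feta e). unfold flow_eta in Feta. subst. fold xst in Feta. lra.
   - reflexivity.
   - congruence. }
 destruct A2 as [j0 Hj0].
 assert (Hom0 : om xst j0 = 0). { apply (Hj0 (xs xst j0)). intro k. apply (Fxs j0 k). }
 assert (om_star : forall j, om xst j = 0). { intro j. rewrite <- (Hsame j0 j (Hconn j0 j)). auto. }
 assert (sg_star : forall j, sg zs j = 0%Z).
 { intro j. specialize (HC j). unfold inI in HC. rewrite om_star in HC. rewrite Rabs_R0 in HC. pose proof (Hw j).
   destruct HC as [[A B]|[[A B]|[A B]]]; auto; lra. }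
 assert (bal : forall j, - pL Nw j + gs Nw j (xs xst j) 0 - outf Nw xst j + inff Nw xst j = 0).
 { intro j. specialize (Fom0 j). rewrite flow_om_0 in Fom0 by auto. unfold Fom in Fom0. fold xst in Fom0.
   rewrite om_star, Ropp_0 in Fom0. specialize (HM j).
   apply (Rmult_eq_compat_r (Mc Nw j)) in Fom0. unfold Rdiv in Fom0. rewrite Rmult_assoc, Rinv_l in Fom0 by lra. lra. }
 assert (A3' : forall j, exists q : (Vec (nd Nw j) -> R) * (R -> Prop) * (Vec (nd Nw j) -> Prop) * (Vec (nd Nw j) -> Vec (nd Nw j)) * (R -> R),
   let '(V, Om, X, G, ph) := q in
   ropen Om /\ Om 0 /\ vopen X /\ X (xs xst j) /\ C1_with_grad V G /\ pos_def ph /\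
   (forall u x, Om u -> X x -> vdot (G x) (fs Nw j x u) <= (u - 0) * (gs Nw j x u - gs Nw j (xs xst j) 0) - ph (u - 0)) /\
   strict_local_min V (xs xst j)).
 { intro j. destruct (A3 j) as [V [[Om [X [G [ph [H1 [H2 [H3 [H4 [H5 [_ [H7 H8]]]]]]]]]]] Hmin]].
   exists (V, Om, X, G, ph). simpl. exact (conj H1 (conj H2 (conj H3 (conj H4 (conj H5 (conj H7 (conj H8 Hmin))))))). }
 set (Q := fun j => proj1_sig (constructive_indefinite_description _ (A3' j))).
 assert (HQ : forall j, let '(V, Om, X, G, ph) := Q j in
   ropen Om /\ Om 0 /\ vopen X /\ X (xs xst j) /\ C1_with_grad V G /\ pos_def ph /\
   (forall u x, Om u -> X x -> vdot (G x) (fs Nw j x u) <= (u - 0) * (gs Nw j x u - gs Nw j (xs xst j) 0) - ph (u - 0)) /\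
   strict_local_min V (xs xst j)).
 { intro j. unfold Q. destruct (constructive_indefinite_description _ (A3' j)); auto. }
 set (V := fun j => let '(V, _, _, _, _) := Q j in V).
 set (Om := fun j => let '(_, Om, _, _, _) := Q j in Om).
 set (X := fun j => let '(_, _, X, _, _) := Q j in X).
 set (G := fun j => let '(_, _, _, G, _) := Q j in G).
 set (ph := fun j => let '(_, _, _, _, ph) := Q j in ph).
 assert (HQ' : forall j, ropen (Om j) /\ Om j 0 /\ vopen (X j) /\ X j (xs xst j) /\ C1_with_grad (V j) (G j) /\ pos_def (ph j) /\
   (forall u x, Om j u -> X j x -> vdot (G j x) (fs Nw j x u) <= (u - 0) * (gs Nw j x u - gs Nw j (xs xst j) 0) - ph j (u - 0)) /\
   strict_local_min (V j) (xs xst j)).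
 { intro j. specialize (HQ j). unfold V, Om, X, G, ph. destruct (Q j) as [[[[V0 Om0] X0] G0] ph0]. exact HQ. }
 destruct (fin_min _ (fun j r => r < w0 Nw j /\ (forall u, Rabs u <= r -> Om j u) /\
      (forall y, vnorm (vsub y (xs xst j)) <= r -> X j y) /\
      (exists d, r < d /\ forall y, 0 < vnorm (vsub y (xs xst j)) < d -> V j (xs xst j) < V j y))) as [r1 [Hr1 Hr1']].
 { intros j d d' Hd [A [B [C [dd [D E]]]]]. split. lra. split. intros u Hu; apply B; lra. split. intros y Hy; apply C; lra.
   exists dd. split. lra. auto. }
 { intro j. destruct (HQ' j) as [HOm [HOm0 [HX [HX0 [_ [_ [_ [dV [HdV HdV']]]]]]]]].
   destruct (HOm 0 HOm0) as [dO [HdO HdO']]. destruct (HX _ HX0) as [dX [HdX HdX']].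
   pose proof (Hw j).
   exists (Rmin (w0 Nw j) (Rmin dO (Rmin dX dV)) / 2). pose proof (Rmin_l (w0 Nw j) (Rmin dO (Rmin dX dV))).
   pose proof (Rmin_r (w0 Nw j) (Rmin dO (Rmin dX dV))). pose proof (Rmin_l dO (Rmin dX dV)). pose proof (Rmin_r dO (Rmin dX dV)).
   pose proof (Rmin_l dX dV). pose proof (Rmin_r dX dV).
   assert (0 < Rmin (w0 Nw j) (Rmin dO (Rmin dX dV))) by (repeat apply Rmin_pos; lra).
   split. lra. split. lra. split. intros u Hu. apply HdO'. rewrite Rminus_0_r. lra.
   split. intros y Hy. apply HdX'. lra. exists dV. split. lra. auto. }
 destruct (fin_min _ (fun e r => Rabs (eta xst e) + r < PI / 2)) as [r2 [Hr2 Hr2']].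
 { intros; lra. }
 { intro e. exists ((PI/2 - Rabs (eta xst e)) / 2). specialize (A4 e). unfold xst. split; lra. }
 set (r := Rmin r1 r2). assert (Hr : 0 < r) by (apply Rmin_pos; auto).
 pose proof (Rmin_l r1 r2). pose proof (Rmin_r r1 r2).
 destruct (sec_main Nw HM HB Hw Hlip xst om_star bal V G ph
   (fun j => proj1 (proj2 (proj2 (proj2 (proj2 (HQ' j))))))
   (fun j => proj1 (proj2 (proj2 (proj2 (proj2 (proj2 (HQ' j)))))))
   r Hr) as [S [HS1 [HS2 HS3]]].
 - intro j. destruct (Hr1' j) as [A _]. unfold r. lra.
 - intros j u y Hu Hy. destruct (HQ' j) as [_ [_ [_ [_ [_ [_ [Hp _]]]]]]]. destruct (Hr1' j) as [_ [B [C _]]].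
   apply Hp. apply B. unfold r in Hu. lra. apply C. unfold r in Hy. lra.
 - intro j. destruct (Hr1' j) as [_ [_ [_ [d [Hd Hd']]]]]. exists d. split. unfold r. lra. auto.
 - intro e. specialize (Hr2' e). unfold r. lra.
 - intros j M HMc HMi x Hx k. apply (A1ii j 0 M HMc HMi x Hx k).
 - exists S. split; auto. split; auto. intros K z [Hsol _] HS0 HI. apply HS3; auto.
Qed.
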